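(* For every $\mathcal{L}_{A}^{\Box}$-formula $\varphi$ the following are equivalent: (1) there exists a closed complete $\mathsf{LK'(A)}$-tableau for $\varphi$; (2) $\varphi$ is $\mathsf{LK(A)}$-derivable; (3) $\varphi$ is $\mathsf{K(A)}$-valid.
   Context: $\mathcal{L}_{A}^{\Box}$-formulas are built from a countably infinite set $\mathrm{Var}$ of variables with binary $\wedge,\vee,\&,\to$, constant $\overline{0}$, unary $\Box$; complexity of a formula = number of connective occurrences. A $\mathsf{K(A)}$-model $\langle W,R,V\rangle$: nonempty $W$, $R\subseteq W\times W$, $V\colon\mathrm{Var}\times W\to[-r,r]$ for some real $r\ge0$, extended by $\wedge=\min$, $\vee=\max$, $\&=+$, $V(\varphi\to\psi,x)=V(\psi,x)-V(\varphi,x)$, $V(\overline{0},x)=0$, $V(\Box\varphi,x)=\inf_{\mathbb{R}}\{V(\varphi,y):Rxy\}$ (empty infimum $=0$). $\varphi$ is $\mathsf{K(A)}$-valid if $V(\varphi,x)\ge0$ in all models at all worlds. Calculus $\mathsf{LK(A)}$: a labelled formula is a pair $\varphi^{k}$ (formula, natural number); $n\,\varphi^{k}$ denotes $n$ copies. Nodes are labelled inequations $\Gamma\rhd\Delta$ ($\rhd\in\{>,\ge\}$, $\Gamma,\Delta$ finite multisets of labelled formulas) or relations $rij$. A tableau is a finite tree of nodes grown by rules: if the nodes above the line occur on a branch, the branch may be extended by the nodes below, except branching rules, which split the branch into two, each extended by one alternative; $\rhd$ is preserved. Rules: ($\overline{0}\rhd$) $\Gamma,\overline{0}^{i}\rhd\Delta$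 gives $\Gamma\rhd\Delta$; ($\rhd\overline{0}$) $\Gamma\rhd\overline{0}^{i},\Delta$ gives $\Gamma\rhd\Delta$; ($\&\rhd$) $\Gamma,(\varphi\&\psi)^{i}\rhd\Delta$ gives $\Gamma,\varphi^{i},\psi^{i}\rhd\Delta$; ($\rhd\&$) $\Gamma\rhd(\varphi\&\psi)^{i},\Delta$ gives $\Gamma\rhd\varphi^{i},\psi^{i},\Delta$; ($\to\rhd$) $\Gamma,(\varphi\to\psi)^{i}\rhd\Delta$ gives $\Gamma,\psi^{i}\rhd\varphi^{i},\Delta$; ($\rhd\to$) $\Gamma\rhd(\varphi\to\psi)^{i},\Delta$ gives $\Gamma,\varphi^{i}\rhd\psi^{i},\Delta$; ($\wedge\rhd$) $\Gamma,(\varphi\wedge\psi)^{i}\rhd\Delta$ gives both $\Gamma,\varphi^{i}\rhd\Delta$ and $\Gamma,\psi^{i}\rhd\Delta$; ($\rhd\wedge$, branching) $\Gamma\rhd(\varphi\wedge\psi)^{i},\Delta$ gives $\Gamma\rhd\varphi^{i},\Delta$ or $\Gamma\rhd\psi^{i},\Delta$; ($\vee\rhd$, branching) $\Gamma,(\varphi\vee\psi)^{i}\rhd\Delta$ gives $\Gamma,\varphi^{i}\rhd\Delta$ or $\Gamma,\psi^{i}\rhd\Delta$; ($\rhd\vee$) $\Gamma\rhd(\varphi\vee\psi)^{i},\Delta$ gives both $\Gamma\rhd\varphi^{i},\Delta$ and $\Gamma\rhd\psi^{i},\Delta$; ($\Box\rhd$) from $rij$ and $\Gamma,(\Box\varphi)^{i}\rhd\Delta$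 add $\varphi^{j}\ge(\Box\varphi)^{i}$; ($\rhd\Box$) from $\Gamma\rhd(\Box\varphi)^{i},\Delta$ add $(\Box\varphi)^{i}\ge\varphi^{j}$ and $rij$, $j$ a new label; (ex) from $rik$ add $rkj$, $j$ new. The system associated to a branch consists of the inequations on it containing only labelled formulas $p^{i}$ ($p\in\mathrm{Var}$) and $(\Box\psi)^{i}$, treated as real variables with each side read as a sum (empty sum $=0$); a branch is closed if the system is unsatisfiable over $\mathbb{R}$, a tableau is closed if all branches are. A tableau for $\varphi$ has root $[\,]>[\varphi^{1}]$ followed by $r12$; $\varphi$ is $\mathsf{LK(A)}$-derivable if some tableau for $\varphi$ is closed. Calculus $\mathsf{LK'(A)}$: for each formula $\Box\varphi$ introduce a new variable $[\Box\varphi]$; $\mathrm{Var}^{*}=\mathrm{Var}\cup\{[\Box\varphi]\}$, formulas are over $\mathrm{Var}^{*}$; the complexity of a labelled inequation is the sum of complexities of its formula occurrences. $\mathsf{LK'(A)}$ has the rules of $\mathsf{LK(A)}$ for $\overline{0},\&,\to,\wedge,\vee$ and (ex), with the two box rules replaced by: ($\Box\rhd'$) from relations $rij_1,\dots,rij_s$ and inequations $\Gamma_t,n_t(\Box\varphi)^{i}\rhd\Delta_t$ ($t=1,\dots,m$) add $\varphi^{j_1}\ge[\Box\varphi]^{i},\dots,\varphi^{j_s}\ge[\Box\varphi]^{i}$ and $\Gamma_t,n_t[\Box\varphi]^{i}\rhd\Delta_t$ ($t=1,\dots,m$); ($\rhd\Box'$) from $\Gamma_t\rhd n_t(\Box\varphi)^{i},\Delta_t$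 ($t=1,\dots,m$) add $[\Box\varphi]^{i}\ge\varphi^{j}$, $rij$ and $\Gamma_t\rhd n_t[\Box\varphi]^{i},\Delta_t$ ($t=1,\dots,m$), with $j$ new. Closedness is as for $\mathsf{LK(A)}$ except that the associated system consists of the inequations containing only labelled formulas $q^{i}$ with $q\in\mathrm{Var}^{*}$. A complete $\mathsf{LK'(A)}$-tableau for $\varphi$ is built as follows, marking inequations active/inactive: (1) start with the active inequation $[\,]>[\varphi^{1}]$ and relation $r12$; (2) if all active labelled inequations have complexity $0$, stop; (3) apply the rules for $\overline{0},\&,\to,\wedge,\vee$ exhaustively to active inequations, making the premise inactive and the conclusions active after each application; (4) fix $i$ such that some $(\Box\psi)^{i}$ occurs in an active inequation, and apply (ex) to every branch $B$ containing $(\Box\chi)^{i}$ for some $\Box\chi$ in an active inequation, obtaining relations $rik_B$ for new $k_B$; (5) for each $(\Box\psi)^{i}$ occurring on the right of an active inequation, apply ($\rhd\Box'$) to the collection of all active inequations $\Gamma_t\rhd n_t(\Box\psi)^{i},\Delta_t$ on a branch (with $(\Box\psi)^{i}$ not in $\Delta_t$), making premises inactive and conclusions active; (6) for each $(\Box\psi)^{i}$ occurring on the left of an active inequation, apply ($\Box\rhd'$) to all active inequations $\Gamma_t,n_t(\Box\psi)^{i}\rhd\Delta_t$ (with $(\Box\psi)^{i}$ not in $\Gamma_t$) and all relations $rij_1,\dots,rij_s$ on a branch, making premises inactive and conclusions active; (7) repeat from (2). *)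

(* Defs.v *)
From Stdlib Require Import Reals List Permutation Relations ClassicalEpsilon.
From Coquelicot Require Import Rbar Lub.
Import ListNotations.
Open Scope R_scope.

(* Formulas.  [Var p] : p ∈ Var = nat.  [BVar φ] is the fresh variable
   [□φ] of LK'(A) (an atom); L_A^□-formulas are the [pure] ones.      *)
Inductive form : Type :=
| Var  : nat -> form
| BVar : form -> form
| Zero : form
| Conj : form -> form -> form
| Disj : form -> form -> form
| Amp  : form -> form -> form
| Imp  : form -> form -> form
| Box  : form -> form.

Fixpoint pure (f : form) : Prop :=
  match f with
  | Var _ | Zero => True
  | BVar _ => False
  | Conj a b | Disj a b | Amp a b | Imp a b => pure a /\ pure b
  | Box a => pure a
  end.

Fixpoint cplx (f : form) : nat :=
  match f with
  | Var _ | BVar _ => 0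
  | Zero => 1
  | Conj a b | Disj a b | Amp a b | Imp a b => S (cplx a + cplx b)
  | Box a => S (cplx a)
  end.

Definition form_eq_dec : forall x y : form, {x = y} + {x <> y}.
Proof. decide equality; apply PeanoNat.Nat.eq_dec. Defined.

(* infimum in R of a set, with the convention inf ∅ = 0 (for a nonempty
   set bounded below, [Glb_Rbar] is its infimum) *)
Definition infR (S : R -> Prop) : R :=
  if excluded_middle_informative (exists t, S t) then real (Glb_Rbar S) else 0.

Fixpoint eval {W : Type} (Rel : W -> W -> Prop) (V : nat -> W -> R)
         (f : form) (x : W) : R :=
  match f with
  | Var p => V p x
  | BVar _ => 0
  | Zero => 0
  | Conj a b => Rmin (eval Rel V a x) (eval Rel V b x)
  | Disj a b => Rmax (eval Rel V a x) (eval Rel V b x)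
  | Amp a b => eval Rel V a x + eval Rel V b x
  | Imp a b => eval Rel V b x - eval Rel V a x
  | Box a => infR (fun t => exists y, Rel x y /\ t = eval Rel V a y)
  end.

Definition KA_valid (phi : form) : Prop :=
  forall (W : Type) (Rel : W -> W -> Prop) (V : nat -> W -> R) (r : R),
    0 <= r -> (forall p x, Rabs (V p x) <= r) ->
    forall x : W, 0 <= eval Rel V phi x.

Definition lf : Type := (form * nat)%type.

(* Γ ▷ Δ ; [strict = true] means ▷ is >, [false] means ≥.
   Multisets are represented by lists (taken up to permutation). *)
Record ineq : Type := mkI { lhs : list lf; strict : bool; rhs : list lf }.

Inductive node : Type :=
| NI : ineq -> node
| NR : nat -> nat -> node.

Definition node_labels (n : node) : list nat :=
  match n with
  | NI P => map snd (lhs P ++ rhs P)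
  | NR i j => [i; j]
  end.

(* system associated to a list of inequations: the inequations all of whose
   labelled formulas satisfy [atom]; variables are the labelled formulas *)
Definition sumv (v : form -> nat -> R) (l : list lf) : R :=
  fold_right (fun x acc => v (fst x) (snd x) + acc) 0 l.

Definition holds (v : form -> nat -> R) (P : ineq) : Prop :=
  if strict P then sumv v (rhs P) < sumv v (lhs P)
  else sumv v (rhs P) <= sumv v (lhs P).

Definition sat_sys (atom : form -> Prop) (Ps : list ineq) : Prop :=
  exists v : form -> nat -> R,
    forall P, In P Ps -> (forall x, In x (lhs P ++ rhs P) -> atom (fst x)) ->
      holds v P.

Definition atomLK (f : form) : Prop :=
  match f with Var _ | Box _ => True | _ => False end.
Definition atomLK' (f : form) : Prop :=
  match f with Var _ | BVar _ => True | _ => False end.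

Inductive alt : Type :=
| One : list ineq -> alt          (* non-branching: add all these nodes *)
| Two : ineq -> ineq -> alt.      (* branching: two alternatives *)

Inductive prop_rule : ineq -> alt -> Prop :=
| r_zero_l G s D i : prop_rule (mkI ((Zero, i) :: G) s D) (One [mkI G s D])
| r_zero_r G s D i : prop_rule (mkI G s ((Zero, i) :: D)) (One [mkI G s D])
| r_amp_l G s D a b i :
    prop_rule (mkI ((Amp a b, i) :: G) s D) (One [mkI ((a, i) :: (b, i) :: G) s D])
| r_amp_r G s D a b i :
    prop_rule (mkI G s ((Amp a b, i) :: D)) (One [mkI G s ((a, i) :: (b, i) :: D)])
| r_imp_l G s D a b i :
    prop_rule (mkI ((Imp a b, i) :: G) s D) (One [mkI ((b, i) :: G) s ((a, i) :: D)])
| r_imp_r G s D a b i :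
    prop_rule (mkI G s ((Imp a b, i) :: D)) (One [mkI ((a, i) :: G) s ((b, i) :: D)])
| r_and_l G s D a b i :
    prop_rule (mkI ((Conj a b, i) :: G) s D)
              (One [mkI ((a, i) :: G) s D; mkI ((b, i) :: G) s D])
| r_and_r G s D a b i :
    prop_rule (mkI G s ((Conj a b, i) :: D))
              (Two (mkI G s ((a, i) :: D)) (mkI G s ((b, i) :: D)))
| r_or_l G s D a b i :
    prop_rule (mkI ((Disj a b, i) :: G) s D)
              (Two (mkI ((a, i) :: G) s D) (mkI ((b, i) :: G) s D))
| r_or_r G s D a b i :
    prop_rule (mkI G s ((Disj a b, i) :: D))
              (One [mkI G s ((a, i) :: D); mkI G s ((b, i) :: D)]).

Definition prop_app (P : ineq) (a : alt) : Prop :=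
  exists P', Permutation (lhs P) (lhs P') /\ Permutation (rhs P) (rhs P') /\
             strict P = strict P' /\ prop_rule P' a.

(* LK(A): closed tableaux, described branch by branch.
   [lk_closed B] : the branch B (list of its nodes) can be grown into a
   finite subtree all of whose branches are closed. *)
Definition ineqs_of (B : list node) : list ineq :=
  flat_map (fun n => match n with NI P => [P] | NR _ _ => [] end) B.

Definition fresh (j : nat) (B : list node) : Prop :=
  ~ In j (flat_map node_labels B).

Inductive lk_closed : list node -> Prop :=
| lk_unsat B : ~ sat_sys atomLK (ineqs_of B) -> lk_closed B
| lk_prop1 B P cs :
    In (NI P) B -> prop_app P (One cs) ->
    lk_closed (B ++ map NI cs) -> lk_closed B
| lk_prop2 B P c1 c2 :
    In (NI P) B -> prop_app P (Two c1 c2) ->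
    lk_closed (B ++ [NI c1]) -> lk_closed (B ++ [NI c2]) -> lk_closed B
| lk_box_l B P phi i j :
    In (NR i j) B -> In (NI P) B -> In (Box phi, i) (lhs P) ->
    lk_closed (B ++ [NI (mkI [(phi, j)] false [(Box phi, i)])]) -> lk_closed B
| lk_box_r B P phi i j :
    In (NI P) B -> In (Box phi, i) (rhs P) -> fresh j B ->
    lk_closed (B ++ [NI (mkI [(Box phi, i)] false [(phi, j)]); NR i j]) ->
    lk_closed B
| lk_ex B i k j :
    In (NR i k) B -> fresh j B -> lk_closed (B ++ [NR k j]) -> lk_closed B.

Definition LKA_derivable (phi : form) : Prop :=
  lk_closed [NI (mkI [] true [(phi, 1%nat)]); NR 1 2].

(* A tableau is represented by the list of its
   branches; a branch is a list of nodes with an activity mark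
   (true = active; relations carry [false], which is irrelevant). *)
Definition mnode : Type := (node * bool)%type.
Definition branch : Type := list mnode.
Definition state : Type := list branch.

Definition act (P : ineq) : mnode := (NI P, true).
Definition bnodes (b : branch) : list node := map fst b.
Definition bfresh (j : nat) (b : branch) : Prop := fresh j (bnodes b).

Inductive pstep : branch -> list branch -> Prop :=
| ps_one b1 b2 P cs :
    prop_app P (One cs) ->
    pstep (b1 ++ (NI P, true) :: b2) [b1 ++ (NI P, false) :: b2 ++ map act cs]
| ps_two b1 b2 P c1 c2 :
    prop_app P (Two c1 c2) ->
    pstep (b1 ++ (NI P, true) :: b2)
          [b1 ++ (NI P, false) :: b2 ++ [act c1];
           b1 ++ (NI P, false) :: b2 ++ [act c2]].

Inductive gstep3 : state -> state -> Prop :=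
| g3 S1 b S2 bs : pstep b bs -> gstep3 (S1 ++ b :: S2) (S1 ++ bs ++ S2).

Definition is_box_or_atom (f : form) : Prop :=
  match f with Var _ | BVar _ | Box _ => True | _ => False end.

Definition prop_exhausted (S : state) : Prop :=
  forall b P x, In b S -> In (NI P, true) b -> In x (lhs P ++ rhs P) ->
    is_box_or_atom (fst x).

Definition all_cplx0 (S : state) : Prop :=
  forall b P x, In b S -> In (NI P, true) b -> In x (lhs P ++ rhs P) ->
    cplx (fst x) = 0%nat.

Definition has_box_at (i : nat) (b : branch) : Prop :=
  exists P psi, In (NI P, true) b /\ In (Box psi, i) (lhs P ++ rhs P).

Definition step4 (i : nat) (b b' : branch) : Prop :=
  (has_box_at i b /\ exists k, bfresh k b /\ b' = b ++ [(NR i k, false)]) \/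
  (~ has_box_at i b /\ b' = b).

Definition lf_eqb (x y : lf) : bool :=
  if form_eq_dec (fst x) (fst y) then PeanoNat.Nat.eqb (snd x) (snd y) else false.

Definition repl (psi : form) (i : nat) (l : list lf) : list lf :=
  map (fun x => if lf_eqb x (Box psi, i) then (BVar psi, i) else x) l.

Definition hasR (psi : form) (i : nat) (m : mnode) : bool :=
  match m with
  | (NI P, true) => existsb (lf_eqb (Box psi, i)) (rhs P)
  | _ => false
  end.
Definition hasL (psi : form) (i : nat) (m : mnode) : bool :=
  match m with
  | (NI P, true) => existsb (lf_eqb (Box psi, i)) (lhs P)
  | _ => false
  end.

Definition deact (h : mnode -> bool) (b : branch) : branch :=
  map (fun m => if h m then (fst m, false) else m) b.

Definition concl5 (psi : form) (i : nat) (b : branch) : branch :=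
  flat_map (fun m => if hasR psi i m then
                       match fst m with
                       | NI P => [act (mkI (lhs P) (strict P) (repl psi i (rhs P)))]
                       | NR _ _ => []
                       end else []) b.
Definition concl6 (psi : form) (i : nat) (b : branch) : branch :=
  flat_map (fun m => if hasL psi i m then
                       match fst m with
                       | NI P => [act (mkI (repl psi i (lhs P)) (strict P) (rhs P))]
                       | NR _ _ => []
                       end else []) b.

Definition succs (i : nat) (b : branch) : list nat :=
  flat_map (fun m => match fst m with
                     | NR i' j => if PeanoNat.Nat.eqb i i' then [j] else []
                     | NI _ => [] end) b.

Definition step5_one (i : nat) (b b' : branch) : Prop :=
  exists psi j, existsb (hasR psi i) b = true /\ bfresh j b /\
    b' = deact (hasR psi i) b ++ concl5 psi i b ++
         [act (mkI [(BVar psi, i)] false [(psi, j)]); (NR i j, false)].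

Definition step6_one (i : nat) (b b' : branch) : Prop :=
  exists psi, existsb (hasL psi i) b = true /\
    b' = deact (hasL psi i) b ++ concl6 psi i b ++
         map (fun j => act (mkI [(psi, j)] false [(BVar psi, i)])) (succs i b).

Definition step5 (i : nat) (b b' : branch) : Prop :=
  clos_refl_trans_1n _ (step5_one i) b b' /\
  forall psi, existsb (hasR psi i) b' = false.
Definition step6 (i : nat) (b b' : branch) : Prop :=
  clos_refl_trans_1n _ (step6_one i) b b' /\
  forall psi, existsb (hasL psi i) b' = false.

Definition step456 (i : nat) (S S' : state) : Prop :=
  Forall2 (fun b b' => exists b4 b5, step4 i b b4 /\ step5 i b4 b5 /\ step6 i b5 b')
          S S'.

Inductive complete_run : state -> state -> Prop :=
| cr_stop S : all_cplx0 S -> complete_run S S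
| cr_round S S3 S6 F :
    ~ all_cplx0 S ->
    clos_refl_trans_1n _ gstep3 S S3 -> prop_exhausted S3 ->
    ((exists i, (exists b, In b S3 /\ has_box_at i b) /\ step456 i S3 S6) \/
     (all_cplx0 S3 /\ S6 = S3)) ->
    complete_run S6 F -> complete_run S F.

Definition init_state (phi : form) : state :=
  [[(NI (mkI [] true [(phi, 1%nat)]), true); (NR 1 2, false)]].

Definition closed' (F : state) : Prop :=
  Forall (fun b => ~ sat_sys atomLK' (ineqs_of (bnodes b))) F.

Definition closed_complete_LK'_tableau (phi : form) : Prop :=
  exists F, complete_run (init_state phi) F /\ closed' F.

(* Main.v *)
Require Import Defs.
From Stdlib Require Import Reals Lra Lia Arith List Permutation Relations ClassicalEpsilon Classical FunctionalExtensionality PropExtensionality.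
From Coquelicot Require Import Rbar Lub.
Import ListNotations.
Open Scope R_scope.

Lemma glb_finite (E : R -> Prop) (B : R) t0 : E t0 -> (forall t, E t -> -B <= t) ->
  exists g, Glb_Rbar E = Finite g /\ (forall t, E t -> g <= t) /\
            (forall c, (forall t, E t -> c <= t) -> c <= g).
Proof.
  intros H0 HB. destruct (Glb_Rbar_correct E) as [Hlb Hgl].
  destruct (Glb_Rbar E) as [g| |] eqn:Hg.
  - exists g; split; [reflexivity|split].
    + intros t Ht. specialize (Hlb t Ht). simpl in Hlb. exact Hlb.
    + intros c Hc. specialize (Hgl (Finite c)). simpl in Hgl. apply Hgl.
      intros t Ht. simpl. apply Hc; auto.
  - specialize (Hlb t0 H0). simpl in Hlb. contradiction.
  - specialize (Hgl (Finite (-B))). simpl in Hgl. exfalso; apply Hgl.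
    intros t Ht; simpl; apply HB; auto.
Qed.

Lemma infR_spec E B t0 : E t0 -> (forall t, E t -> -B <= t) ->
  (forall t, E t -> infR E <= t) /\ (forall c, (forall t, E t -> c <= t) -> c <= infR E).
Proof.
  intros H0 HB. unfold infR. destruct (excluded_middle_informative _) as [_|Hn];
    [|exfalso; apply Hn; eauto].
  destruct (glb_finite E B t0) as [g [Hg [H1 H2]]]; auto. rewrite Hg. simpl. auto.
Qed.

Lemma infR_empty E : ~ (exists t, E t) -> infR E = 0.
Proof. intros H. unfold infR. destruct (excluded_middle_informative _); tauto. Qed.

Lemma infR_ext E1 E2 : (forall t, E1 t <-> E2 t) -> infR E1 = infR E2.
Proof.
  intros H. assert (E1 = E2) as ->; [|reflexivity].
  apply functional_extensionality; intros t; apply propositional_extensionality; auto.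
Qed.

Lemma infR_const c : infR (fun t => t = c) = c.
Proof.
  destruct (infR_spec (fun t => t = c) (- c) c) as [H1 H2]; auto.
  - intros t ->; lra.
  - specialize (H1 c eq_refl). specialize (H2 c (fun t H => ltac:(subst; lra))). lra.
Qed.

Lemma infR_approx E B t0 eps : E t0 -> (forall t, E t -> -B <= t) -> 0 < eps ->
  exists t, E t /\ t < infR E + eps.
Proof.
  intros H0 HB He. destruct (infR_spec E B t0 H0 HB) as [H1 H2].
  apply NNPP; intros Hn.
  assert (infR E + eps <= infR E); [|lra].
  apply H2. intros t Ht. destruct (Rlt_le_dec t (infR E + eps)); auto.
  exfalso; apply Hn; eauto.
Qed.

Fixpoint bnd (f : form) : R :=
  match f with
  | Var _ => 1
  | BVar _ | Zero => 0
  | Conj a b | Disj a b | Amp a b | Imp a b => bnd a + bnd b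
  | Box a => bnd a
  end.

Lemma bnd_pos f : 0 <= bnd f.
Proof. induction f; simpl; lra. Qed.

Lemma eval_bound (W : Type) (Rel : W -> W -> Prop) (V : nat -> W -> R) (r : R) :
  0 <= r -> (forall p x, Rabs (V p x) <= r) ->
  forall f x, Rabs (eval Rel V f x) <= bnd f * r.
Proof.
  intros hr hV f. induction f; intros x; simpl.
  - rewrite Rmult_1_l; auto.
  - rewrite Rabs_R0; lra.
  - rewrite Rabs_R0; lra.
  - specialize (IHf1 x); specialize (IHf2 x).
    unfold Rmin; destruct (Rle_dec _ _); split_Rabs;
      pose proof (bnd_pos f1); pose proof (bnd_pos f2); nra.
  - specialize (IHf1 x); specialize (IHf2 x).
    unfold Rmax; destruct (Rle_dec _ _); split_Rabs;
      pose proof (bnd_pos f1); pose proof (bnd_pos f2); nra.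
  - specialize (IHf1 x); specialize (IHf2 x). split_Rabs;
      pose proof (bnd_pos f1); pose proof (bnd_pos f2); nra.
  - specialize (IHf1 x); specialize (IHf2 x). split_Rabs;
      pose proof (bnd_pos f1); pose proof (bnd_pos f2); nra.
  - set (E := fun t => exists y, Rel x y /\ t = eval Rel V f y).
    destruct (classic (exists t, E t)) as [[t0 Ht0]|Hn].
    + assert (HB : forall t, E t -> - (bnd f * r) <= t).
      { intros t [y [_ ->]]. specialize (IHf y). split_Rabs; lra. }
      destruct (infR_spec E _ t0 Ht0 HB) as [H1 H2].
      specialize (H1 t0 Ht0). specialize (H2 _ HB).
      assert (t0 <= bnd f * r). { destruct Ht0 as [y [_ ->]]. specialize (IHf y). split_Rabs; lra. }
      split_Rabs; lra.
    + rewrite (infR_empty E Hn). rewrite Rabs_R0. pose proof (bnd_pos f). nra.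
Qed.

Lemma box_le (W : Type) (Rel : W -> W -> Prop) (V : nat -> W -> R) (r : R) :
  0 <= r -> (forall p x, Rabs (V p x) <= r) ->
  forall a x y, Rel x y -> eval Rel V (Box a) x <= eval Rel V a y.
Proof.
  intros hr hV a x y Hxy. simpl.
  set (E := fun t => exists y, Rel x y /\ t = eval Rel V a y).
  assert (HB : forall t, E t -> - (bnd a * r) <= t).
  { intros t [z [_ ->]]. pose proof (eval_bound W Rel V r hr hV a z). split_Rabs; lra. }
  destruct (infR_spec E _ (eval Rel V a y) (ex_intro _ y (conj Hxy eq_refl)) HB) as [H1 _].
  apply H1. exists y; auto.
Qed.

Lemma box_ge (W : Type) (Rel : W -> W -> Prop) (V : nat -> W -> R) (r : R) :
  0 <= r -> (forall p x, Rabs (V p x) <= r) ->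
  forall a x c, (exists y, Rel x y) -> (forall y, Rel x y -> c <= eval Rel V a y) ->
  c <= eval Rel V (Box a) x.
Proof.
  intros hr hV a x c [y Hxy] Hc. simpl.
  set (E := fun t => exists y, Rel x y /\ t = eval Rel V a y).
  assert (HB : forall t, E t -> - (bnd a * r) <= t).
  { intros t [z [_ ->]]. pose proof (eval_bound W Rel V r hr hV a z). split_Rabs; lra. }
  destruct (infR_spec E _ (eval Rel V a y) (ex_intro _ y (conj Hxy eq_refl)) HB) as [_ H2].
  apply H2. intros t [z [Hz ->]]. auto.
Qed.

Lemma box_approx (W : Type) (Rel : W -> W -> Prop) (V : nat -> W -> R) (r : R) :
  0 <= r -> (forall p x, Rabs (V p x) <= r) ->
  forall a x eps, (exists y, Rel x y) -> 0 < eps ->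
  exists y, Rel x y /\ eval Rel V a y < eval Rel V (Box a) x + eps.
Proof.
  intros hr hV a x eps [y Hxy] He. simpl.
  set (E := fun t => exists y, Rel x y /\ t = eval Rel V a y).
  assert (HB : forall t, E t -> - (bnd a * r) <= t).
  { intros t [z [_ ->]]. pose proof (eval_bound W Rel V r hr hV a z). split_Rabs; lra. }
  destruct (infR_approx E _ (eval Rel V a y) eps (ex_intro _ y (conj Hxy eq_refl)) HB He)
    as [t [[z [Hz ->]] Ht]].
  exists z; auto.
Qed.

Definition serR {W : Type} (Rel : W -> W -> Prop) (a b : option W) : Prop :=
  match a, b with
  | Some x, Some y => Rel x y
  | Some x, None => ~ exists y, Rel x y
  | None, None => True
  | None, Some _ => False
  end.
Definition serV {W : Type} (V : nat -> W -> R) (p : nat) (a : option W) : R :=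
  match a with Some x => V p x | None => 0 end.

Lemma ser_eval (W : Type) (Rel : W -> W -> Prop) (V : nat -> W -> R) : forall f,
  (forall x, eval (serR Rel) (serV V) f (Some x) = eval Rel V f x) /\
  eval (serR Rel) (serV V) f None = 0.
Proof.
  induction f; simpl; try (split; [intros; reflexivity|reflexivity]).
  - destruct IHf1 as [A1 B1]; destruct IHf2 as [A2 B2]; split;
      [intros x; rewrite A1, A2; reflexivity| rewrite B1, B2; unfold Rmin; destruct (Rle_dec _ _); lra].
  - destruct IHf1 as [A1 B1]; destruct IHf2 as [A2 B2]; split;
      [intros x; rewrite A1, A2; reflexivity| rewrite B1, B2; unfold Rmax; destruct (Rle_dec _ _); lra].
  - destruct IHf1 as [A1 B1]; destruct IHf2 as [A2 B2]; split;
      [intros x; rewrite A1, A2; reflexivity| rewrite B1, B2; lra].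
  - destruct IHf1 as [A1 B1]; destruct IHf2 as [A2 B2]; split;
      [intros x; rewrite A1, A2; reflexivity| rewrite B1, B2; lra].
  - destruct IHf as [A B]. split.
    + intros x. destruct (classic (exists y, Rel x y)) as [Hs|Hn].
      * apply infR_ext. intros t; split.
        -- intros [[y|] [Hy ->]]; simpl in Hy; [exists y; rewrite A; auto| contradiction].
        -- intros [y [Hy ->]]. exists (Some y). simpl. rewrite A; auto.
      * rewrite (infR_empty (fun t => exists y, Rel x y /\ t = eval Rel V f y));
          [|intros [t [y [Hy _]]]; apply Hn; eauto].
        rewrite <- (infR_const 0). apply infR_ext. intros t; split.
        -- intros [[y|] [Hy ->]]; simpl in Hy; [exfalso; apply Hn; eauto| auto].
        -- intros ->. exists None. simpl. auto.
    + rewrite <- (infR_const 0). apply infR_ext. intros t; split.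
      * intros [[y|] [Hy ->]]; simpl in Hy; [contradiction| auto].
      * intros ->. exists None. simpl. auto.
Qed.

Lemma ser_serial (W : Type) (Rel : W -> W -> Prop) : forall a, exists b, serR Rel a b.
Proof.
  intros [x|]; [|exists None; simpl; auto].
  destruct (classic (exists y, Rel x y)) as [[y Hy]|Hn]; [exists (Some y)|exists None]; simpl; auto.
Qed.

Lemma ser_bound (W : Type) (V : nat -> W -> R) (r : R) : 0 <= r ->
  (forall p x, Rabs (V p x) <= r) -> forall p a, Rabs (serV V p a) <= r.
Proof. intros hr hV p [x|]; simpl; auto. rewrite Rabs_R0; auto. Qed.

Definition lin {X : Type} (vs : list X) (a : X -> R) (w : X -> R) : R :=
  fold_right (fun y acc => a y * w y + acc) 0 vs.

Lemma lin_comb {X} (vs : list X) a b s t w :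
  lin vs (fun y => s * a y + t * b y) w = s * lin vs a w + t * lin vs b w.
Proof. induction vs; simpl; [lra|]. rewrite IHvs. ring. Qed.

Lemma lin_ext {X} (vs : list X) a b w w' :
  (forall y, In y vs -> a y * w y = b y * w' y) -> lin vs a w = lin vs b w'.
Proof.
  induction vs; simpl; intros H; auto. rewrite H by auto. rewrite IHvs; auto.
Qed.

Lemma sep_lemma (A B : list R) : (forall a b, In a A -> In b B -> a <= b) ->
  exists t, (forall a, In a A -> a <= t) /\ (forall b, In b B -> t <= b).
Proof.
  induction A as [|a A IH]; intros H.
  - induction B as [|b B IHB].
    + exists 0; split; intros ? [].
    + destruct IHB as [t [_ Ht]]; [intros ? ? []|].
      exists (Rmin b t). split; [intros ? []|].
      intros c [<-|Hc]; [apply Rmin_l|]. eapply Rle_trans; [apply Rmin_r|auto].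
  - destruct IH as [t [H1 H2]]; [intros; apply H; simpl; auto|].
    exists (Rmax a t). split.
    + intros c [<-|Hc]; [apply Rmax_l|]. eapply Rle_trans; [apply H1; auto|apply Rmax_r].
    + intros b Hb. apply Rmax_lub; [apply H; simpl; auto|auto].
Qed.

Lemma sum_in_le {X} (f : X -> R) (l : list X) x : (forall y, 0 <= f y) -> In x l ->
  f x <= fold_right (fun y acc => f y + acc) 0 l.
Proof.
  intros Hp. induction l; simpl; [tauto|]. intros [->|H].
  - assert (0 <= fold_right (fun y acc => f y + acc) 0 l).
    { clear -Hp. induction l; simpl; [lra|]. specialize (Hp a). lra. }
    lra.
  - specialize (IHl H). specialize (Hp a). lra.
Qed.


Definition cstr (X : Type) := ((X -> R) * R)%type.

Lemma inv_abs_nonneg (r : R) : 0 <= / Rabs r.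
Proof.
  destruct (Req_EM_T r 0) as [->|Hy].
  - rewrite Rabs_R0, Rinv_0; lra.
  - left; apply Rinv_0_lt_compat; apply Rabs_pos_lt; auto.
Qed.

Lemma FM (X : Type) (dec : forall a b : X, {a = b} + {a <> b}) :
  forall (vs : list X), NoDup vs -> forall (cs : list (cstr X)),
  (forall eps, 0 < eps -> exists w, forall k, In k cs -> snd k - eps <= lin vs (fst k) w) ->
  exists w, forall k, In k cs -> snd k <= lin vs (fst k) w.
Proof.
  induction vs as [|x xs IH]; intros Hnd cs Happ.
  - exists (fun _ => 0). intros k Hk. simpl.
    apply Rnot_lt_le; intros Hlt.
    destruct (Happ (snd k / 2)) as [w Hw]; [lra|]. specialize (Hw k Hk). simpl in Hw. lra.
  - inversion Hnd as [|? ? Hx Hnd']; subst.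
    set (Z := filter (fun k => if Req_EM_T (fst k x) 0 then true else false) cs).
    set (Pc := filter (fun k => if Rlt_dec 0 (fst k x) then true else false) cs).
    set (Nc := filter (fun k => if Rlt_dec (fst k x) 0 then true else false) cs).
    set (comb := fun (p n : cstr X) =>
      ((fun y => / (fst p x) * fst p y + / (- fst n x) * fst n y),
       / (fst p x) * snd p + / (- fst n x) * snd n) : cstr X).
    set (cs' := Z ++ flat_map (fun p => map (comb p) Nc) Pc).
    assert (HZ : forall k, In k Z <-> In k cs /\ fst k x = 0).
    { intros k. unfold Z. rewrite filter_In. destruct (Req_EM_T _ _); split; intros [? ?]; auto; try discriminate; contradiction. }
    assert (HP : forall k, In k Pc <-> In k cs /\ 0 < fst k x).
    { intros k. unfold Pc. rewrite filter_In. destruct (Rlt_dec _ _); split; intros [? ?]; auto; try discriminate; contradiction. }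
    assert (HN : forall k, In k Nc <-> In k cs /\ fst k x < 0).
    { intros k. unfold Nc. rewrite filter_In. destruct (Rlt_dec _ _); split; intros [? ?]; auto; try discriminate; contradiction. }
    assert (Hcs' : forall k, In k cs' <-> In k Z \/ exists p n, In p Pc /\ In n Nc /\ k = comb p n).
    { intros k. unfold cs'. rewrite in_app_iff, in_flat_map. split.
      - intros [H|[p [Hp Hk]]]; auto. right. apply in_map_iff in Hk. destruct Hk as [n [<- Hn]]. eauto.
      - intros [H|[p [n [Hp [Hn ->]]]]]; auto. right. exists p; split; auto. apply in_map; auto. }
    set (S0 := fold_right (fun k acc => / Rabs (fst k x) + acc) 0 cs).
    assert (HS0 : 0 <= S0).
    { unfold S0. clear. induction cs; simpl; [lra|]. pose proof (inv_abs_nonneg (fst a x)). lra. }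
    set (M := 2 * S0 + 1).
    assert (HMp : 1 <= M) by (unfold M; lra).
    assert (HM : forall k, In k cs -> / Rabs (fst k x) <= S0).
    { intros k Hk. apply (sum_in_le (fun k => / Rabs (fst k x)) cs k); auto.
      intros; apply inv_abs_nonneg. }
    destruct (IH Hnd' cs') as [w0 Hw0].
    { intros eps He.
      set (e0 := eps / (2 * M)).
      assert (He0 : 0 < e0) by (apply Rdiv_lt_0_compat; lra).
      assert (He0M : e0 * (2 * M) = eps) by (unfold e0; field; lra).
      destruct (Happ e0 He0) as [w Hw].
      exists w. intros k Hk. apply Hcs' in Hk. destruct Hk as [Hk|[p [n [Hp [Hn ->]]]]].
      - apply HZ in Hk. destruct Hk as [Hk Hkx]. specialize (Hw k Hk). simpl in Hw.
        rewrite Hkx in Hw. assert (e0 <= eps) by nra. lra.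
      - apply HP in Hp. destruct Hp as [Hp Hpx]. apply HN in Hn. destruct Hn as [Hn Hnx].
        pose proof (Hw p Hp) as H1. pose proof (Hw n Hn) as H2. simpl in H1, H2.
        unfold comb; simpl fst; simpl snd. rewrite lin_comb.
        pose proof (HM p Hp) as Mp. pose proof (HM n Hn) as Mn.
        rewrite Rabs_pos_eq in Mp by lra. rewrite Rabs_left in Mn by lra.
        set (a := fst p x) in *. set (b := - fst n x) in *.
        assert (Hb : 0 < b) by (unfold b; lra).
        replace (fst n x) with (- b) in H2 by (unfold b; ring).
        set (Lp := lin xs (fst p) w) in *. set (Ln := lin xs (fst n) w) in *.
        set (t := w x) in *.
        assert (Ia : / a * a = 1) by (field; lra).
        assert (Ib : / b * b = 1) by (field; lra).
        assert (Pa : 0 < / a) by (apply Rinv_0_lt_compat; lra).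
        assert (Pb : 0 < / b) by (apply Rinv_0_lt_compat; lra).
        assert (A1 : / a * (snd p - e0) <= / a * (a * t + Lp)) by (apply Rmult_le_compat_l; lra).
        assert (A2 : / b * (snd n - e0) <= / b * (- b * t + Ln)) by (apply Rmult_le_compat_l; lra).
        replace (/ a * (a * t + Lp)) with (t + / a * Lp) in A1 by (field; lra).
        replace (/ b * (- b * t + Ln)) with (- t + / b * Ln) in A2 by (field; lra).
        assert (Q1: e0 * / a <= e0 * S0) by (apply Rmult_le_compat_l; lra).
        assert (Q2: e0 * / b <= e0 * S0) by (apply Rmult_le_compat_l; lra).
        assert (Q3: e0 * (2*S0) <= e0 * (2*M)) by (apply Rmult_le_compat_l; unfold M; lra).
        assert (Q4: / a * (snd p - e0) = / a * snd p - e0 * / a) by ring.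
        assert (Q5: / b * (snd n - e0) = / b * snd n - e0 * / b) by ring.
        lra. }
    assert (Hsep : exists t,
      (forall a, In a (map (fun p : cstr X => (snd p - lin xs (fst p) w0) / fst p x) Pc) -> a <= t) /\
      (forall b, In b (map (fun n : cstr X => (lin xs (fst n) w0 - snd n) / (- fst n x)) Nc) -> t <= b)).
    { apply sep_lemma. intros a b Ha Hb.
      apply in_map_iff in Ha. destruct Ha as [p [<- Hp]].
      apply in_map_iff in Hb. destruct Hb as [n [<- Hn]].
      pose proof (Hw0 (comb p n)) as Hc. rewrite Hcs' in Hc.
      specialize (Hc (or_intror (ex_intro _ p (ex_intro _ n (conj Hp (conj Hn eq_refl)))))).
      unfold comb in Hc; simpl fst in Hc; simpl snd in Hc. rewrite lin_comb in Hc.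
      apply HP in Hp. destruct Hp as [_ Hpx]. apply HN in Hn. destruct Hn as [_ Hnx].
      unfold Rdiv. 
      set (a := fst p x) in *. set (b := - fst n x) in *.
      assert (0 < b) by (unfold b; lra).
      set (Lp := lin xs (fst p) w0) in *. set (Ln := lin xs (fst n) w0) in *.
      nra. }
    destruct Hsep as [t [Ht1 Ht2]].
    exists (fun y => if dec y x then t else w0 y).
    assert (Hl : forall a, lin xs a (fun y => if dec y x then t else w0 y) = lin xs a w0).
    { intros a. apply lin_ext. intros y Hy. destruct (dec y x); [subst; contradiction|auto]. }
    intros k Hk. simpl. destruct (dec x x) as [_|]; [|contradiction]. rewrite Hl.
    destruct (Rtotal_order (fst k x) 0) as [Hneg|[Hz|Hpos]].
    + assert (Hn : In k Nc) by (apply HN; auto).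
      specialize (Ht2 _ (in_map _ _ _ Hn)). simpl in Ht2.
      set (b := - fst k x) in *. replace (fst k x) with (- b) by (unfold b; ring).
      assert (0 < b) by (unfold b; lra).
      assert (b * t <= b * ((lin xs (fst k) w0 - snd k) / b)) by (apply Rmult_le_compat_l; lra).
      replace (b * ((lin xs (fst k) w0 - snd k) / b)) with (lin xs (fst k) w0 - snd k) in H0 by (field; lra).
      lra.
    + assert (Hz' : In k Z) by (apply HZ; auto).
      specialize (Hw0 k (proj2 (Hcs' k) (or_introl Hz'))). rewrite Hz. lra.
    + assert (Hp : In k Pc) by (apply HP; auto).
      specialize (Ht1 _ (in_map _ _ _ Hp)). simpl in Ht1.
      set (a := fst k x) in *.
      assert (a * ((snd k - lin xs (fst k) w0) / a) <= a * t) by (apply Rmult_le_compat_l; lra).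
      replace (a * ((snd k - lin xs (fst k) w0) / a)) with (snd k - lin xs (fst k) w0) in H by (field; lra).
      lra.
Qed.

Lemma sumv_app v l1 l2 : sumv v (l1 ++ l2) = sumv v l1 + sumv v l2.
Proof. induction l1; simpl; [lra|]. unfold sumv in *; simpl. rewrite IHl1. ring. Qed.

Lemma sumv_cons v x l : sumv v (x :: l) = v (fst x) (snd x) + sumv v l.
Proof. reflexivity. Qed.

Lemma sumv_nil v : sumv v [] = 0.
Proof. reflexivity. Qed.

Lemma sumv_perm v l l' : Permutation l l' -> sumv v l = sumv v l'.
Proof.
  induction 1; rewrite ?sumv_cons; auto.
  - rewrite IHPermutation; auto.
  - ring.
  - congruence.
Qed.

Lemma sumv_ext v v' l : (forall x, In x l -> v (fst x) (snd x) = v' (fst x) (snd x)) ->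
  sumv v l = sumv v' l.
Proof.
  induction l; intros H; auto. rewrite !sumv_cons. rewrite H by (simpl; auto).
  rewrite IHl; auto. intros; apply H; simpl; auto.
Qed.

Definition slk (val : form -> nat -> R) (P : ineq) : R :=
  sumv val (lhs P) - sumv val (rhs P).

Definition slack_rel (val : form -> nat -> R) (P : ineq) (a : alt) : Prop :=
  match a with
  | One cs => (forall c, In c cs -> strict c = strict P /\ slk val P <= slk val c) /\
              (exists c, In c cs /\ slk val c <= slk val P)
  | Two c1 c2 => strict c1 = strict P /\ strict c2 = strict P /\
              (slk val P <= slk val c1 \/ slk val P <= slk val c2) /\
              slk val c1 <= slk val P /\ slk val c2 <= slk val P
  end.

Lemma prop_slack (val : form -> nat -> R) (Q : form -> Prop)
  (HZ : forall i, Q Zero -> val Zero i = 0)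
  (HA : forall a b i, Q (Amp a b) -> val (Amp a b) i = val a i + val b i)
  (HI : forall a b i, Q (Imp a b) -> val (Imp a b) i = val b i - val a i)
  (HC : forall a b i, Q (Conj a b) -> val (Conj a b) i = Rmin (val a i) (val b i))
  (HD : forall a b i, Q (Disj a b) -> val (Disj a b) i = Rmax (val a i) (val b i))
  (P : ineq) (a : alt) :
  prop_app P a -> (forall x, In x (lhs P ++ rhs P) -> Q (fst x)) -> slack_rel val P a.
Proof.
  intros [P' [Hl [Hr [Hs Hrule]]]] HQ.
  assert (HQ' : forall x, In x (lhs P' ++ rhs P') -> Q (fst x)).
  { intros x Hx. apply HQ. apply in_app_iff in Hx. apply in_app_iff.
    destruct Hx; [left; eapply Permutation_in; [symmetry; eauto|auto]
                 |right; eapply Permutation_in; [symmetry; eauto|auto]]. }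
  assert (Hsl : slk val P = slk val P').
  { unfold slk. rewrite (sumv_perm val _ _ Hl), (sumv_perm val _ _ Hr). reflexivity. }
  unfold slack_rel. rewrite Hsl, Hs. clear Hsl Hs Hl Hr HQ.
  destruct Hrule; unfold slk in *; simpl in *;
    repeat match goal with
    | |- context [val (Amp ?a ?b) ?i] => rewrite (HA a b i) by (apply (HQ' (Amp a b, i)); simpl; rewrite ?in_app_iff; simpl; auto)
    | |- context [val (Imp ?a ?b) ?i] => rewrite (HI a b i) by (apply (HQ' (Imp a b, i)); simpl; rewrite ?in_app_iff; simpl; auto)
    | |- context [val (Conj ?a ?b) ?i] => rewrite (HC a b i) by (apply (HQ' (Conj a b, i)); simpl; rewrite ?in_app_iff; simpl; auto)
    | |- context [val (Disj ?a ?b) ?i] => rewrite (HD a b i) by (apply (HQ' (Disj a b, i)); simpl; rewrite ?in_app_iff; simpl; auto)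
    | |- context [val Zero ?i] => rewrite (HZ i) by (apply (HQ' (Zero, i)); simpl; rewrite ?in_app_iff; simpl; auto)
    end;
    unfold Rmin, Rmax; try destruct (Rle_dec _ _);
    repeat split; intros; simpl in *;
    repeat match goal with H : _ \/ _ |- _ => destruct H | H : False |- _ => contradiction end;
    subst; simpl; try reflexivity; try lra;
    try (eexists; split; [left; reflexivity|simpl; lra]);
    try (eexists; split; [right; left; reflexivity|simpl; lra]);
    try (left; lra); try (right; lra).
Qed.

Definition lf_dec (x y : lf) : {x = y} + {x <> y}.
Proof. decide equality; [apply PeanoNat.Nat.eq_dec|apply form_eq_dec]. Defined.

Lemma lin_zero {X} (vs : list X) w : lin vs (fun _ => 0) w = 0.
Proof. induction vs; simpl; auto. rewrite IHvs; ring. Qed.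

Lemma lin_indic {X} (dec : forall a b : X, {a = b} + {a <> b}) vs x w :
  NoDup vs -> In x vs -> lin vs (fun y => if dec x y then 1 else 0) w = w x.
Proof.
  induction vs as [|a vs IH]; intros Hnd Hin; [destruct Hin|].
  inversion Hnd; subst. simpl. destruct (dec x a) as [->|Hne].
  - rewrite (lin_ext vs _ (fun _ => 0) _ w). rewrite lin_zero. ring.
    intros y Hy. destruct (dec a y); [subst; contradiction|ring].
  - destruct Hin as [->|Hin]; [contradiction|]. rewrite IH; auto. ring.
Qed.

Definition cnt (l : list lf) (y : lf) : R := INR (count_occ lf_dec l y).

Lemma sumv_lin vs l (w : lf -> R) : NoDup vs -> incl l vs ->
  sumv (fun f i => w (f, i)) l = lin vs (cnt l) w.
Proof.
  intros Hnd. induction l as [|x l IH]; intros Hinc.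
  - rewrite sumv_nil. unfold cnt; simpl. rewrite lin_zero. reflexivity.
  - rewrite sumv_cons. rewrite IH by (intros z Hz; apply Hinc; simpl; auto).
    rewrite (lin_ext vs (cnt (x :: l)) (fun y => 1 * (if lf_dec x y then 1 else 0) + 1 * cnt l y) w w).
    + rewrite lin_comb. rewrite (lin_indic lf_dec) by (auto; apply Hinc; simpl; auto).
      destruct x; simpl. ring.
    + intros y _. unfold cnt; simpl. destruct (lf_dec x y); rewrite ?S_INR; ring.
Qed.

Definition atomb (f : form) : bool := match f with Var _ | Box _ => true | _ => false end.

Definition lval {W : Type} (Rel : W -> W -> Prop) (V : nat -> W -> R) (g : nat -> W) :
  form -> nat -> R := fun f i => eval Rel V f (g i).

Definition realz {W : Type} (Rel : W -> W -> Prop) (V : nat -> W -> R) (delta eps : R)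
  (B : list node) : Prop :=
  exists g : nat -> W, (forall i j, In (NR i j) B -> Rel (g i) (g j)) /\
   (forall P, In (NI P) B -> if strict P then delta <= slk (lval Rel V g) P
                            else - eps <= slk (lval Rel V g) P).

Lemma realz_unsat {W : Type} (Rel : W -> W -> Prop) (V : nat -> W -> R) delta B :
  0 < delta -> (forall eps, 0 < eps -> realz Rel V delta eps B) -> sat_sys atomLK (ineqs_of B).
Proof.
  intros Hd Hr.
  set (As := filter (fun P => forallb (fun x => atomb (fst x)) (lhs P ++ rhs P)) (ineqs_of B)).
  set (vs := nodup lf_dec (flat_map (fun P => lhs P ++ rhs P) As)).
  assert (Hnd : NoDup vs) by apply NoDup_nodup.
  assert (Hinc : forall P, In P As -> incl (lhs P) vs /\ incl (rhs P) vs).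
  { intros P HP. split; intros x Hx; apply nodup_In; apply in_flat_map; exists P;
      split; auto; apply in_app_iff; auto. }
  set (cs := map (fun P => ((fun y => 1 * cnt (lhs P) y + (-1) * cnt (rhs P) y),
                          if strict P then delta else 0) : cstr lf) As).
  assert (Hslk : forall (g : nat -> W) P, In P As ->
     slk (lval Rel V g) P = lin vs (fun y => 1 * cnt (lhs P) y + (-1) * cnt (rhs P) y)
                             (fun x => lval Rel V g (fst x) (snd x))).
  { intros g P HP. rewrite lin_comb. unfold slk.
    destruct (Hinc P HP) as [H1 H2].
    rewrite <- (sumv_lin vs (lhs P)) by auto. rewrite <- (sumv_lin vs (rhs P)) by auto.
    simpl. change (fun (f : form) (i : nat) => lval Rel V g f i) with (lval Rel V g). ring. }
  destruct (FM lf lf_dec vs Hnd cs) as [w Hw].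
  - intros eps He. destruct (Hr eps He) as [g [_ Hg]].
    exists (fun x => lval Rel V g (fst x) (snd x)). intros k Hk.
    unfold cs in Hk. apply in_map_iff in Hk. destruct Hk as [P [<- HP]]. simpl.
    rewrite <- Hslk by auto.
    assert (HB : In (NI P) B).
    { unfold As in HP. apply filter_In in HP. destruct HP as [HP _].
      unfold ineqs_of in HP. apply in_flat_map in HP. destruct HP as [[Q|] [HQ HPQ]];
        simpl in HPQ; [destruct HPQ as [<-|[]]; auto|destruct HPQ]. }
    specialize (Hg P HB). destruct (strict P); lra.
  - exists (fun f i => w (f, i)). intros P HP Hat.
    assert (HPA : In P As).
    { unfold As. apply filter_In. split; auto. apply forallb_forall.
      intros x Hx. specialize (Hat x Hx). destruct x as [[] ?]; simpl in *; auto. }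
    assert (Hc := Hw _ (in_map _ _ _ HPA)). simpl in Hc.
    destruct (Hinc P HPA) as [H1 H2].
    rewrite lin_comb in Hc. rewrite <- (sumv_lin vs (lhs P) w) in Hc by auto.
    rewrite <- (sumv_lin vs (rhs P) w) in Hc by auto.
    unfold holds. destruct (strict P); lra.
Qed.

Lemma fresh_node j B n : fresh j B -> In n B -> ~ In j (node_labels n).
Proof. intros Hf Hn Hj. apply Hf. apply in_flat_map. eauto. Qed.

Lemma fresh_lf j B P x : fresh j B -> In (NI P) B -> In x (lhs P ++ rhs P) -> snd x <> j.
Proof.
  intros Hf Hn Hx Heq. apply (fresh_node j B (NI P) Hf Hn). simpl. rewrite <- Heq.
  apply in_map; auto.
Qed.

Definition upd {W : Type} (g : nat -> W) (j : nat) (y : W) : nat -> W :=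
  fun l => if PeanoNat.Nat.eq_dec l j then y else g l.

Lemma realz_upd {W : Type} (Rel : W -> W -> Prop) (V : nat -> W -> R) delta eps B g j y :
  fresh j B ->
  (forall i j, In (NR i j) B -> Rel (g i) (g j)) ->
  (forall P, In (NI P) B -> if strict P then delta <= slk (lval Rel V g) P
                            else - eps <= slk (lval Rel V g) P) ->
  (forall a b, In (NR a b) B -> Rel (upd g j y a) (upd g j y b)) /\
  (forall P, In (NI P) B -> if strict P then delta <= slk (lval Rel V (upd g j y)) P
                            else - eps <= slk (lval Rel V (upd g j y)) P).
Proof.
  intros Hf H1 H2. split.
  - intros a b Hab. pose proof (fresh_node j B _ Hf Hab) as Hn. simpl in Hn.
    unfold upd. destruct (PeanoNat.Nat.eq_dec a j); [subst; tauto|].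
    destruct (PeanoNat.Nat.eq_dec b j); [subst; tauto|]. auto.
  - intros P HP. specialize (H2 P HP).
    assert (E : slk (lval Rel V (upd g j y)) P = slk (lval Rel V g) P).
    { unfold slk. f_equal; apply sumv_ext; intros x Hx; unfold lval, upd;
        destruct (PeanoNat.Nat.eq_dec (snd x) j) as [He|]; auto;
        exfalso; apply (fresh_lf j B P x Hf HP); auto; apply in_app_iff; auto. }
    rewrite E. auto.
Qed.

Lemma realz_mono {W : Type} (Rel : W -> W -> Prop) (V : nat -> W -> R) delta e e' B :
  e <= e' -> realz Rel V delta e B -> realz Rel V delta e' B.
Proof.
  intros He [g [H1 H2]]. exists g; split; auto. intros P HP. specialize (H2 P HP).
  destruct (strict P); lra.
Qed.

Lemma lval_prop {W : Type} (Rel : W -> W -> Prop) (V : nat -> W -> R) g P a :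
  prop_app P a -> slack_rel (lval Rel V g) P a.
Proof.
  intros H. apply (prop_slack _ (fun _ => True)); auto.
Qed.

Lemma lk_sound {W : Type} (Rel : W -> W -> Prop) (V : nat -> W -> R) (r : R) :
  0 <= r -> (forall p x, Rabs (V p x) <= r) -> (forall x, exists y, Rel x y) ->
  forall delta, 0 < delta ->
  forall B, lk_closed B -> (forall eps, 0 < eps -> realz Rel V delta eps B) -> False.
Proof.
  intros hr hV hser delta hd B Hcl. induction Hcl as
    [B Hu|B P cs HP Happ Hcl IH|B P c1 c2 HP Happ Hcl1 IH1 Hcl2 IH2
    |B P phi i j HR HP Hin Hcl IH|B P phi i j HP Hin Hf Hcl IH|B i k j HR Hf Hcl IH]; intros Hre.
  - apply Hu. apply (realz_unsat Rel V delta); auto.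
  - apply IH. intros eps He. destruct (Hre eps He) as [g [Hg1 Hg2]]. exists g. split.
    + intros a b Hab. apply in_app_iff in Hab. destruct Hab as [Hab|Hab]; auto.
      apply in_map_iff in Hab. destruct Hab as [? [? _]]; discriminate.
    + intros Q HQ. apply in_app_iff in HQ. destruct HQ as [HQ|HQ]; [apply Hg2; auto|].
      apply in_map_iff in HQ. destruct HQ as [c [Hc HQ]]. injection Hc as <-.
      pose proof (lval_prop Rel V g P _ Happ) as [Hs _]. destruct (Hs c HQ) as [Hst Hle].
      specialize (Hg2 P HP). rewrite Hst. destruct (strict P); lra.
  - destruct (not_all_ex_not _ _ (fun H => IH1 H)) as [e1 He1].
    destruct (not_all_ex_not _ _ (fun H => IH2 H)) as [e2 He2].
    apply imply_to_and in He1. apply imply_to_and in He2.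
    destruct He1 as [Pe1 He1]. destruct He2 as [Pe2 He2].
    assert (Pe : 0 < Rmin e1 e2) by (apply Rmin_glb_lt; auto).
    destruct (Hre _ Pe) as [g [Hg1 Hg2]].
    pose proof (lval_prop Rel V g P _ Happ) as [Hs1 [Hs2 [Hor _]]].
    pose proof (Hg2 P HP) as HgP.
    pose proof (Rmin_l e1 e2). pose proof (Rmin_r e1 e2).
    destruct Hor as [Ho|Ho]; [apply He1|apply He2]; exists g; split.
    + intros a b Hab. apply in_app_iff in Hab. destruct Hab as [Hab|[Hab|[]]]; [auto|discriminate].
    + intros Q HQ. apply in_app_iff in HQ. destruct HQ as [HQ|[HQ|[]]].
      * specialize (Hg2 Q HQ). destruct (strict Q); lra.
      * injection HQ as <-. rewrite Hs1. destruct (strict P); lra.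
    + intros a b Hab. apply in_app_iff in Hab. destruct Hab as [Hab|[Hab|[]]]; [auto|discriminate].
    + intros Q HQ. apply in_app_iff in HQ. destruct HQ as [HQ|[HQ|[]]].
      * specialize (Hg2 Q HQ). destruct (strict Q); lra.
      * injection HQ as <-. rewrite Hs2. destruct (strict P); lra.
  - apply IH. intros eps He. destruct (Hre eps He) as [g [Hg1 Hg2]]. exists g. split.
    + intros a b Hab. apply in_app_iff in Hab. destruct Hab as [Hab|[Hab|[]]]; [auto|discriminate].
    + intros Q HQ. apply in_app_iff in HQ. destruct HQ as [HQ|[HQ|[]]]; [apply Hg2; auto|].
      injection HQ as <-. simpl. unfold slk, sumv; simpl.
      unfold lval. pose proof (box_le W Rel V r hr hV phi (g i) (g j) (Hg1 i j HR)). lra.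
  - apply IH. intros eps He. destruct (Hre eps He) as [g [Hg1 Hg2]].
    destruct (box_approx W Rel V r hr hV phi (g i) eps (hser (g i)) He) as [y [Hy1 Hy2]].
    destruct (realz_upd Rel V delta eps B g j y Hf Hg1 Hg2) as [G1 G2].
    assert (Hij : i <> j).
    { intros ->. apply (fresh_lf j B P (Box phi, j) Hf HP); auto. apply in_app_iff; auto. }
    exists (upd g j y). split.
    + intros a b Hab. apply in_app_iff in Hab. destruct Hab as [Hab|[Hab|[Hab|[]]]]; [apply G1; auto|discriminate|].
      injection Hab as <- <-. unfold upd.
      destruct (PeanoNat.Nat.eq_dec i j); [contradiction|].
      destruct (PeanoNat.Nat.eq_dec j j); [auto|contradiction].
    + intros Q HQ. apply in_app_iff in HQ. destruct HQ as [HQ|[HQ|[HQ|[]]]]; [apply G2; auto| |discriminate].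
      injection HQ as <-. simpl. unfold slk, sumv; simpl.
      unfold lval, upd. destruct (PeanoNat.Nat.eq_dec i j); [contradiction|].
      destruct (PeanoNat.Nat.eq_dec j j); [|contradiction]. lra.
  - apply IH. intros eps He. destruct (Hre eps He) as [g [Hg1 Hg2]].
    destruct (hser (g k)) as [y Hy].
    destruct (realz_upd Rel V delta eps B g j y Hf Hg1 Hg2) as [G1 G2].
    assert (Hkj : k <> j).
    { intros ->. apply (fresh_node j B _ Hf HR). simpl; auto. }
    exists (upd g j y). split.
    + intros a b Hab. apply in_app_iff in Hab. destruct Hab as [Hab|[Hab|[]]]; auto; try discriminate.
      injection Hab as <- <-. unfold upd.
      destruct (PeanoNat.Nat.eq_dec k j); [contradiction|].
      destruct (PeanoNat.Nat.eq_dec j j); [auto|contradiction].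
    + intros Q HQ. apply in_app_iff in HQ. destruct HQ as [HQ|[HQ|[]]]; [apply G2; auto|discriminate].
Qed.

Theorem LK_sound_valid (phi : form) : LKA_derivable phi -> KA_valid phi.
Proof.
  intros Hd W Rel V r hr hV x.
  destruct (Rle_lt_dec 0 (eval Rel V phi x)) as [|Hlt]; auto. exfalso.
  destruct (ser_serial W Rel (Some x)) as [y Hy].
  apply (lk_sound (serR Rel) (serV V) r hr (ser_bound W V r hr hV) (ser_serial W Rel)
           (- eval Rel V phi x)) with (B := [NI (mkI [] true [(phi, 1%nat)]); NR 1 2]);
    [lra|exact Hd|].
  intros eps He. exists (fun l => if PeanoNat.Nat.eq_dec l 2 then y else Some x). split.
  - intros a b [H|[H|[]]]; [discriminate|]. injection H as <- <-. simpl. exact Hy.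
  - intros P [H|[H|[]]]; [|discriminate]. injection H as <-. simpl.
    unfold slk, sumv; unfold lval; simpl.
    rewrite (proj1 (ser_eval W Rel V phi)). lra.
Qed.

Definition isub (a f : form) : Prop :=
  match f with
  | Conj b c | Disj b c | Amp b c | Imp b c => a = b \/ a = c
  | _ => False
  end.

Definition concl (a : alt) : list ineq := match a with One cs => cs | Two c1 c2 => [c1; c2] end.

Lemma prop_lfs P a : prop_app P a -> forall c, In c (concl a) -> forall x, In x (lhs c ++ rhs c) ->
  exists y, In y (lhs P ++ rhs P) /\ snd y = snd x /\ (x = y \/ isub (fst x) (fst y)).
Proof.
  intros [P' [Hl [Hr [_ Hrule]]]] c Hc x Hx.
  assert (Hp : forall y, In y (lhs P' ++ rhs P') -> In y (lhs P ++ rhs P)).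
  { intros y Hy. apply in_app_iff in Hy; apply in_app_iff.
    destruct Hy; [left; eapply Permutation_in; [symmetry; eauto|auto]
                 |right; eapply Permutation_in; [symmetry; eauto|auto]]. }
  assert (exists y, In y (lhs P' ++ rhs P') /\ snd y = snd x /\ (x = y \/ isub (fst x) (fst y)))
    as [y [Hy1 Hy2]]; [|exists y; split; auto].
  destruct Hrule; simpl in Hc;
    repeat match goal with H : _ \/ _ |- _ => destruct H | H : False |- _ => contradiction end;
    subst; simpl in *; rewrite ?in_app_iff in *; simpl in *;
    repeat match goal with H : _ \/ _ |- _ => destruct H end; subst;
    try solve [eexists; split; [rewrite ?in_app_iff; simpl; eauto 6|split; [reflexivity|auto]]];
    try solve [eexists; split; [rewrite ?in_app_iff; simpl; left; left; reflexivity|simpl; auto]];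
    try solve [eexists; split; [rewrite ?in_app_iff; simpl; right; left; reflexivity|simpl; auto]];
    try solve [eexists; split; [rewrite ?in_app_iff; simpl; left; reflexivity|simpl; auto]];
    try solve [exists x; split; [apply in_app_iff; simpl; tauto | auto]];
    try solve [eexists; split; [apply in_app_iff; simpl; right; left; reflexivity | simpl; auto]].
Qed.

Fixpoint sg (f : form) : form :=
  match f with
  | Var p => Var p
  | BVar a => Box (sg a)
  | Zero => Zero
  | Conj a b => Conj (sg a) (sg b)
  | Disj a b => Disj (sg a) (sg b)
  | Amp a b => Amp (sg a) (sg b)
  | Imp a b => Imp (sg a) (sg b)
  | Box a => Box (sg a)
  end.

Lemma sg_pure f : pure f -> sg f = f.
Proof. induction f; simpl; intros; try tauto; f_equal; tauto. Qed.

Definition mlf (rho : nat -> nat) (x : lf) : lf := (sg (fst x), rho (snd x)).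
Definition mineq rho (P : ineq) : ineq :=
  mkI (map (mlf rho) (lhs P)) (strict P) (map (mlf rho) (rhs P)).
Definition mnd rho (n : node) : node :=
  match n with NI P => NI (mineq rho P) | NR i j => NR (rho i) (rho j) end.
Definition malt rho (a : alt) : alt :=
  match a with One cs => One (map (mineq rho) cs) | Two c1 c2 => Two (mineq rho c1) (mineq rho c2) end.

Lemma prop_app_map rho P a : prop_app P a -> prop_app (mineq rho P) (malt rho a).
Proof.
  intros [P' [Hl [Hr [Hs Hrule]]]]. exists (mineq rho P'). split; [|split; [|split]].
  - apply Permutation_map; auto.
  - apply Permutation_map; auto.
  - simpl; auto.
  - destruct Hrule; simpl; constructor.
Qed.

Definition LInv (B : list node) : Prop :=
  forall l, In l (flat_map node_labels B) -> exists m, In (NR l m) B \/ In (NR m l) B.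

Definition Sim (rho : nat -> nat) (b : branch) (B : list node) : Prop :=
  (forall n, In n (bnodes b) -> In (mnd rho n) B) /\ LInv B.

Lemma fresh_exists (B : list node) : exists j, fresh j B.
Proof.
  assert (forall l : list nat, exists j, forall x, In x l -> (x < j)%nat) as H.
  { induction l as [|a l [j Hj]]; [exists 0%nat; intros ? []|].
    exists (S (Nat.max a j)). intros x [<-|Hx]; [lia|]. specialize (Hj x Hx). lia. }
  destruct (H (flat_map node_labels B)) as [j Hj]. exists j. intros Hin. specialize (Hj j Hin). lia.
Qed.

Lemma bnodes_app b1 b2 : bnodes (b1 ++ b2) = bnodes b1 ++ bnodes b2.
Proof. unfold bnodes; apply map_app. Qed.

Lemma bnodes_deact h b : bnodes (deact h b) = bnodes b.
Proof. unfold bnodes, deact. rewrite map_map. apply map_ext. intros m. destruct (h m); reflexivity. Qed.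

Lemma sumv_map rho v l : sumv v (map (mlf rho) l) = sumv (fun f i => v (sg f) (rho i)) l.
Proof. induction l; simpl; auto. unfold sumv in *; simpl. rewrite IHl. reflexivity. Qed.

Lemma Sim_unsat rho b B : Sim rho b B -> sat_sys atomLK (ineqs_of B) ->
  sat_sys atomLK' (ineqs_of (bnodes b)).
Proof.
  intros [HS _] [v Hv]. exists (fun f i => v (sg f) (rho i)). intros P HP Hat.
  assert (HB : In (mineq rho P) (ineqs_of B)).
  { unfold ineqs_of in *. apply in_flat_map in HP. destruct HP as [[Q|] [HQ HPQ]];
      simpl in HPQ; [|contradiction]. destruct HPQ as [->|[]].
    apply in_flat_map. exists (NI (mineq rho P)). split; [apply (HS (NI P)); auto|simpl; auto]. }
  specialize (Hv _ HB). unfold holds in *. simpl in Hv. rewrite !sumv_map in Hv. apply Hv.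
  intros x Hx. simpl in Hx. rewrite <- map_app in Hx. apply in_map_iff in Hx.
  destruct Hx as [y [<- Hy]]. specialize (Hat y Hy). destruct y as [[] ?]; simpl in *; auto.
Qed.

Definition Good1 (b : branch) : Prop := forall rho B, Sim rho b B -> lk_closed B.
Definition Good (S : state) : Prop := forall b, In b S -> Good1 b.

Lemma in_bnodes n b : In n (bnodes b) <-> exists m, In (n, m) b.
Proof.
  unfold bnodes. rewrite in_map_iff. split.
  - intros [[n' m] [Hn Hin]]; simpl in Hn; subst; eauto.
  - intros [m Hm]; exists (n, m); auto.
Qed.

Lemma LInv_prop B P a : LInv B -> In (NI P) B -> prop_app P a ->
  forall cs, incl cs (concl a) -> LInv (B ++ map NI cs).
Proof.
  intros HL HP Ha cs Hcs l Hl. rewrite flat_map_app in Hl. apply in_app_iff in Hl.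
  destruct Hl as [Hl|Hl].
  - destruct (HL l Hl) as [m Hm]. exists m. rewrite !in_app_iff. tauto.
  - apply in_flat_map in Hl. destruct Hl as [n [Hn Hl]]. apply in_map_iff in Hn.
    destruct Hn as [c [<- Hc]]. simpl in Hl. apply in_map_iff in Hl. destruct Hl as [x [<- Hx]].
    destruct (prop_lfs P a Ha c (Hcs c Hc) x Hx) as [y [Hy [Hyx _]]].
    destruct (HL (snd x)) as [m Hm].
    + apply in_flat_map. exists (NI P). split; auto. simpl. rewrite <- Hyx. apply in_map; auto.
    + exists m. rewrite !in_app_iff. tauto.
Qed.

Lemma in_bn_app n b1 b2 : In n (bnodes (b1 ++ b2)) <-> In n (bnodes b1) \/ In n (bnodes b2).
Proof. rewrite bnodes_app, in_app_iff. tauto. Qed.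
Lemma in_bn_cons n x b : In n (bnodes (x :: b)) <-> fst x = n \/ In n (bnodes b).
Proof. reflexivity. Qed.
Lemma in_bn_act n cs : In n (bnodes (map act cs)) <-> exists c, In c cs /\ n = NI c.
Proof.
  unfold bnodes, act. rewrite map_map. simpl. rewrite in_map_iff. split.
  - intros [c [<- Hc]]; eauto.
  - intros [c [Hc ->]]; eauto.
Qed.
Ltac bn := repeat (rewrite ?in_bn_app, ?in_bn_cons, ?in_bn_act in *; simpl fst in *).

Lemma good_pstep b bs : pstep b bs -> (forall b', In b' bs -> Good1 b') -> Good1 b.
Proof.
  intros Hp Hg rho B [HS HL]. destruct Hp as [b1 b2 P cs Ha|b1 b2 P c1 c2 Ha].
  - assert (HPB : In (NI (mineq rho P)) B).
    { apply (HS (NI P)). bn. auto. }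
    apply (lk_prop1 B (mineq rho P) (map (mineq rho) cs) HPB (prop_app_map rho P _ Ha)).
    apply (Hg _ (or_introl eq_refl) rho). split.
    + intros n Hn. rewrite in_app_iff. bn.
      destruct Hn as [Hn|[<-|[Hn|[c [Hc ->]]]]].
      * left; apply HS; bn; auto.
      * left; auto.
      * left; apply HS; bn; auto.
      * right. rewrite map_map. apply in_map_iff. exists c; auto.
    + rewrite map_map. replace (map (fun x => NI (mineq rho x)) cs) with (map NI (map (mineq rho) cs))
        by (rewrite map_map; reflexivity).
      apply (LInv_prop B _ _ HL HPB (prop_app_map rho P _ Ha)). simpl; intros x; auto.
  - assert (HPB : In (NI (mineq rho P)) B).
    { apply (HS (NI P)). bn. auto. }
    apply (lk_prop2 B (mineq rho P) (mineq rho c1) (mineq rho c2) HPB (prop_app_map rho P _ Ha)).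
    + apply (Hg _ (or_introl eq_refl) rho). split.
      * intros n Hn. rewrite in_app_iff. bn.
        destruct Hn as [Hn|[<-|[Hn|[<-|[]]]]].
        -- left; apply HS; bn; auto.
        -- left; auto.
        -- left; apply HS; bn; auto.
        -- right; simpl; auto.
      * apply (LInv_prop B _ _ HL HPB (prop_app_map rho P _ Ha) [mineq rho c1]).
        intros x [<-|[]]; simpl; auto.
    + apply (Hg _ (or_intror (or_introl eq_refl)) rho). split.
      * intros n Hn. rewrite in_app_iff. bn.
        destruct Hn as [Hn|[<-|[Hn|[<-|[]]]]].
        -- left; apply HS; bn; auto.
        -- left; auto.
        -- left; apply HS; bn; auto.
        -- right; simpl; auto.
      * apply (LInv_prop B _ _ HL HPB (prop_app_map rho P _ Ha) [mineq rho c2]).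
        intros x [<-|[]]; simpl; auto.
Qed.

Lemma lf_eqb_true x y : lf_eqb x y = true <-> x = y.
Proof.
  unfold lf_eqb. destruct x as [f i], y as [g j]; simpl.
  destruct (form_eq_dec f g) as [->|Hne].
  - rewrite PeanoNat.Nat.eqb_eq. split; [intros ->|intros H; injection H]; auto.
  - split; [discriminate|intros H; injection H; intros; contradiction].
Qed.

Lemma hasL_true psi i m : hasL psi i m = true ->
  exists P, m = (NI P, true) /\ In (Box psi, i) (lhs P).
Proof.
  destruct m as [[P|] [|]]; simpl; try discriminate.
  intros H. apply existsb_exists in H. destruct H as [x [Hx Heq]].
  apply lf_eqb_true in Heq. subst. eauto.
Qed.

Lemma hasR_true psi i m : hasR psi i m = true ->
  exists P, m = (NI P, true) /\ In (Box psi, i) (rhs P).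
Proof.
  destruct m as [[P|] [|]]; simpl; try discriminate.
  intros H. apply existsb_exists in H. destruct H as [x [Hx Heq]].
  apply lf_eqb_true in Heq. subst. eauto.
Qed.

Lemma existsb_hasL psi i b : existsb (hasL psi i) b = true ->
  exists P, In (NI P, true) b /\ In (Box psi, i) (lhs P).
Proof.
  intros H. apply existsb_exists in H. destruct H as [m [Hm H]].
  apply hasL_true in H. destruct H as [P [-> HP]]. eauto.
Qed.

Lemma existsb_hasR psi i b : existsb (hasR psi i) b = true ->
  exists P, In (NI P, true) b /\ In (Box psi, i) (rhs P).
Proof.
  intros H. apply existsb_exists in H. destruct H as [m [Hm H]].
  apply hasR_true in H. destruct H as [P [-> HP]]. eauto.
Qed.

Lemma in_succs i j b : In j (succs i b) <-> exists m, In (NR i j, m) b.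
Proof.
  unfold succs. rewrite in_flat_map. split.
  - intros [[n m] [Hn Hj]]. simpl in Hj. destruct n as [P|i' j']; [destruct Hj|].
    destruct (PeanoNat.Nat.eqb_spec i i') as [<-|]; [|destruct Hj].
    destruct Hj as [<-|[]]. eauto.
  - intros [m Hm]. exists (NR i j, m). split; auto. simpl. rewrite PeanoNat.Nat.eqb_refl. simpl; auto.
Qed.

Lemma in_concl6 psi i b m : In m (concl6 psi i b) ->
  exists P, In (NI P, true) b /\ In (Box psi, i) (lhs P) /\
            m = act (mkI (repl psi i (lhs P)) (strict P) (rhs P)).
Proof.
  unfold concl6. rewrite in_flat_map. intros [m' [Hm' Hm]].
  destruct (hasL psi i m') eqn:E; [|destruct Hm].
  apply hasL_true in E. destruct E as [P [-> HP]]. simpl in Hm.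
  destruct Hm as [<-|[]]. eauto.
Qed.

Lemma in_concl5 psi i b m : In m (concl5 psi i b) ->
  exists P, In (NI P, true) b /\ In (Box psi, i) (rhs P) /\
            m = act (mkI (lhs P) (strict P) (repl psi i (rhs P))).
Proof.
  unfold concl5. rewrite in_flat_map. intros [m' [Hm' Hm]].
  destruct (hasR psi i m') eqn:E; [|destruct Hm].
  apply hasR_true in E. destruct E as [P [-> HP]]. simpl in Hm.
  destruct Hm as [<-|[]]. eauto.
Qed.

Lemma map_mlf_repl rho psi i l : map (mlf rho) (repl psi i l) = map (mlf rho) l.
Proof.
  unfold repl. rewrite map_map. apply map_ext. intros x.
  destruct (lf_eqb x (Box psi, i)) eqn:E; auto. apply lf_eqb_true in E. subst. reflexivity.
Qed.

Lemma mnd_upd rho j j' n : ~ In j (node_labels n) -> mnd (upd rho j j') n = mnd rho n.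
Proof.
  intros Hn. destruct n as [P|a c]; simpl in *.
  - unfold mineq. f_equal. f_equal; apply map_ext_in; intros x Hx; unfold mlf, upd;
      destruct (PeanoNat.Nat.eq_dec (snd x) j) as [E|]; auto; exfalso; apply Hn; rewrite <- E;
      apply in_map; apply in_app_iff; auto.
  - unfold upd. destruct (PeanoNat.Nat.eq_dec a j); [subst; tauto|].
    destruct (PeanoNat.Nat.eq_dec c j); [subst; tauto|]. reflexivity.
Qed.

Lemma iter_box_l (rho : nat -> nat) ri phi Q : forall js B,
  (forall j, In j js -> In (NR ri (rho j)) B) -> In (NI Q) B -> In (Box phi, ri) (lhs Q) ->
  lk_closed (B ++ map (fun j => NI (mkI [(phi, rho j)] false [(Box phi, ri)])) js) -> lk_closed B.
Proof.
  induction js as [|j js IH]; intros B HR HQ Hb Hc.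
  - rewrite app_nil_r in Hc; auto.
  - apply (lk_box_l B Q phi ri (rho j)); auto; [apply HR; simpl; auto|].
    apply IH; auto.
    + intros j' Hj'. apply in_app_iff. left. apply HR. simpl; auto.
    + apply in_app_iff; auto.
    + rewrite <- app_assoc. exact Hc.
Qed.

Lemma labels_in_B rho B P x : In (NI (mineq rho P)) B -> In x (lhs P ++ rhs P) ->
  In (rho (snd x)) (flat_map node_labels B).
Proof.
  intros HB Hx. apply in_flat_map. exists (NI (mineq rho P)). split; auto. simpl.
  rewrite <- map_app. rewrite map_map. apply in_map_iff. exists x. split; auto.
Qed.



Lemma bfresh_node j b n m : bfresh j b -> In (n, m) b -> ~ In j (node_labels n).
Proof.
  intros Hf Hin. apply (fresh_node j (bnodes b) n Hf). apply in_bnodes. eauto.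
Qed.

Lemma good_step6_one i b b' : step6_one i b b' -> Good1 b' -> Good1 b.
Proof.
  intros [psi [Hex ->]] Hg rho B [HS HL].
  destruct (existsb_hasL psi i b Hex) as [P [HPin HPb]].
  assert (HPB : In (NI (mineq rho P)) B) by (apply (HS (NI P)); apply in_bnodes; eauto).
  apply (iter_box_l rho (rho i) (sg psi) (mineq rho P) (succs i b) B); auto.
  - intros j Hj. apply in_succs in Hj. destruct Hj as [m Hm].
    apply (HS (NR i j)). apply in_bnodes; eauto.
  - simpl. change (Box (sg psi), rho i) with (mlf rho (Box psi, i)). apply in_map; auto.
  - apply (Hg rho). split.
    + intros n Hn. rewrite in_app_iff. bn. rewrite bnodes_deact in Hn.
      destruct Hn as [Hn|[Hn|Hn]].
      * left; auto.
      * apply in_bnodes in Hn. destruct Hn as [mk Hmk]. apply in_concl6 in Hmk.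
        destruct Hmk as [Q [HQ [_ Heq]]]. injection Heq as -> _.
        left. simpl. unfold mineq; simpl. rewrite map_mlf_repl.
        apply (HS (NI Q)). apply in_bnodes; eauto.
      * right. apply in_bnodes in Hn. destruct Hn as [mk Hmk].
        apply in_map_iff in Hmk. destruct Hmk as [j [Hj Hjs]]. injection Hj as <- _.
        apply in_map_iff. exists j. split; auto.
    + intros l Hl. rewrite flat_map_app in Hl. apply in_app_iff in Hl. destruct Hl as [Hl|Hl].
      * destruct (HL l Hl) as [m Hm]. exists m. rewrite !in_app_iff. tauto.
      * apply in_flat_map in Hl. destruct Hl as [n [Hn Hl]]. apply in_map_iff in Hn.
        destruct Hn as [j [<- Hj]]. simpl in Hl.
        assert (HR : In (NR (rho i) (rho j)) B).
        { apply in_succs in Hj. destruct Hj as [m Hm]. apply (HS (NR i j)). apply in_bnodes; eauto. }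
        destruct Hl as [<-|[<-|[]]]; [exists (rho i)|exists (rho j)];
          first [left; apply in_app_iff; left; exact HR | right; apply in_app_iff; left; exact HR].
Qed.

Lemma LInv_add B extra : LInv B ->
  (forall l, In l (flat_map node_labels extra) -> exists m, In (NR l m) (B ++ extra) \/ In (NR m l) (B ++ extra)) ->
  LInv (B ++ extra).
Proof.
  intros HL He l Hl. rewrite flat_map_app in Hl. apply in_app_iff in Hl. destruct Hl as [Hl|Hl]; auto.
  destruct (HL l Hl) as [m Hm]. exists m. rewrite !in_app_iff. tauto.
Qed.

Lemma good_step5_one i b b' : step5_one i b b' -> Good1 b' -> Good1 b.
Proof.
  intros [psi [j [Hex [Hf ->]]]] Hg rho B [HS HL].
  destruct (existsb_hasR psi i b Hex) as [P [HPin HPb]].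
  assert (HPB : In (NI (mineq rho P)) B) by (apply (HS (NI P)); apply in_bnodes; eauto).
  assert (Hij : i <> j).
  { intros ->. apply (bfresh_node j b (NI P) true Hf HPin). simpl. apply in_map_iff.
    exists (Box psi, j). split; auto. apply in_app_iff; auto. }
  destruct (fresh_exists B) as [jB HjB].
  apply (lk_box_r B (mineq rho P) (sg psi) (rho i) jB); auto.
  { simpl. change (Box (sg psi), rho i) with (mlf rho (Box psi, i)). apply in_map; auto. }
  apply (Hg (upd rho j jB)). split.
  - intros n Hn. rewrite in_app_iff. bn. rewrite bnodes_deact in Hn.
    destruct Hn as [Hn|[Hn|[Hn|[Hn|[]]]]].
    + left. apply in_bnodes in Hn. destruct Hn as [m Hm].
      rewrite mnd_upd by (eapply bfresh_node; eauto). apply HS. apply in_bnodes; eauto.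
    + left. apply in_bnodes in Hn. destruct Hn as [mk Hmk]. apply in_concl5 in Hmk.
      destruct Hmk as [Q [HQ [_ Heq]]]. injection Heq as -> _.
      assert (E : mnd (upd rho j jB) (NI {| lhs := lhs Q; strict := strict Q; rhs := repl psi i (rhs Q) |})
                  = mnd rho (NI Q)).
      { simpl. unfold mineq; simpl. rewrite map_mlf_repl.
        pose proof (mnd_upd rho j jB (NI Q) (bfresh_node j b _ _ Hf HQ)) as E. simpl in E.
        unfold mineq in E. simpl in E. exact E. }
      rewrite E. apply HS. apply in_bnodes; eauto.
    + right. subst n. simpl. unfold mineq, mlf, upd; simpl.
      destruct (PeanoNat.Nat.eq_dec i j); [contradiction|].
      destruct (PeanoNat.Nat.eq_dec j j); [|contradiction]. auto.
    + right. subst n. simpl. unfold upd.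
      destruct (PeanoNat.Nat.eq_dec i j); [contradiction|].
      destruct (PeanoNat.Nat.eq_dec j j); [|contradiction]. auto.
  - apply LInv_add; auto. intros l Hl. simpl in Hl.
    exists (if PeanoNat.Nat.eq_dec l jB then rho i else jB).
    destruct (PeanoNat.Nat.eq_dec l jB); rewrite !in_app_iff; simpl;
      intuition (subst; auto).
Qed.

Lemma good_step4 i b b4 : step4 i b b4 -> Good1 b4 -> Good1 b.
Proof.
  intros [[Hbox [k [Hf ->]]]|[_ ->]] Hg; auto.
  intros rho B [HS HL].
  destruct Hbox as [P [psi [HPin Hx]]].
  assert (HPB : In (NI (mineq rho P)) B) by (apply (HS (NI P)); apply in_bnodes; eauto).
  assert (Hik : i <> k).
  { intros ->. apply (bfresh_node k b (NI P) true Hf HPin). simpl. apply in_map_iff.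
    exists (Box psi, k). split; auto. }
  destruct (HL (rho i) (labels_in_B rho B P (Box psi, i) HPB Hx)) as [m [Hm|Hm]].
  - apply (Hg (upd rho k m)). split; auto.
    intros n Hn. bn. destruct Hn as [Hn|[<-|[]]].
    + apply in_bnodes in Hn. destruct Hn as [mm Hmm].
      rewrite mnd_upd by (eapply bfresh_node; eauto). apply HS. apply in_bnodes; eauto.
    + simpl. unfold upd. destruct (PeanoNat.Nat.eq_dec i k); [contradiction|].
      destruct (PeanoNat.Nat.eq_dec k k); [|contradiction]. auto.
  - destruct (fresh_exists B) as [jB HjB].
    apply (lk_ex B m (rho i) jB Hm HjB).
    apply (Hg (upd rho k jB)). split.
    + intros n Hn. bn. rewrite in_app_iff. destruct Hn as [Hn|[<-|[]]].
      * left. apply in_bnodes in Hn. destruct Hn as [mm Hmm].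
        rewrite mnd_upd by (eapply bfresh_node; eauto). apply HS. apply in_bnodes; eauto.
      * right. simpl. unfold upd. destruct (PeanoNat.Nat.eq_dec i k); [contradiction|].
        destruct (PeanoNat.Nat.eq_dec k k); [|contradiction]. auto.
    + apply LInv_add; auto. intros l Hl. simpl in Hl.
      exists (if PeanoNat.Nat.eq_dec l jB then rho i else jB).
      destruct (PeanoNat.Nat.eq_dec l jB); rewrite !in_app_iff; simpl;
        intuition (subst; auto).
Qed.

Lemma good_crt {X : Type} (st : X -> X -> Prop) (G : X -> Prop) :
  (forall b b', st b b' -> G b' -> G b) ->
  forall b b', clos_refl_trans_1n _ st b b' -> G b' -> G b.
Proof. intros H b b' Hc. induction Hc; auto. intros; eapply H; eauto. Qed.

Lemma Forall2_in_l {A B : Type} (Rl : A -> B -> Prop) l1 l2 x :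
  Forall2 Rl l1 l2 -> In x l1 -> exists y, In y l2 /\ Rl x y.
Proof.
  induction 1; [intros []|]. intros [->|Hx]; [exists y; simpl; auto|].
  destruct (IHForall2 Hx) as [z [Hz Hr]]. exists z; simpl; auto.
Qed.

Lemma good_456 i S3 S6 : step456 i S3 S6 -> Good S6 -> Good S3.
Proof.
  intros H HG b Hb. destruct (Forall2_in_l _ _ _ b H Hb) as [b6 [Hb6 [b4 [b5 [H4 [[H5 _] [H6 _]]]]]]].
  apply (good_step4 i b b4 H4).
  apply (good_crt (step5_one i) Good1 (good_step5_one i) b4 b5 H5).
  apply (good_crt (step6_one i) Good1 (good_step6_one i) b5 b6 H6).
  apply HG; auto.
Qed.

Lemma good_g3 S S' : gstep3 S S' -> Good S' -> Good S.
Proof.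
  intros [S1 b S2 bs Hp] HG b' Hb'. apply in_app_iff in Hb'. destruct Hb' as [H|[E|H]].
  - apply HG. apply in_app_iff; auto.
  - subst b'. apply (good_pstep b bs Hp). intros b'' Hb''. apply HG. rewrite !in_app_iff; auto.
  - apply HG. rewrite !in_app_iff; auto.
Qed.

Lemma good_run S F : complete_run S F -> closed' F -> Good S.
Proof.
  induction 1 as [S Hs|S S3 S6 F Hn H3 Hex Hor Hr IH]; intros Hcl.
  - intros b Hb rho B Hsim. apply lk_unsat. intros Hsat.
    unfold closed' in Hcl. rewrite Forall_forall in Hcl. apply (Hcl b Hb). eapply Sim_unsat; eauto.
  - specialize (IH Hcl). apply (good_crt gstep3 Good good_g3 S S3 H3).
    destruct Hor as [[i [_ H456]]|[_ ->]]; auto. eapply good_456; eauto.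
Qed.

Theorem LK'_to_LK (phi : form) : pure phi -> closed_complete_LK'_tableau phi -> LKA_derivable phi.
Proof.
  intros Hp [F [Hr Hc]]. apply (good_run _ _ Hr Hc _ (or_introl eq_refl) (fun l => l)).
  split.
  - intros n [<-|[<-|[]]]; simpl; [left|right; left; reflexivity].
    unfold mineq, mlf; simpl. rewrite sg_pure; auto.
  - intros l Hl. simpl in Hl. exists (if PeanoNat.Nat.eq_dec l 1 then 2%nat else 1%nat).
    destruct (PeanoNat.Nat.eq_dec l 1); simpl; intuition (subst; auto).
Qed.

Fixpoint md (f : form) : nat :=
  match f with
  | Var _ | BVar _ | Zero => 0
  | Conj a b | Disj a b | Amp a b | Imp a b => Nat.max (md a) (md b)
  | Box a => S (md a)
  end.

Fixpoint subs (f : form) : list form :=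
  f :: match f with
       | Conj a b | Disj a b | Amp a b | Imp a b => subs a ++ subs b
       | Box a => subs a
       | _ => []
       end.

Lemma subs_refl f : In f (subs f).
Proof. destruct f; simpl; auto. Qed.

Lemma subs_trans a b c : In a (subs b) -> In b (subs c) -> In a (subs c).
Proof.
  intros Hab Hbc. induction c; simpl in Hbc; destruct Hbc as [<-|Hbc]; auto;
    try contradiction; simpl; right;
    try (apply in_app_iff in Hbc; apply in_app_iff; destruct Hbc; [left; apply IHc1| right; apply IHc2]; auto);
    try (apply IHc; auto).
Qed.

Lemma isub_subs a f : isub a f -> In a (subs f).
Proof. destruct f; simpl; try tauto; intros [->| ->]; right; apply in_app_iff; auto using subs_refl. Qed.

Lemma isub_md a f : isub a f -> (md a <= md f)%nat.
Proof. destruct f; simpl; try tauto; intros [->| ->]; lia. Qed.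

Lemma isub_pure a f : isub a f -> pure f -> pure a.
Proof. destruct f; simpl; try tauto; intros [->| ->]; tauto. Qed.

Definition wf (phi f : form) : Prop :=
  (pure f /\ In f (subs phi)) \/ (exists a, f = BVar a /\ pure a /\ In (Box a) (subs phi)).

Lemma isub_wf phi a f : isub a f -> wf phi f -> wf phi a.
Proof.
  intros Hs [[Hp Hi]|[c [-> _]]]; [|destruct Hs].
  left. split; [eapply isub_pure; eauto|]. eapply subs_trans; [apply isub_subs; eauto|auto].
Qed.

Definition NRb (b : branch) (x y : nat) : Prop := In (NR x y) (bnodes b).

Definition HotL (b : branch) (x : nat) : Prop :=
  exists P y, In (NI P, true) b /\ In y (lhs P ++ rhs P) /\ snd y = x /\ (1 <= md (fst y))%nat.

Record K (phi : form) (b : branch) : Prop := {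
  K0 : forall P m, In (NI P, m) b -> forall y, In y (lhs P ++ rhs P) -> wf phi (fst y);
  K1 : forall x y, NRb b x y -> HotL b x -> ~ HotL b y /\ forall z, ~ NRb b y z;
  K2 : forall x y, NRb b x y -> (x, y) <> (1%nat, 2%nat) -> ~ HotL b x;
  K3 : forall x x' y, NRb b x y -> NRb b x' y -> x = x';
  K4 : forall x y, NRb b x y -> y <> 1%nat /\ y <> x;
  K5 : NRb b 1 2;
  K6 : forall x, NoDup (succs x b)
}.

Lemma succs_app i b1 b2 : succs i (b1 ++ b2) = succs i b1 ++ succs i b2.
Proof. unfold succs. apply flat_map_app. Qed.

Lemma succs_cons_NI i P m b : succs i ((NI P, m) :: b) = succs i b.
Proof. reflexivity. Qed.

Lemma succs_act i cs : succs i (map act cs) = [].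
Proof. induction cs; simpl; auto. Qed.

Lemma NRb_app b1 b2 x y : NRb (b1 ++ b2) x y <-> NRb b1 x y \/ NRb b2 x y.
Proof. unfold NRb. apply in_bn_app. Qed.

Lemma NRb_cons b z x y : NRb (z :: b) x y <-> fst z = NR x y \/ NRb b x y.
Proof. reflexivity. Qed.

Lemma NRb_act cs x y : ~ NRb (map act cs) x y.
Proof. unfold NRb. rewrite in_bn_act. intros [c [_ H]]; discriminate. Qed.

Lemma act_pstep b bs b' : pstep b bs -> In b' bs ->
  (forall x y, NRb b' x y <-> NRb b x y) /\ (forall x, succs x b' = succs x b) /\
  (forall Q m, In (NI Q, m) b' -> In (NI Q, m) b \/ In (NI Q, negb m) b \/
       (exists P a, In (NI P, true) b /\ prop_app P a /\ In Q (concl a) /\ m = true)) /\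
  (forall Q, In (NI Q, true) b' -> In (NI Q, true) b \/
       (exists P a, In (NI P, true) b /\ prop_app P a /\ In Q (concl a))).
Proof.
  intros Hp Hb'. destruct Hp as [b1 b2 P cs Ha|b1 b2 P c1 c2 Ha];
    simpl in Hb'; repeat match goal with H : _ \/ _ |- _ => destruct H | H : False |- _ => destruct H end;
    subst b'.
  - split; [|split; [|split]].
    + intros x y. rewrite !NRb_app, !NRb_cons, NRb_app. simpl. pose proof (NRb_act cs x y). tauto.
    + intros x. rewrite !succs_app. simpl. rewrite succs_app, succs_act, app_nil_r. reflexivity.
    + intros Q m H. rewrite in_app_iff in H. simpl in H. rewrite in_app_iff in H.
      destruct H as [H|[H|[H|H]]].
      * left; apply in_app_iff; auto.
      * injection H as <- <-. right; left. simpl. apply in_app_iff; simpl; auto.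
      * left; apply in_app_iff; simpl; auto.
      * apply in_map_iff in H. destruct H as [c [Hc Hcs]]. injection Hc as <- <-.
        right; right. exists P; eexists. split; [apply in_app_iff; simpl; auto|]. split; [exact Ha|]. simpl; auto.
    + intros Q H. rewrite in_app_iff in H. simpl in H. rewrite in_app_iff in H.
      destruct H as [H|[H|[H|H]]].
      * left; apply in_app_iff; auto.
      * discriminate.
      * left; apply in_app_iff; simpl; auto.
      * apply in_map_iff in H. destruct H as [c [Hc Hcs]]. injection Hc as ->.
        right. exists P; eexists. split; [apply in_app_iff; simpl; auto|]. split; [exact Ha|]. simpl; auto.
  - split; [|split; [|split]].
    + intros x y. rewrite !NRb_app, !NRb_cons, NRb_app. simpl. unfold NRb; simpl. intuition discriminate.
    + intros x. rewrite !succs_app. simpl. rewrite succs_app. simpl. rewrite app_nil_r. reflexivity.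
    + intros Q m H. rewrite in_app_iff in H. simpl in H. rewrite in_app_iff in H.
      destruct H as [H|[H|[H|[H|[]]]]].
      * left; apply in_app_iff; auto.
      * injection H as <- <-. right; left. simpl. apply in_app_iff; simpl; auto.
      * left; apply in_app_iff; simpl; auto.
      * injection H as <- <-. right; right. exists P; eexists. split; [apply in_app_iff; simpl; auto|]. split; [exact Ha|]. simpl; auto.
    + intros Q H. rewrite in_app_iff in H. simpl in H. rewrite in_app_iff in H.
      destruct H as [H|[H|[H|[H|[]]]]].
      * left; apply in_app_iff; auto.
      * discriminate.
      * left; apply in_app_iff; simpl; auto.
      * injection H as ->. right. exists P; eexists. split; [apply in_app_iff; simpl; auto|]. split; [exact Ha|]. simpl; auto.
  - split; [|split; [|split]].
    + intros x y. rewrite !NRb_app, !NRb_cons, NRb_app. simpl. unfold NRb; simpl. intuition discriminate.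
    + intros x. rewrite !succs_app. simpl. rewrite succs_app. simpl. rewrite app_nil_r. reflexivity.
    + intros Q m H. rewrite in_app_iff in H. simpl in H. rewrite in_app_iff in H.
      destruct H as [H|[H|[H|[H|[]]]]].
      * left; apply in_app_iff; auto.
      * injection H as <- <-. right; left. simpl. apply in_app_iff; simpl; auto.
      * left; apply in_app_iff; simpl; auto.
      * injection H as <- <-. right; right. exists P; eexists. split; [apply in_app_iff; simpl; auto|]. split; [exact Ha|]. simpl; auto.
    + intros Q H. rewrite in_app_iff in H. simpl in H. rewrite in_app_iff in H.
      destruct H as [H|[H|[H|[H|[]]]]].
      * left; apply in_app_iff; auto.
      * discriminate.
      * left; apply in_app_iff; simpl; auto.
      * injection H as ->. right. exists P; eexists. split; [apply in_app_iff; simpl; auto|]. split; [exact Ha|]. simpl; auto.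
Qed.

Lemma hot_pstep b bs b' x : pstep b bs -> In b' bs -> HotL b' x -> HotL b x.
Proof.
  intros Hp Hb' [Q [y [HQ [Hy [Hyx Hmd]]]]].
  destruct (act_pstep b bs b' Hp Hb') as [_ [_ [_ H]]].
  destruct (H Q HQ) as [HQ'|[P [a [HP [Ha Hc]]]]].
  - exists Q, y; auto.
  - destruct (prop_lfs P a Ha Q Hc y Hy) as [z [Hz [Hzy Hor]]].
    exists P, z. repeat split; auto; [congruence|].
    destruct Hor as [->|Hs]; auto. pose proof (isub_md _ _ Hs). lia.
Qed.

Lemma K_pstep phi b bs b' : pstep b bs -> In b' bs -> K phi b -> K phi b'.
Proof.
  intros Hp Hb' Kb. destruct (act_pstep b bs b' Hp Hb') as [HNR [Hsu [Hall _]]].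
  assert (Hhot : forall x, HotL b' x -> HotL b x) by (intros; eapply hot_pstep; eauto).
  constructor.
  - intros Q m HQ y Hy. destruct (Hall Q m HQ) as [H|[H|[P [a [HP [Ha [Hc _]]]]]]];
      [eapply (K0 _ _ Kb); eauto|eapply (K0 _ _ Kb); eauto|].
    destruct (prop_lfs P a Ha Q Hc y Hy) as [z [Hz [_ [->|Hs]]]]; [eapply (K0 _ _ Kb); eauto|].
    eapply isub_wf; eauto. eapply (K0 _ _ Kb); eauto.
  - intros x y Hxy Hx. rewrite HNR in Hxy. destruct (K1 _ _ Kb x y Hxy (Hhot x Hx)) as [H1 H2].
    split; [intros Hy; apply H1; auto|intros z Hz; rewrite HNR in Hz; eapply H2; eauto].
  - intros x y Hxy Hne Hx. rewrite HNR in Hxy. eapply (K2 _ _ Kb); eauto.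
  - intros x x' y H1 H2. rewrite HNR in H1, H2. eapply (K3 _ _ Kb); eauto.
  - intros x y H. rewrite HNR in H. eapply (K4 _ _ Kb); eauto.
  - rewrite HNR. apply (K5 _ _ Kb).
  - intros x. rewrite Hsu. apply (K6 _ _ Kb).
Qed.

Definition labs (b : branch) : list nat := flat_map node_labels (bnodes b).

Lemma in_deact h b n m : In (n, m) (deact h b) -> exists m0, In (n, m0) b /\ (m = true -> m0 = true /\ h (n, m0) = false).
Proof.
  unfold deact. rewrite in_map_iff. intros [[n0 m0] [Heq Hin]]. simpl in Heq.
  destruct (h (n0, m0)) eqn:E; injection Heq as <- <-; exists m0; split; auto.
  intros; discriminate.
Qed.

Lemma in_deact_keep h b n m : In (n, m) b -> exists m', In (n, m') (deact h b).
Proof.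
  intros H. unfold deact. exists (if h (n, m) then false else m). apply in_map_iff.
  exists (n, m). split; auto. destruct (h (n, m)); reflexivity.
Qed.

Lemma succs_deact x h b : succs x (deact h b) = succs x b.
Proof.
  induction b as [|[n m] b IH]; simpl; auto. rewrite <- IH.
  destruct (h (n, m)); simpl; reflexivity.
Qed.

Lemma succs_allNI x (l : branch) : (forall n m, In (n, m) l -> exists Q, n = NI Q) -> succs x l = [].
Proof.
  induction l as [|[n m] l IH]; simpl; intros H; auto.
  destruct (H n m (or_introl eq_refl)) as [Q ->]. simpl. apply IH. intros; eapply H; eauto.
Qed.

Lemma concl5_NI psi i b n m : In (n, m) (concl5 psi i b) -> exists Q, n = NI Q.
Proof. intros H. apply in_concl5 in H. destruct H as [P [_ [_ H]]]. injection H as -> _. eauto. Qed.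
Lemma concl6_NI psi i b n m : In (n, m) (concl6 psi i b) -> exists Q, n = NI Q.
Proof. intros H. apply in_concl6 in H. destruct H as [P [_ [_ H]]]. injection H as -> _. eauto. Qed.

Lemma NRb_succs b x y : NRb b x y <-> In y (succs x b).
Proof. unfold NRb. rewrite in_succs, in_bnodes. reflexivity. Qed.

Lemma in_repl psi i l y : In y (repl psi i l) -> In y l \/ (y = (BVar psi, i) /\ In (Box psi, i) l).
Proof.
  unfold repl. rewrite in_map_iff. intros [x [Hx Hin]].
  destruct (lf_eqb x (Box psi, i)) eqn:E.
  - apply lf_eqb_true in E. subst. right; auto.
  - subst; auto.
Qed.

Lemma step5_shape i b b' : step5_one i b b' -> exists psi j,
  bfresh j b /\ existsb (hasR psi i) b = true /\ In i (labs b) /\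
  (forall x, succs x b' = succs x b ++ (if PeanoNat.Nat.eqb x i then [j] else [])) /\
  (forall n, In n (bnodes b) -> In n (bnodes b')) /\
  (forall Q m, In (NI Q, m) b' ->
     (exists m0, In (NI Q, m0) b /\ (m = true -> m0 = true /\ hasR psi i (NI Q, m0) = false)) \/
     (exists P, In (NI P, true) b /\ In (Box psi, i) (rhs P) /\ m = true /\
                Q = mkI (lhs P) (strict P) (repl psi i (rhs P))) \/
     (m = true /\ Q = mkI [(BVar psi, i)] false [(psi, j)])).
Proof.
  intros [psi [j [Hex [Hf ->]]]]. exists psi, j. split; [auto|split; [auto|split; [|split; [|split]]]].
  - destruct (existsb_hasR psi i b Hex) as [P [HP Hb]]. unfold labs. apply in_flat_map.
    exists (NI P). split; [apply in_bnodes; eauto|]. simpl. apply in_map_iff. exists (Box psi, i).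
    split; auto. apply in_app_iff; auto.
  - intros x. rewrite !succs_app, succs_deact.
    rewrite (succs_allNI x (concl5 psi i b)) by apply concl5_NI. simpl.
    destruct (PeanoNat.Nat.eqb x i); simpl; reflexivity.
  - intros n Hn. apply in_bnodes in Hn. destruct Hn as [m Hm]. apply in_bnodes.
    destruct (in_deact_keep (hasR psi i) b n m Hm) as [m' Hm']. exists m'. apply in_app_iff; auto.
  - intros Q m H. apply in_app_iff in H. destruct H as [H|H].
    + left. apply in_deact in H. exact H.
    + apply in_app_iff in H. destruct H as [H|[H|[H|[]]]].
      * apply in_concl5 in H. destruct H as [P [HP [Hb Heq]]]. injection Heq as HQ Hm. subst.
        right; left. exists P. auto.
      * injection H as HQ Hm. subst. right; right; auto.
      * discriminate.
Qed.

Lemma step6_shape i b b' : step6_one i b b' -> exists psi,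
  existsb (hasL psi i) b = true /\
  (forall x, succs x b' = succs x b) /\
  (forall n, In n (bnodes b) -> In n (bnodes b')) /\
  (forall Q m, In (NI Q, m) b' ->
     (exists m0, In (NI Q, m0) b /\ (m = true -> m0 = true /\ hasL psi i (NI Q, m0) = false)) \/
     (exists P, In (NI P, true) b /\ In (Box psi, i) (lhs P) /\ m = true /\
                Q = mkI (repl psi i (lhs P)) (strict P) (rhs P)) \/
     (exists j, In j (succs i b) /\ m = true /\ Q = mkI [(psi, j)] false [(BVar psi, i)])).
Proof.
  intros [psi [Hex ->]]. exists psi. split; [auto|split; [|split]].
  - intros x. rewrite !succs_app, succs_deact.
    rewrite (succs_allNI x (concl6 psi i b)) by apply concl6_NI.
    rewrite (succs_allNI x (map _ (succs i b))).
    + rewrite !app_nil_r. reflexivity.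
    + intros n m H. apply in_map_iff in H. destruct H as [j [H _]]. injection H as <- _. eauto.
  - intros n Hn. apply in_bnodes in Hn. destruct Hn as [m Hm]. apply in_bnodes.
    destruct (in_deact_keep (hasL psi i) b n m Hm) as [m' Hm']. exists m'. apply in_app_iff; auto.
  - intros Q m H. apply in_app_iff in H. destruct H as [H|H].
    + left. apply in_deact in H. exact H.
    + apply in_app_iff in H. destruct H as [H|H].
      * apply in_concl6 in H. destruct H as [P [HP [Hb Heq]]]. injection Heq as HQ Hm. subst.
        right; left. exists P. auto.
      * apply in_map_iff in H. destruct H as [j [Heq Hj]]. injection Heq as HQ Hm. subst.
        right; right. eauto.
Qed.

Lemma step4_shape i b b' : step4 i b b' ->
  b' = b \/ exists k, bfresh k b /\ has_box_at i b /\ b' = b ++ [(NR i k, false)].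
Proof. intros [[H [k [Hk ->]]]|[_ ->]]; [right; eauto|left; auto]. Qed.

Record KS (phi : form) (b : branch) : Prop := {
  KS0 : forall P m, In (NI P, m) b -> forall y, In y (lhs P ++ rhs P) -> wf phi (fst y);
  KS3 : forall x x' y, NRb b x y -> NRb b x' y -> x = x';
  KS4 : forall x y, NRb b x y -> y <> 1%nat /\ y <> x;
  KS5 : NRb b 1 2;
  KS6 : forall x, NoDup (succs x b)
}.

Lemma KS_of_K phi b : K phi b -> KS phi b.
Proof. intros []; constructor; auto. Qed.

Definition Pi (i : nat) (b : branch) : Prop :=
  forall P y, In (NI P, true) b -> In y (lhs P ++ rhs P) -> snd y = i -> is_box_or_atom (fst y).

Lemma wf_box phi psi : wf phi (Box psi) -> wf phi (BVar psi) /\ wf phi psi.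
Proof.
  intros [[Hp Hs]|[a [Ha _]]]; [|discriminate]. split.
  - right. exists psi. auto.
  - left. split; auto. eapply subs_trans; [|exact Hs]. simpl. right. apply subs_refl.
Qed.

Lemma labs_in b n m x : In (n, m) b -> In x (node_labels n) -> In x (labs b).
Proof. intros H Hx. unfold labs. apply in_flat_map. exists n. split; auto. apply in_bnodes; eauto. Qed.

Lemma labs_NI b P m y : In (NI P, m) b -> In y (lhs P ++ rhs P) -> In (snd y) (labs b).
Proof. intros H Hy. eapply labs_in; eauto. simpl. apply in_map; auto. Qed.

Lemma labs_incl b b' : (forall n, In n (bnodes b) -> In n (bnodes b')) -> incl (labs b) (labs b').
Proof.
  intros H x Hx. unfold labs in *. apply in_flat_map in Hx. destruct Hx as [n [Hn Hx]].
  apply in_flat_map. eauto.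
Qed.

Lemma NRb_labs b x y : NRb b x y -> In x (labs b) /\ In y (labs b).
Proof.
  intros H. unfold NRb in H. apply in_bnodes in H. destruct H as [m Hm].
  split; eapply labs_in; eauto; simpl; auto.
Qed.

Lemma nodup_app_fresh (l : list nat) j : NoDup l -> ~ In j l -> NoDup (l ++ [j]).
Proof.
  intros H Hj. apply NoDup_app; auto.
  - constructor; auto. constructor.
  - intros x Hx [<-|[]]. contradiction.
Qed.

Lemma step5_props phi i b b' : step5_one i b b' ->
  incl (labs b) (labs b') /\
  (forall x y, NRb b' x y -> NRb b x y \/ (x = i /\ ~ In y (labs b))) /\
  (forall x, HotL b' x -> HotL b x \/ In x (succs i b')) /\
  (forall x, incl (succs x b) (succs x b')) /\
  (KS phi b -> KS phi b') /\
  (Pi i b -> (forall j, In j (succs i b) -> j <> i) -> Pi i b' /\ (forall j, In j (succs i b') -> j <> i)).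
Proof.
  intros Hs. destruct (step5_shape i b b' Hs) as [psi [j [Hf [Hex [Hi [Hsu [Hbn Hsh]]]]]]].
  destruct (existsb_hasR psi i b Hex) as [P0 [HP0 HB0]].
  assert (Hji : j <> i) by (intros ->; contradiction).
  assert (HNR : forall x y, NRb b' x y -> NRb b x y \/ (x = i /\ y = j)).
  { intros x y H. rewrite NRb_succs, Hsu in H. apply in_app_iff in H.
    destruct H as [H|H]; [left; apply NRb_succs; auto|].
    destruct (PeanoNat.Nat.eqb_spec x i) as [->|]; [|destruct H].
    destruct H as [<-|[]]. right; auto. }
  split; [apply labs_incl; auto|]. split.
  { intros x y H. destruct (HNR x y H) as [H'|[-> ->]]; auto. }
  split.
  { intros x [Q [y [HQ [Hy [Hyx Hmd]]]]]. destruct (Hsh Q true HQ) as [[m0 [H0 H1]]|[[P [HP [_ [_ ->]]]]|[_ ->]]].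
    - destruct (H1 eq_refl) as [-> _]. left. exists Q, y. auto.
    - simpl in Hy. apply in_app_iff in Hy. destruct Hy as [Hy|Hy].
      + left. exists P, y. repeat split; auto. apply in_app_iff; auto.
      + apply in_repl in Hy. destruct Hy as [Hy|[-> _]]; [|simpl in Hmd; lia].
        left. exists P, y. repeat split; auto. apply in_app_iff; auto.
    - simpl in Hy. destruct Hy as [<-|[<-|[]]]; [simpl in Hmd; lia|].
      right. simpl in Hyx. subst x. rewrite Hsu. apply in_app_iff. right.
      rewrite PeanoNat.Nat.eqb_refl. simpl; auto. }
  split.
  { intros x z Hz. rewrite Hsu. apply in_app_iff; auto. }
  split.
  { intros KSb. constructor.
    - intros Q m HQ y Hy. destruct (Hsh Q m HQ) as [[m0 [H0 _]]|[[P [HP [Hb [_ ->]]]]|[_ ->]]].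
      + eapply (KS0 _ _ KSb); eauto.
      + simpl in Hy. apply in_app_iff in Hy. destruct Hy as [Hy|Hy].
        * eapply (KS0 _ _ KSb); eauto. apply in_app_iff; auto.
        * apply in_repl in Hy. destruct Hy as [Hy|[-> _]].
          -- eapply (KS0 _ _ KSb); eauto. apply in_app_iff; auto.
          -- apply (wf_box phi psi). apply (KS0 _ _ KSb P true HP (Box psi, i)). apply in_app_iff; auto.
      + pose proof (wf_box phi psi (KS0 _ _ KSb P0 true HP0 (Box psi, i) ltac:(apply in_app_iff; auto))) as [W1 W2].
        simpl in Hy. destruct Hy as [<-|[<-|[]]]; auto.
    - intros x x' y H1 H2. destruct (HNR x y H1) as [H1'|[E1 E2]]; destruct (HNR x' y H2) as [H2'|[E3 E4]].
      + eapply (KS3 _ _ KSb); eauto.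
      + exfalso. apply Hf. subst. apply (NRb_labs b x j H1').
      + exfalso. apply Hf. subst. apply (NRb_labs b x' j H2').
      + congruence.
    - intros x y H. destruct (HNR x y H) as [H'|[-> ->]]; [eapply (KS4 _ _ KSb); eauto|].
      split; auto. intros ->. apply Hf. apply (NRb_labs b 1 2 (KS5 _ _ KSb)).
    - rewrite NRb_succs, Hsu. apply in_app_iff. left. apply NRb_succs. apply (KS5 _ _ KSb).
    - intros x. rewrite Hsu. pose proof (KS6 _ _ KSb x). destruct (PeanoNat.Nat.eqb_spec x i) as [->|].
      + apply nodup_app_fresh; auto. intros Hj. apply Hf. apply (NRb_labs b i j). apply NRb_succs; auto.
      + rewrite app_nil_r; auto. }
  intros HPi Hsi. split.
  - intros Q y HQ Hy Hyi. destruct (Hsh Q true HQ) as [[m0 [H0 H1]]|[[P [HP [_ [_ ->]]]]|[_ ->]]].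
    + destruct (H1 eq_refl) as [-> _]. eapply HPi; eauto.
    + simpl in Hy. apply in_app_iff in Hy. destruct Hy as [Hy|Hy].
      * eapply HPi; eauto. apply in_app_iff; auto.
      * apply in_repl in Hy. destruct Hy as [Hy|[-> _]]; [|simpl; auto].
        eapply HPi; eauto. apply in_app_iff; auto.
    + simpl in Hy. destruct Hy as [<-|[<-|[]]]; simpl; auto. simpl in Hyi. contradiction.
  - intros j' Hj'. rewrite Hsu in Hj'. apply in_app_iff in Hj'. destruct Hj' as [H|H]; auto.
    rewrite PeanoNat.Nat.eqb_refl in H. destruct H as [<-|[]]. auto.
Qed.

Definition noR (i : nat) (b : branch) : Prop := forall psi, existsb (hasR psi i) b = false.
Definition noL (i : nat) (b : branch) : Prop := forall psi, existsb (hasL psi i) b = false.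

Lemma step6_props phi i b b' : step6_one i b b' ->
  incl (labs b) (labs b') /\
  (forall x y, NRb b' x y <-> NRb b x y) /\
  (forall x, HotL b' x -> HotL b x \/ In x (succs i b')) /\
  (forall x, succs x b' = succs x b) /\
  (KS phi b -> KS phi b') /\
  (Pi i b -> (forall j, In j (succs i b) -> j <> i) -> Pi i b') /\
  (noR i b -> noR i b').
Proof.
  intros Hs. destruct (step6_shape i b b' Hs) as [psi [Hex [Hsu [Hbn Hsh]]]].
  destruct (existsb_hasL psi i b Hex) as [P0 [HP0 HB0]].
  assert (HNR : forall x y, NRb b' x y <-> NRb b x y).
  { intros x y. rewrite !NRb_succs, Hsu. reflexivity. }
  split; [apply labs_incl; auto|]. split; [auto|]. split.
  { intros x [Q [y [HQ [Hy [Hyx Hmd]]]]]. destruct (Hsh Q true HQ) as [[m0 [H0 H1]]|[[P [HP [_ [_ ->]]]]|[j [Hj [_ ->]]]]].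
    - destruct (H1 eq_refl) as [-> _]. left. exists Q, y. auto.
    - simpl in Hy. apply in_app_iff in Hy. destruct Hy as [Hy|Hy].
      + apply in_repl in Hy. destruct Hy as [Hy|[-> _]]; [|simpl in Hmd; lia].
        left. exists P, y. repeat split; auto. apply in_app_iff; auto.
      + left. exists P, y. repeat split; auto. apply in_app_iff; auto.
    - simpl in Hy. destruct Hy as [<-|[<-|[]]]; [|simpl in Hmd; lia].
      right. simpl in Hyx. subst x. rewrite Hsu. auto. }
  split; [auto|]. split.
  { intros KSb. constructor.
    - intros Q m HQ y Hy. destruct (Hsh Q m HQ) as [[m0 [H0 _]]|[[P [HP [Hb [_ ->]]]]|[j [Hj [_ ->]]]]].
      + eapply (KS0 _ _ KSb); eauto.
      + simpl in Hy. apply in_app_iff in Hy. destruct Hy as [Hy|Hy].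
        * apply in_repl in Hy. destruct Hy as [Hy|[-> _]].
          -- eapply (KS0 _ _ KSb); eauto. apply in_app_iff; auto.
          -- apply (wf_box phi psi). apply (KS0 _ _ KSb P true HP (Box psi, i)). apply in_app_iff; auto.
        * eapply (KS0 _ _ KSb); eauto. apply in_app_iff; auto.
      + pose proof (wf_box phi psi (KS0 _ _ KSb P0 true HP0 (Box psi, i) ltac:(apply in_app_iff; auto))) as [W1 W2].
        simpl in Hy. destruct Hy as [<-|[<-|[]]]; auto.
    - intros x x' y H1 H2. rewrite HNR in H1, H2. eapply (KS3 _ _ KSb); eauto.
    - intros x y H. rewrite HNR in H. eapply (KS4 _ _ KSb); eauto.
    - rewrite HNR. apply (KS5 _ _ KSb).
    - intros x. rewrite Hsu. apply (KS6 _ _ KSb). }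
  split.
  { intros HPi Hsi Q y HQ Hy Hyi. destruct (Hsh Q true HQ) as [[m0 [H0 H1]]|[[P [HP [_ [_ ->]]]]|[j [Hj [_ ->]]]]].
    + destruct (H1 eq_refl) as [-> _]. eapply HPi; eauto.
    + simpl in Hy. apply in_app_iff in Hy. destruct Hy as [Hy|Hy].
      * apply in_repl in Hy. destruct Hy as [Hy|[-> _]]; [|simpl; auto].
        eapply HPi; eauto. apply in_app_iff; auto.
      * eapply HPi; eauto. apply in_app_iff; auto.
    + simpl in Hy. destruct Hy as [<-|[<-|[]]]; simpl; auto. simpl in Hyi. exfalso; apply (Hsi j); auto. }
  intros HnR psi'. destruct (existsb (hasR psi' i) b') eqn:E; auto. exfalso.
  destruct (existsb_hasR psi' i b' E) as [Q [HQ HBQ]].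
  destruct (Hsh Q true HQ) as [[m0 [H0 H1]]|[[P [HP [_ [_ ->]]]]|[j [Hj [_ ->]]]]].
  - destruct (H1 eq_refl) as [-> _].
    assert (existsb (hasR psi' i) b = true); [|rewrite HnR in H; discriminate].
    apply existsb_exists. exists (NI Q, true). split; auto. simpl. apply existsb_exists.
    exists (Box psi', i). split; auto. apply lf_eqb_true; auto.
  - simpl in HBQ.
    assert (existsb (hasR psi' i) b = true); [|rewrite HnR in H; discriminate].
    apply existsb_exists. exists (NI P, true). split; auto. simpl. apply existsb_exists.
    exists (Box psi', i). split; auto. apply lf_eqb_true; auto.
  - simpl in HBQ. destruct HBQ as [H|[]]. discriminate.
Qed.

Lemma step4_props phi i b b' : step4 i b b' ->
  (~ has_box_at i b /\ b' = b) \/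
  (has_box_at i b /\
   incl (labs b) (labs b') /\
   (forall x y, NRb b' x y -> NRb b x y \/ (x = i /\ ~ In y (labs b))) /\
   (forall x, HotL b' x -> HotL b x) /\
   (forall x, incl (succs x b) (succs x b')) /\
   (exists k, In k (succs i b')) /\
   (KS phi b -> KS phi b') /\
   (forall P m, In (NI P, m) b' <-> In (NI P, m) b) /\
   (Pi i b -> (forall j, In j (succs i b) -> j <> i) -> Pi i b' /\ (forall j, In j (succs i b') -> j <> i))).
Proof.
  intros [[Hb [k [Hf ->]]]|[Hn ->]]; [right|left; auto].
  assert (Hi : In i (labs b)).
  { destruct Hb as [P [psi [HP Hx]]]. apply (labs_NI b P true (Box psi, i) HP Hx). }
  assert (Hki : k <> i) by (intros ->; contradiction).
  assert (Hsu : forall x, succs x (b ++ [(NR i k, false)]) = succs x b ++ (if PeanoNat.Nat.eqb x i then [k] else [])).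
  { intros x. rewrite succs_app. simpl. destruct (PeanoNat.Nat.eqb x i); simpl; reflexivity. }
  assert (HNR : forall x y, NRb (b ++ [(NR i k, false)]) x y -> NRb b x y \/ (x = i /\ y = k)).
  { intros x y H. rewrite NRb_succs, Hsu in H. apply in_app_iff in H.
    destruct H as [H|H]; [left; apply NRb_succs; auto|].
    destruct (PeanoNat.Nat.eqb_spec x i) as [->|]; [|destruct H].
    destruct H as [<-|[]]. right; auto. }
  assert (HA : forall P m, In (NI P, m) (b ++ [(NR i k, false)]) <-> In (NI P, m) b).
  { intros P m. rewrite in_app_iff. simpl. intuition discriminate. }
  split; [auto|]. split.
  { apply labs_incl. intros n Hn. rewrite bnodes_app. apply in_app_iff; auto. }
  split. { intros x y H. destruct (HNR x y H) as [H'|[-> ->]]; auto. }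
  split. { intros x [Q [y [HQ Hy]]]. exists Q, y. rewrite HA in HQ. auto. }
  split. { intros x z Hz. rewrite Hsu. apply in_app_iff; auto. }
  split. { exists k. rewrite Hsu, PeanoNat.Nat.eqb_refl. apply in_app_iff; simpl; auto. }
  split.
  { intros KSb. constructor.
    - intros Q m HQ. rewrite HA in HQ. eapply (KS0 _ _ KSb); eauto.
    - intros x x' y H1 H2. destruct (HNR x y H1) as [H1'|[E1 E2]]; destruct (HNR x' y H2) as [H2'|[E3 E4]].
      + eapply (KS3 _ _ KSb); eauto.
      + exfalso. apply Hf. subst. apply (NRb_labs b x k H1').
      + exfalso. apply Hf. subst. apply (NRb_labs b x' k H2').
      + congruence.
    - intros x y H. destruct (HNR x y H) as [H'|[-> ->]]; [eapply (KS4 _ _ KSb); eauto|].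
      split; auto. intros ->. apply Hf. apply (NRb_labs b 1 2 (KS5 _ _ KSb)).
    - rewrite NRb_succs, Hsu. apply in_app_iff. left. apply NRb_succs. apply (KS5 _ _ KSb).
    - intros x. rewrite Hsu. pose proof (KS6 _ _ KSb x). destruct (PeanoNat.Nat.eqb_spec x i) as [->|].
      + apply nodup_app_fresh; auto. intros Hj. apply Hf. apply (NRb_labs b i k). apply NRb_succs; auto.
      + rewrite app_nil_r; auto. }
  split; [auto|].
  intros HPi Hsi. split.
  - intros Q y HQ. rewrite HA in HQ. eapply HPi; eauto.
  - intros j Hj. rewrite Hsu, PeanoNat.Nat.eqb_refl in Hj. apply in_app_iff in Hj.
    destruct Hj as [H|[<-|[]]]; auto.
Qed.

Definition AccR (phi : form) (i : nat) (b3 b : branch) : Prop :=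
  incl (labs b3) (labs b) /\
  (forall x y, NRb b x y -> NRb b3 x y \/ (x = i /\ ~ In y (labs b3))) /\
  (forall x, HotL b x -> HotL b3 x \/ In x (succs i b)) /\
  KS phi b /\ Pi i b /\ (forall j, In j (succs i b) -> j <> i) /\ (exists k, In k (succs i b)).

Lemma acc_step5 phi i b3 b b' : AccR phi i b3 b -> step5_one i b b' -> AccR phi i b3 b'.
Proof.
  intros [A1 [A2 [A3 [A4 [A5 [A6 [k A7]]]]]]] Hs.
  destruct (step5_props phi i b b' Hs) as [B1 [B2 [B3 [B4 [B5 B6]]]]].
  destruct (B6 A5 A6) as [C1 C2].
  split; [intros x Hx; auto|]. split.
  { intros x y H. destruct (B2 x y H) as [H'|[-> Hy]]; [apply A2; auto|].
    right; split; auto; intros Hy'; apply Hy; apply A1; auto. }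
  split.
  { intros x H. destruct (B3 x H) as [H'|H'].
    - destruct (A3 x H') as [H''|H'']; [left; auto|right; apply B4; auto].
    - right; auto. }
  split; [auto|]. split; [auto|]. split; [auto|]. exists k. apply B4; auto.
Qed.

Lemma acc_step6 phi i b3 b b' : AccR phi i b3 b -> step6_one i b b' -> AccR phi i b3 b'.
Proof.
  intros [A1 [A2 [A3 [A4 [A5 [A6 [k A7]]]]]]] Hs.
  destruct (step6_props phi i b b' Hs) as [B1 [B2 [B3 [B4 [B5 [B6 _]]]]]].
  split; [intros x Hx; auto|]. split.
  { intros x y H. rewrite B2 in H. auto. }
  split.
  { intros x H. destruct (B3 x H) as [H'|H']; [|right; auto].
    destruct (A3 x H') as [H''|H'']; [left; auto|right; rewrite B4; auto]. }
  split; [auto|]. split; [auto|]. split; [rewrite B4; auto|]. exists k. rewrite B4. auto.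
Qed.

Lemma crt_inv {X : Type} (st : X -> X -> Prop) (Inv : X -> Prop) :
  (forall b b', Inv b -> st b b' -> Inv b') ->
  forall b b', clos_refl_trans_1n _ st b b' -> Inv b -> Inv b'.
Proof. intros H b b' Hc. induction Hc; auto. intros; apply IHHc; eauto. Qed.

Lemma crt_nostep {X : Type} (st : X -> X -> Prop) b b' :
  (forall b'', ~ st b b'') -> clos_refl_trans_1n _ st b b' -> b' = b.
Proof. intros H Hc. destruct Hc; auto. exfalso; eapply H; eauto. Qed.

Definition pex_b (b : branch) : Prop :=
  forall P x, In (NI P, true) b -> In x (lhs P ++ rhs P) -> is_box_or_atom (fst x).

Lemma hot_box b x : Pi x b -> HotL b x -> ~ noR x b \/ ~ noL x b.
Proof.
  intros HPi [P [y [HP [Hy [Hyx Hmd]]]]].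
  pose proof (HPi P y HP Hy Hyx) as Hb. destruct y as [f l]; simpl in *; subst l.
  destruct f; simpl in Hb, Hmd; try lia; try contradiction.
  apply in_app_iff in Hy. destruct Hy as [Hy|Hy].
  - right. intros HL. specialize (HL f). rewrite <- Bool.not_true_iff_false in HL. apply HL.
    apply existsb_exists. exists (NI P, true). split; auto. simpl. apply existsb_exists.
    exists (Box f, x). split; auto. apply lf_eqb_true; auto.
  - left. intros HR. specialize (HR f). rewrite <- Bool.not_true_iff_false in HR. apply HR.
    apply existsb_exists. exists (NI P, true). split; auto. simpl. apply existsb_exists.
    exists (Box f, x). split; auto. apply lf_eqb_true; auto.
Qed.

Lemma hasbox_hot i b : has_box_at i b -> HotL b i.
Proof.
  intros [P [psi [HP Hx]]]. exists P, (Box psi, i). repeat split; auto. simpl. lia.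
Qed.

Lemma round_nobox i b3 b4 b5 b6 : step4 i b3 b4 -> step5 i b4 b5 -> step6 i b5 b6 ->
  ~ has_box_at i b3 -> b6 = b3.
Proof.
  intros H4 [H5 _] [H6 _] Hn.
  destruct H4 as [[Hb _]|[_ ->]]; [contradiction|].
  assert (N5 : forall b'', ~ step5_one i b3 b'').
  { intros b'' Hs. destruct Hs as [psi [j [Hex _]]].
    destruct (existsb_hasR psi i b3 Hex) as [P [HP HB]]. apply Hn. exists P, psi. split; auto.
    apply in_app_iff; auto. }
  assert (N6 : forall b'', ~ step6_one i b3 b'').
  { intros b'' Hs. destruct Hs as [psi [Hex _]].
    destruct (existsb_hasL psi i b3 Hex) as [P [HP HB]]. apply Hn. exists P, psi. split; auto.
    apply in_app_iff; auto. }
  rewrite (crt_nostep _ _ _ N5 H5) in H6. exact (crt_nostep _ _ _ N6 H6).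
Qed.

Lemma round_K phi i b3 b4 b5 b6 : K phi b3 -> pex_b b3 ->
  step4 i b3 b4 -> step5 i b4 b5 -> step6 i b5 b6 -> K phi b6.
Proof.
  intros Kb Hpex H4 H5 H6.
  destruct (classic (has_box_at i b3)) as [Hb|Hn]; [|rewrite (round_nobox i b3 b4 b5 b6); auto].
  destruct (step4_props phi i b3 b4 H4) as [[Hn _]|[_ [B1 [B2 [B3 [B4 [B5 [B6 [B7 B8]]]]]]]]]; [contradiction|].
  assert (Hi3 : HotL b3 i) by (apply hasbox_hot; auto).
  assert (HPi3 : Pi i b3) by (intros P y HP Hy _; eapply Hpex; eauto).
  assert (Hsi3 : forall j, In j (succs i b3) -> j <> i).
  { intros j Hj ->. apply NRb_succs in Hj. apply (KS4 _ _ (KS_of_K _ _ Kb) i i Hj). auto. }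
  destruct (B8 HPi3 Hsi3) as [C1 C2].
  assert (A4 : AccR phi i b3 b4).
  { split; auto. split; auto. split; [intros x Hx; left; auto|]. split; [apply B6; apply KS_of_K; auto|].
    split; auto. }
  destruct H5 as [H5 HnR5]. destruct H6 as [H6 HnL6].
  pose proof (crt_inv _ _ (acc_step5 phi i b3) b4 b5 H5 A4) as A5.
  pose proof (crt_inv _ _ (acc_step6 phi i b3) b5 b6 H6 A5) as A6.
  assert (HnR6 : noR i b6).
  { apply (crt_inv _ (noR i) (fun b b' Hb Hs => proj2 (proj2 (proj2 (proj2 (proj2 (proj2 (step6_props phi i b b' Hs)))))) Hb) b5 b6 H6).
    exact HnR5. }
  destruct A6 as [D1 [D2 [D3 [D4 [D5 [D6 D7]]]]]].
  assert (F3 : ~ HotL b6 i).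
  { intros Hh. destruct (hot_box b6 i D5 Hh) as [H|H]; auto. }
  assert (HK2 : forall x y, NRb b6 x y -> (x, y) <> (1%nat, 2%nat) -> ~ HotL b6 x).
  { intros x y Hxy Hne Hx. destruct (D3 x Hx) as [Hx3|Hxs].
    - destruct (D2 x y Hxy) as [H3|[-> _]]; [|contradiction].
      apply (K2 _ _ Kb x y H3 Hne Hx3).
    - destruct (D2 x y Hxy) as [H3|[-> _]]; [|contradiction].
      apply NRb_succs in Hxs. destruct (D2 i x Hxs) as [Hix|[_ Hx']].
      + exact (proj2 (K1 _ _ Kb i x Hix Hi3) y H3).
      + apply Hx'. apply (NRb_labs b3 x y H3). }
  constructor.
  - apply (KS0 _ _ D4).
  - intros x y Hxy Hx.
    destruct (PeanoNat.Nat.eq_dec x 1) as [->|Hx1]; [destruct (PeanoNat.Nat.eq_dec y 2) as [->|Hy2]|].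
    + destruct (D3 1%nat Hx) as [H13|H1s].
      2:{ exfalso. apply NRb_succs in H1s. destruct (KS4 _ _ D4 i 1 H1s) as [H _]. apply H; auto. }
      destruct (K1 _ _ Kb 1 2 (K5 _ _ Kb) H13) as [N2 N2s].
      split.
      * intros H2. destruct (D3 2%nat H2) as [H23|H2s]; [contradiction|].
        apply NRb_succs in H2s. pose proof (KS3 _ _ D4 i 1 2 H2s Hxy) as ->. contradiction.
      * intros z Hz. destruct (D2 2%nat z Hz) as [H|[E _]]; [apply (N2s z); auto|].
        subst i. apply N2. exact Hi3.
    + exfalso. apply (HK2 1%nat y Hxy); auto. intros E; injection E; auto.
    + exfalso. apply (HK2 x y Hxy); auto. intros E; injection E; auto.
  - exact HK2.
  - apply (KS3 _ _ D4).
  - apply (KS4 _ _ D4).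
  - apply (KS5 _ _ D4).
  - apply (KS6 _ _ D4).
Qed.

Definition Ival (RelM : nat -> nat -> Prop) (VM : nat -> nat -> R) (vB : form -> nat -> R)
  (f : form) (x : nat) : R :=
  match f with BVar a => vB a x | _ => eval RelM VM f x end.

Definition Hb RelM VM vB (Cs : nat -> Prop) (b : branch) : Prop :=
  (forall P, In (NI P, true) b -> holds (Ival RelM VM vB) P) /\
  (forall x y, NRb b x y -> RelM x y) /\
  (forall x y, Cs x -> RelM x y -> NRb b x y).

Lemma Ival_pure RelM VM vB f x : pure f -> Ival RelM VM vB f x = eval RelM VM f x.
Proof. destruct f; simpl; tauto. Qed.

Lemma holds_slk v P : holds v P <-> (if strict P then 0 < slk v P else 0 <= slk v P).
Proof. unfold holds, slk. destruct (strict P); split; intros; lra. Qed.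

Lemma wf_pure phi f : wf phi f -> (forall a, f <> BVar a) -> pure f.
Proof. intros [[H _]|[a [-> _]]] Hn; auto. exfalso; apply (Hn a); auto. Qed.

Lemma back_prop phi RelM VM vB P a :
  prop_app P a -> (forall y, In y (lhs P ++ rhs P) -> wf phi (fst y)) ->
  slack_rel (Ival RelM VM vB) P a.
Proof.
  intros Ha Hw. apply (prop_slack _ (wf phi)); auto; intros;
    repeat match goal with H : wf phi ?f |- _ =>
      let Hp := fresh in assert (Hp : pure f) by (apply (wf_pure phi); auto; intros ? E; discriminate E);
      clear H end; simpl in *;
    repeat rewrite Ival_pure by tauto; reflexivity.
Qed.

Lemma back_pstep phi RelM VM vB Cs b bs b' : pstep b bs -> In b' bs ->
  (forall P m, In (NI P, m) b -> forall y, In y (lhs P ++ rhs P) -> wf phi (fst y)) ->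
  Hb RelM VM vB Cs b' -> Hb RelM VM vB Cs b.
Proof.
  intros Hp Hb' Hw [H1 [H2 H3]].
  destruct (act_pstep b bs b' Hp Hb') as [HNR _].
  split; [|split].
  - intros Q HQ. destruct Hp as [b1 b2 P cs Ha|b1 b2 P c1 c2 Ha];
      simpl in Hb'; repeat match goal with H : _ \/ _ |- _ => destruct H | H : False |- _ => destruct H end;
      subst b'.
    + apply in_app_iff in HQ. simpl in HQ. destruct HQ as [HQ|[HQ|HQ]].
      * apply H1. apply in_app_iff; auto.
      * injection HQ as ->.
        assert (HP : In (NI Q, true) (b1 ++ (NI Q, true) :: b2)) by (apply in_app_iff; simpl; auto).
        destruct (back_prop phi RelM VM vB Q _ Ha (Hw Q true HP)) as [_ [c [Hc Hle]]].
        pose proof (H1 c ltac:(apply in_app_iff; right; right; apply in_app_iff; right;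
          apply in_map_iff; exists c; auto)) as Hc'.
        destruct (back_prop phi RelM VM vB Q _ Ha (Hw Q true HP)) as [Hall _].
        destruct (Hall c Hc) as [Hs _].
        rewrite holds_slk in Hc' |- *. rewrite Hs in Hc'. destruct (strict Q); lra.
      * apply H1. apply in_app_iff; right; right; apply in_app_iff; auto.
    + apply in_app_iff in HQ. simpl in HQ. destruct HQ as [HQ|[HQ|HQ]].
      * apply H1. apply in_app_iff; auto.
      * injection HQ as ->.
        assert (HP : In (NI Q, true) (b1 ++ (NI Q, true) :: b2)) by (apply in_app_iff; simpl; auto).
        destruct (back_prop phi RelM VM vB Q _ Ha (Hw Q true HP)) as [Hs1 [_ [_ [Hl1 _]]]].
        pose proof (H1 c1 ltac:(apply in_app_iff; right; right; apply in_app_iff; simpl; auto)) as Hc'.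
        rewrite holds_slk in Hc' |- *. rewrite Hs1 in Hc'. destruct (strict Q); lra.
      * apply H1. apply in_app_iff; right; right; apply in_app_iff; auto.
    + apply in_app_iff in HQ. simpl in HQ. destruct HQ as [HQ|[HQ|HQ]].
      * apply H1. apply in_app_iff; auto.
      * injection HQ as ->.
        assert (HP : In (NI Q, true) (b1 ++ (NI Q, true) :: b2)) by (apply in_app_iff; simpl; auto).
        destruct (back_prop phi RelM VM vB Q _ Ha (Hw Q true HP)) as [_ [Hs2 [_ [_ Hl2]]]].
        pose proof (H1 c2 ltac:(apply in_app_iff; right; right; apply in_app_iff; simpl; auto)) as Hc'.
        rewrite holds_slk in Hc' |- *. rewrite Hs2 in Hc'. destruct (strict Q); lra.
      * apply H1. apply in_app_iff; right; right; apply in_app_iff; auto.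
  - intros x y H. apply H2. rewrite HNR. auto.
  - intros x y Hx Hr. rewrite <- HNR. auto.
Qed.

Lemma sumv_repl_le v psi i l : v (Box psi) i <= v (BVar psi) i -> sumv v l <= sumv v (repl psi i l).
Proof.
  intros H. induction l as [|x l IH]; [unfold repl; simpl; lra|].
  change (repl psi i (x :: l)) with ((if lf_eqb x (Box psi, i) then (BVar psi, i) else x) :: repl psi i l).
  rewrite !sumv_cons. destruct (lf_eqb x (Box psi, i)) eqn:E.
  - apply lf_eqb_true in E. subst. simpl. lra.
  - lra.
Qed.

Lemma sumv_repl_ge v psi i l : v (BVar psi) i <= v (Box psi) i -> sumv v (repl psi i l) <= sumv v l.
Proof.
  intros H. induction l as [|x l IH]; [unfold repl; simpl; lra|].
  change (repl psi i (x :: l)) with ((if lf_eqb x (Box psi, i) then (BVar psi, i) else x) :: repl psi i l).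
  rewrite !sumv_cons. destruct (lf_eqb x (Box psi, i)) eqn:E.
  - apply lf_eqb_true in E. subst. simpl. lra.
  - lra.
Qed.

Lemma in_deact_false (h : mnode -> bool) b m : In m b -> h m = false -> In m (deact h b).
Proof. intros H E. unfold deact. apply in_map_iff. exists m. rewrite E. auto. Qed.

Lemma in_concl5_intro psi i b P : In (NI P, true) b -> hasR psi i (NI P, true) = true ->
  In (act (mkI (lhs P) (strict P) (repl psi i (rhs P)))) (concl5 psi i b).
Proof. intros H E. unfold concl5. apply in_flat_map. exists (NI P, true). rewrite E. simpl; auto. Qed.

Lemma in_concl6_intro psi i b P : In (NI P, true) b -> hasL psi i (NI P, true) = true ->
  In (act (mkI (repl psi i (lhs P)) (strict P) (rhs P))) (concl6 psi i b).
Proof. intros H E. unfold concl6. apply in_flat_map. exists (NI P, true). rewrite E. simpl; auto. Qed.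

Lemma holds_marker v a x c y : holds v (mkI [(a, x)] false [(c, y)]) -> v c y <= v a x.
Proof. unfold holds, sumv; simpl. lra. Qed.

Lemma back_step5 phi RelM VM vB r Cs i b b' : 0 <= r -> (forall p x, Rabs (VM p x) <= r) ->
  step5_one i b b' -> ~ Cs i ->
  (forall P m, In (NI P, m) b -> forall y, In y (lhs P ++ rhs P) -> wf phi (fst y)) ->
  Hb RelM VM vB Cs b' -> Hb RelM VM vB Cs b.
Proof.
  intros hr hV Hs HCi Hw [H1 [H2 H3]].
  destruct (step5_shape i b b' Hs) as [psi [j [Hf [Hex [Hi [Hsu [Hbn _]]]]]]].
  destruct Hs as [psi' [j' [Hex' [Hf' Hb']]]].
  assert (Hpersist : forall x y, NRb b x y -> NRb b' x y).
  { intros x y H. unfold NRb in *. apply Hbn; auto. }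
  rewrite Hb' in H1, H2, H3.
  clear Hsu Hbn Hf Hex Hi. rename psi' into psi0. rename j' into j0.
  destruct (existsb_hasR psi0 i b Hex') as [P0 [HP0 HB0]].
  assert (Hpsi : pure psi0).
  { pose proof (Hw P0 true HP0 (Box psi0, i) ltac:(apply in_app_iff; auto)) as W.
    apply wf_pure in W; [simpl in W; auto|intros ? E; discriminate]. }
  assert (HR : RelM i j0). { apply H2. unfold NRb. rewrite !bnodes_app. apply in_app_iff; right.
    apply in_app_iff; right. simpl; auto. }
  assert (HM : holds (Ival RelM VM vB) (mkI [(BVar psi0, i)] false [(psi0, j0)])).
  { apply H1. apply in_app_iff; right; apply in_app_iff; right; simpl; auto. }
  apply holds_marker in HM. rewrite (Ival_pure RelM VM vB psi0 j0) in HM by auto.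
  assert (HBle : Ival RelM VM vB (Box psi0) i <= Ival RelM VM vB (BVar psi0) i).
  { change (Ival RelM VM vB (Box psi0) i) with (eval RelM VM (Box psi0) i).
    pose proof (box_le nat RelM VM r hr hV psi0 i j0 HR). lra. }
  split; [|split].
  - intros P HP. destruct (hasR psi0 i (NI P, true)) eqn:E.
    + pose proof (H1 _ (proj2 (in_app_iff _ _ _) (or_intror (proj2 (in_app_iff _ _ _) (or_introl (in_concl5_intro psi0 i b P HP E)))))) as HQ.
      unfold holds in HQ |- *; simpl in HQ.
      pose proof (sumv_repl_le (Ival RelM VM vB) psi0 i (rhs P) HBle).
      destruct (strict P); lra.
    + apply H1. apply in_app_iff; left. apply in_deact_false; auto.
  - intros x y H. apply H2. rewrite <- Hb'. apply Hpersist; auto.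
  - intros x y Hx Hr. specialize (H3 x y Hx Hr). rewrite <- Hb' in H3.
    destruct (step5_shape i b b' (ex_intro _ psi0 (ex_intro _ j0 (conj Hex' (conj Hf' Hb')))))
      as [psi1 [j1 [_ [_ [_ [Hsu _]]]]]].
    rewrite NRb_succs, Hsu in H3. apply in_app_iff in H3. destruct H3 as [H3|H3].
    + apply NRb_succs; auto.
    + destruct (PeanoNat.Nat.eqb_spec x i) as [->|]; [contradiction|destruct H3].
Qed.

Lemma back_step6 phi RelM VM vB r Cs i b b' : 0 <= r -> (forall p x, Rabs (VM p x) <= r) ->
  step6_one i b b' -> Cs i -> (exists k, NRb b i k) ->
  (forall P m, In (NI P, m) b -> forall y, In y (lhs P ++ rhs P) -> wf phi (fst y)) ->
  Hb RelM VM vB Cs b' -> Hb RelM VM vB Cs b.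
Proof.
  intros hr hV Hs HCi [k Hk] Hw [H1 [H2 H3]].
  destruct (step6_shape i b b' Hs) as [psi1 [_ [Hsu [Hbn _]]]].
  assert (HNR : forall x y, NRb b' x y <-> NRb b x y).
  { intros x y. rewrite !NRb_succs, Hsu. reflexivity. }
  destruct Hs as [psi [Hex Hb']].
  destruct (existsb_hasL psi i b Hex) as [P0 [HP0 HB0]].
  assert (Hpsi : pure psi).
  { pose proof (Hw P0 true HP0 (Box psi, i) ltac:(apply in_app_iff; auto)) as W.
    apply wf_pure in W; [simpl in W; auto|intros ? E; discriminate]. }
  rewrite Hb' in H1.
  assert (HBge : Ival RelM VM vB (BVar psi) i <= Ival RelM VM vB (Box psi) i).
  { change (Ival RelM VM vB (Box psi) i) with (eval RelM VM (Box psi) i).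
    apply (box_ge nat RelM VM r hr hV psi i).
    - exists k. apply H2. apply HNR; auto.
    - intros y Hy. specialize (H3 i y HCi Hy). rewrite HNR in H3. apply NRb_succs in H3.
      assert (HM : holds (Ival RelM VM vB) (mkI [(psi, y)] false [(BVar psi, i)])).
      { apply H1. apply in_app_iff; right; apply in_app_iff; right. apply in_map_iff.
        exists y; auto. }
      apply holds_marker in HM. rewrite (Ival_pure RelM VM vB psi y) in HM by auto. exact HM. }
  split; [|split].
  - intros P HP. destruct (hasL psi i (NI P, true)) eqn:E.
    + pose proof (H1 _ (proj2 (in_app_iff _ _ _) (or_intror (proj2 (in_app_iff _ _ _) (or_introl (in_concl6_intro psi i b P HP E)))))) as HQ.
      unfold holds in HQ |- *; simpl in HQ.
      pose proof (sumv_repl_ge (Ival RelM VM vB) psi i (lhs P) HBge).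
      destruct (strict P); lra.
    + apply H1. apply in_app_iff; left. apply in_deact_false; auto.
  - intros x y H. apply H2. apply HNR; auto.
  - intros x y Hx Hr. apply HNR. auto.
Qed.

Lemma back_step4 RelM VM vB Cs i b b' : step4 i b b' -> ~ Cs i ->
  Hb RelM VM vB Cs b' -> Hb RelM VM vB Cs b.
Proof.
  intros [[Hbx [k [Hf ->]]]|[_ ->]] HCi [H1 [H2 H3]]; [|split; auto].
  split; [|split].
  - intros P HP. apply H1. apply in_app_iff; auto.
  - intros x y H. apply H2. apply NRb_app; auto.
  - intros x y Hx Hr. specialize (H3 x y Hx Hr). apply NRb_app in H3. destruct H3 as [H3|H3]; auto.
    unfold NRb in H3. simpl in H3. destruct H3 as [H3|[]]. injection H3 as -> ->. contradiction.
Qed.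

Definition Cb (b : branch) (x : nat) : Prop := exists y, NRb b x y /\ (x, y) <> (1%nat, 2%nat).

Lemma Hb_weak RelM VM vB (Cs Cs' : nat -> Prop) b : (forall x, Cs' x -> Cs x) ->
  Hb RelM VM vB Cs b -> Hb RelM VM vB Cs' b.
Proof. intros H [H1 [H2 H3]]. split; [|split]; auto. Qed.

Lemma crt_back {X : Type} (st : X -> X -> Prop) (Inv G : X -> Prop) :
  (forall b b', st b b' -> Inv b -> Inv b') ->
  (forall b b', st b b' -> Inv b -> G b' -> G b) ->
  forall b b', clos_refl_trans_1n _ st b b' -> Inv b -> G b' -> G b.
Proof. intros H1 H2 b b' Hc. induction Hc; auto. intros HI HG. eapply H2; eauto. Qed.

Lemma persist5 i b b' x y : step5_one i b b' -> NRb b x y -> NRb b' x y.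
Proof. intros Hs H. destruct (step5_shape i b b' Hs) as [_ [_ [_ [_ [_ [_ [Hbn _]]]]]]]. apply Hbn; auto. Qed.
Lemma persist6 i b b' x y : step6_one i b b' -> NRb b x y -> NRb b' x y.
Proof. intros Hs H. destruct (step6_shape i b b' Hs) as [_ [_ [_ [Hbn _]]]]. apply Hbn; auto. Qed.

Lemma back_round phi RelM VM vB r i b3 b4 b5 b6 : 0 <= r -> (forall p x, Rabs (VM p x) <= r) ->
  K phi b3 -> pex_b b3 -> step4 i b3 b4 -> step5 i b4 b5 -> step6 i b5 b6 ->
  Hb RelM VM vB (Cb b6) b6 -> Hb RelM VM vB (Cb b3) b3.
Proof.
  intros hr hV Kb Hpex H4 H5 H6 HB.
  destruct (classic (has_box_at i b3)) as [Hbx|Hn]; [|rewrite (round_nobox i b3 b4 b5 b6 H4 H5 H6 Hn) in HB; auto].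
  assert (Hi3 : HotL b3 i) by (apply hasbox_hot; auto).
  assert (NC : ~ Cb b3 i).
  { intros [y [Hy Hne]]. apply (K2 _ _ Kb i y Hy Hne Hi3). }
  pose proof (KS_of_K _ _ Kb) as KS3.
  destruct (step4_props phi i b3 b4 H4) as [[Hn _]|[_ [_ [_ [_ [_ [_ [B6 _]]]]]]]]; [contradiction|].
  pose proof H4 as H4'.
  destruct H4' as [[_ [k [Hf E4]]]|[Hn _]]; [|contradiction].
  assert (Hk4 : NRb b4 i k). { subst b4. apply NRb_app. right. unfold NRb; simpl; auto. }
  assert (KS4 : KS phi b4) by auto.
  destruct H5 as [H5 _]. destruct H6 as [H6 _].
  assert (P5 : forall x y, NRb b4 x y -> NRb b5 x y).
  { intros x y. apply (crt_inv _ (fun b => NRb b x y) (fun b b' Hb Hs => persist5 i b b' x y Hs Hb) b4 b5 H5). }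
  assert (P6 : forall x y, NRb b5 x y -> NRb b6 x y).
  { intros x y. apply (crt_inv _ (fun b => NRb b x y) (fun b b' Hb Hs => persist6 i b b' x y Hs Hb) b5 b6 H6). }
  assert (P4 : forall x y, NRb b3 x y -> NRb b4 x y). { intros x y H. subst b4. apply NRb_app; auto. }
  assert (KS5 : KS phi b5).
  { apply (crt_inv _ (KS phi) (fun b b' Hb Hs => proj1 (proj2 (proj2 (proj2 (proj2 (step5_props phi i b b' Hs))))) Hb) b4 b5 H5 KS4). }
  set (Cs6 := fun x => Cb b3 x \/ x = i).
  assert (HB6 : Hb RelM VM vB Cs6 b6).
  { apply (Hb_weak _ _ _ (Cb b6)); auto. intros x [[y [Hy Hne]] | ->].
    - exists y. split; auto.
    - exists k. split; [apply P6, P5; auto|]. intros E. injection E as -> ->.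
      apply Hf. apply (NRb_labs b3 1 2 (K5 _ _ Kb)). }
  assert (HB5 : Hb RelM VM vB Cs6 b5).
  { apply (crt_back (step6_one i) (fun b => KS phi b /\ NRb b i k) (Hb RelM VM vB Cs6)) with b6; auto.
    - intros b b' Hs [HK HN]. split; [apply (proj1 (proj2 (proj2 (proj2 (proj2 (step6_props phi i b b' Hs)))))); auto|].
      eapply persist6; eauto.
    - intros b b' Hs [HK HN] HG. apply (back_step6 phi RelM VM vB r Cs6 i b b' hr hV Hs); auto.
      + right; auto.
      + exists k; auto.
      + apply (KS0 _ _ HK). }
  assert (HB5' : Hb RelM VM vB (Cb b3) b5) by (apply (Hb_weak _ _ _ Cs6); auto; intros x Hx; left; auto).
  assert (HB4 : Hb RelM VM vB (Cb b3) b4).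
  { apply (crt_back (step5_one i) (KS phi) (Hb RelM VM vB (Cb b3))) with b5; auto.
    - intros b b' Hs HK. apply (proj1 (proj2 (proj2 (proj2 (proj2 (step5_props phi i b b' Hs)))))); auto.
    - intros b b' Hs HK HG. apply (back_step5 phi RelM VM vB r (Cb b3) i b b' hr hV Hs NC); auto.
      apply (KS0 _ _ HK). }
  apply (back_step4 RelM VM vB (Cb b3) i b3 b4 H4 NC HB4).
Qed.

Definition lfsb (b : branch) : list lf :=
  flat_map (fun n => match n with NI P => lhs P ++ rhs P | NR _ _ => [] end) (bnodes b).

Definition VMf (v : form -> nat -> R) (b : branch) (p : nat) (x : nat) : R :=
  if in_dec lf_dec (Var p, x) (lfsb b) then v (Var p) x else 0.

Definition rMf (v : form -> nat -> R) (b : branch) : R :=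
  fold_right (fun y acc => Rabs (v (fst y) (snd y)) + acc) 0 (lfsb b).

Lemma rMf_pos v b : 0 <= rMf v b.
Proof. unfold rMf. induction (lfsb b); simpl; [lra|]. pose proof (Rabs_pos (v (fst a) (snd a))). lra. Qed.

Lemma VMf_bound v b p x : Rabs (VMf v b p x) <= rMf v b.
Proof.
  unfold VMf. destruct (in_dec lf_dec (Var p, x) (lfsb b)) as [H|H].
  - unfold rMf. apply (sum_in_le (fun y => Rabs (v (fst y) (snd y))) (lfsb b) (Var p, x)); auto.
    intros; apply Rabs_pos.
  - rewrite Rabs_R0. apply rMf_pos.
Qed.

Lemma base_Hb bF v :
  (forall P y, In (NI P, true) bF -> In y (lhs P ++ rhs P) -> cplx (fst y) = 0%nat) ->
  (forall P, In P (ineqs_of (bnodes bF)) -> (forall x, In x (lhs P ++ rhs P) -> atomLK' (fst x)) -> holds v P) ->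
  Hb (NRb bF) (VMf v bF) (fun a x => v (BVar a) x) (Cb bF) bF.
Proof.
  intros Hc Hv. split; [|split; auto].
  - intros P HP.
    assert (HPin : In P (ineqs_of (bnodes bF))).
    { unfold ineqs_of. apply in_flat_map. exists (NI P). split; [apply in_bnodes; eauto|simpl; auto]. }
    assert (Hat : forall x, In x (lhs P ++ rhs P) -> atomLK' (fst x)).
    { intros [f l] Hx. specialize (Hc P (f, l) HP Hx). simpl in *. destruct f; simpl in *; auto; discriminate. }
    specialize (Hv P HPin Hat).
    assert (E : forall l, incl l (lhs P ++ rhs P) -> sumv (Ival (NRb bF) (VMf v bF) (fun a x => v (BVar a) x)) l = sumv v l).
    { intros l Hl. apply sumv_ext. intros [f x] Hx. specialize (Hl _ Hx). simpl.
      pose proof (Hat _ Hl) as Ha. destruct f; simpl in Ha; try contradiction; simpl; auto.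
      unfold VMf. destruct (in_dec lf_dec (Var n, x) (lfsb bF)) as [_|Hn]; auto. exfalso. apply Hn.
      unfold lfsb. apply in_flat_map. exists (NI P). split; [apply in_bnodes; eauto|auto]. }
    unfold holds in *. rewrite !E; auto; intros y Hy; apply in_app_iff; auto.
Qed.

Definition Claim (phi : form) (S F : state) : Prop :=
  forall bF, In bF F -> sat_sys atomLK' (ineqs_of (bnodes bF)) ->
  exists b, In b S /\ (K phi b -> exists RelM VM vB r, 0 <= r /\ (forall p x, Rabs (VM p x) <= r) /\
                                   Hb RelM VM vB (Cb b) b).

Lemma claim_stop phi F : all_cplx0 F -> Claim phi F F.
Proof.
  intros Hc bF HF [v Hv]. exists bF. split; auto. intros _.
  exists (NRb bF), (VMf v bF), (fun a x => v (BVar a) x), (rMf v bF).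
  split; [apply rMf_pos|]. split; [apply VMf_bound|].
  apply base_Hb; auto. intros P y HP Hy. eapply Hc; eauto.
Qed.

Lemma claim_g3 phi S S' F : gstep3 S S' -> Claim phi S' F -> Claim phi S F.
Proof.
  intros [S1 b S2 bs Hp] HC bF HF Hs. destruct (HC bF HF Hs) as [b' [Hb' Hg]].
  apply in_app_iff in Hb'. destruct Hb' as [H|H]; [exists b'; split; auto; apply in_app_iff; auto|].
  apply in_app_iff in H. destruct H as [H|H]; [|exists b'; split; auto; rewrite in_app_iff; simpl; auto].
  exists b. split; [apply in_app_iff; simpl; auto|]. intros Kb.
  destruct (Hg (K_pstep phi b bs b' Hp H Kb)) as [RelM [VM [vB [r [hr [hV HB]]]]]].
  exists RelM, VM, vB, r. split; auto. split; auto.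
  destruct (act_pstep b bs b' Hp H) as [HNR _].
  apply (back_pstep phi RelM VM vB (Cb b) b bs b' Hp H (K0 _ _ Kb)).
  apply (Hb_weak _ _ _ (Cb b')); auto. intros x [y [Hy Hne]]. exists y. rewrite HNR. auto.
Qed.

Lemma Forall2_in_r {A B : Type} (Rl : A -> B -> Prop) l1 l2 y :
  Forall2 Rl l1 l2 -> In y l2 -> exists x, In x l1 /\ Rl x y.
Proof.
  induction 1; [intros []|]. intros [->|Hy]; [exists x; simpl; auto|].
  destruct (IHForall2 Hy) as [z [Hz Hr]]. exists z; simpl; auto.
Qed.

Lemma claim_456 phi i S3 S6 F : step456 i S3 S6 -> prop_exhausted S3 -> Claim phi S6 F -> Claim phi S3 F.
Proof.
  intros H456 Hpex HC bF HF Hs. destruct (HC bF HF Hs) as [b6 [Hb6 Hg]].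
  destruct (Forall2_in_r _ _ _ b6 H456 Hb6) as [b3 [Hb3 [b4 [b5 [H4 [H5 H6]]]]]].
  exists b3. split; auto. intros Kb.
  assert (Hp3 : pex_b b3) by (intros P x HP Hx; eapply Hpex; eauto).
  destruct (Hg (round_K phi i b3 b4 b5 b6 Kb Hp3 H4 H5 H6)) as [RelM [VM [vB [r [hr [hV HB]]]]]].
  exists RelM, VM, vB, r. split; auto. split; auto.
  eapply back_round; eauto.
Qed.

Lemma claim_crt phi S S3 F : clos_refl_trans_1n _ gstep3 S S3 -> Claim phi S3 F -> Claim phi S F.
Proof. induction 1; auto. intros; eapply claim_g3; eauto. Qed.

Lemma claim_run phi S F : complete_run S F -> Claim phi S F.
Proof.
  induction 1 as [S Hs|S S3 S6 F Hn H3 Hex Hor Hr IH].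
  - apply claim_stop; auto.
  - assert (C3 : Claim phi S3 F).
    { destruct Hor as [[i [_ H456]]|[_ ->]]; auto. eapply claim_456; eauto. }
    eapply claim_crt; eauto.
Qed.

Lemma K_init phi : pure phi -> K phi [(NI (mkI [] true [(phi, 1%nat)]), true); (NR 1 2, false)].
Proof.
  intros Hp.
  assert (HNR : forall x y, NRb [(NI (mkI [] true [(phi, 1%nat)]), true); (NR 1 2, false)] x y -> x = 1%nat /\ y = 2%nat).
  { intros x y H. unfold NRb in H. simpl in H. destruct H as [H|[H|[]]]; [discriminate|injection H; auto]. }
  assert (Hh : forall x, HotL [(NI (mkI [] true [(phi, 1%nat)]), true); (NR 1 2, false)] x -> x = 1%nat).
  { intros x [P [y [HP [Hy [Hyx _]]]]]. simpl in HP. destruct HP as [HP|[HP|[]]]; [|discriminate].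
    injection HP as <-. simpl in Hy. destruct Hy as [<-|[]]. simpl in Hyx. auto. }
  constructor.
  - intros P m HP y Hy. simpl in HP. destruct HP as [HP|[HP|[]]]; [|discriminate].
    injection HP as <- _. simpl in Hy. destruct Hy as [<-|[]]. left. split; auto. apply subs_refl.
  - intros x y H Hx. destruct (HNR x y H) as [-> ->]. split.
    + intros H2. specialize (Hh 2%nat H2). discriminate.
    + intros z Hz. destruct (HNR 2%nat z Hz) as [E _]. discriminate.
  - intros x y H Hne. destruct (HNR x y H) as [-> ->]. contradiction.
  - intros x x' y H1 H2. destruct (HNR x y H1) as [-> _]. destruct (HNR x' y H2) as [-> _]. auto.
  - intros x y H. destruct (HNR x y H) as [-> ->]. split; discriminate.
  - unfold NRb. simpl. auto.
  - intros x. simpl. destruct (PeanoNat.Nat.eqb x 1); simpl; repeat constructor; simpl; auto.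
Qed.

Theorem valid_closed_any phi F : pure phi -> KA_valid phi -> complete_run (init_state phi) F -> closed' F.
Proof.
  intros Hp Hv Hr. unfold closed'. apply Forall_forall. intros bF HF Hs.
  destruct (claim_run phi _ _ Hr bF HF Hs) as [b [Hb Hg]].
  simpl in Hb. destruct Hb as [<-|[]].
  destruct (Hg (K_init phi Hp)) as [RelM [VM [vB [r [hr [hV [H1 _]]]]]]].
  specialize (H1 _ (or_introl eq_refl)). unfold holds in H1. simpl in H1.
  unfold sumv in H1. simpl in H1. rewrite Ival_pure in H1 by auto.
  specialize (Hv nat RelM VM r hr hV 1%nat). lra.
Qed.

Close Scope R_scope.

Fixpoint wc (c : nat) (f : form) : nat :=
  match f with
  | Var _ | BVar _ => 0
  | Zero => 1
  | Conj a b | Disj a b | Amp a b | Imp a b => 1 + wc c a + wc c b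
  | Box a => c + wc c a
  end.

Definition esum (c : nat) (l : list lf) : nat := list_sum (map (fun x => wc c (fst x)) l).
Definition eP (c : nat) (P : ineq) : nat := esum c (lhs P) + esum c (rhs P).
Definition wt (c : nat) (m : mnode) : nat :=
  match m with (NI P, true) => 3 ^ eP c P | _ => 0 end.
Definition gb (c : nat) (b : branch) : nat := list_sum (map (wt c) b).
Definition Phi (c : nat) (S : state) : nat := list_sum (map (fun b => 3 ^ gb c b) S).

Lemma esum_cons c x l : esum c (x :: l) = wc c (fst x) + esum c l.
Proof. reflexivity. Qed.
Lemma esum_app c l1 l2 : esum c (l1 ++ l2) = esum c l1 + esum c l2.
Proof. unfold esum. rewrite map_app, list_sum_app. reflexivity. Qed.
Lemma esum_perm c l l' : Permutation l l' -> esum c l = esum c l'.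
Proof. intros H. unfold esum. apply Permutation_list_sum. apply Permutation_map; auto. Qed.

Lemma gb_app c b1 b2 : gb c (b1 ++ b2) = gb c b1 + gb c b2.
Proof. unfold gb. rewrite map_app, list_sum_app. reflexivity. Qed.
Lemma gb_cons c m b : gb c (m :: b) = wt c m + gb c b.
Proof. reflexivity. Qed.
Lemma Phi_app c S1 S2 : Phi c (S1 ++ S2) = Phi c S1 + Phi c S2.
Proof. unfold Phi. rewrite map_app, list_sum_app. reflexivity. Qed.
Lemma Phi_cons c b S : Phi c (b :: S) = 3 ^ gb c b + Phi c S.
Proof. reflexivity. Qed.

Lemma prop_e c P a : prop_app P a -> forall q, In q (concl a) -> eP c q + 1 <= eP c P.
Proof.
  intros [P' [Hl [Hr [_ Hrule]]]] q Hq.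
  assert (E : eP c P = eP c P') by (unfold eP; rewrite (esum_perm c _ _ Hl), (esum_perm c _ _ Hr); auto).
  rewrite E. destruct Hrule; simpl in Hq;
    repeat match goal with H : _ \/ _ |- _ => destruct H | H : False |- _ => destruct H end; subst;
    unfold eP; cbn [lhs rhs]; rewrite ?esum_cons; cbn [fst wc]; lia.
Qed.

Lemma prop_one_len P cs : prop_app P (One cs) -> length cs <= 2.
Proof. intros [P' [_ [_ [_ Hrule]]]]. inversion Hrule; simpl; lia. Qed.

Lemma sum_concl_lt c P cs : prop_app P (One cs) ->
  list_sum (map (fun q => 3 ^ eP c q) cs) < 3 ^ eP c P.
Proof.
  intros Ha. pose proof (prop_one_len P cs Ha) as Hl.
  assert (Hb : forall q, In q cs -> 3 * 3 ^ eP c q <= 3 ^ eP c P).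
  { intros q Hq. pose proof (prop_e c P _ Ha q Hq) as He.
    replace (3 * 3 ^ eP c q) with (3 ^ (eP c q + 1)) by (rewrite Nat.pow_add_r; simpl; lia).
    apply Nat.pow_le_mono_r; lia. }
  destruct cs as [|q1 [|q2 [|q3 cs]]]; simpl in *.
  - pose proof (Nat.pow_nonzero 3 (eP c P)). lia.
  - specialize (Hb q1 (or_introl eq_refl)). pose proof (Nat.pow_nonzero 3 (eP c q1)). lia.
  - pose proof (Hb q1 (or_introl eq_refl)). pose proof (Hb q2 (or_intror (or_introl eq_refl))).
    pose proof (Nat.pow_nonzero 3 (eP c q1)). lia.
  - lia.
Qed.

Lemma gb_map_act c cs : gb c (map act cs) = list_sum (map (fun q => 3 ^ eP c q) cs).
Proof. induction cs; simpl; auto. rewrite gb_cons, IHcs. reflexivity. Qed.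

Lemma pstep_gb c b bs b' : pstep b bs -> In b' bs -> gb c b' < gb c b.
Proof.
  intros Hp Hb'. destruct Hp as [b1 b2 P cs Ha|b1 b2 P c1 c2 Ha];
    simpl in Hb'; repeat match goal with H : _ \/ _ |- _ => destruct H | H : False |- _ => destruct H end;
    subst b'; rewrite !gb_app, !gb_cons, ?gb_app; simpl.
  - rewrite gb_map_act. pose proof (sum_concl_lt c P cs Ha). lia.
  - pose proof (prop_e c P _ Ha c1 (or_introl eq_refl)).
    assert (3 ^ eP c c1 < 3 ^ eP c P) by (apply Nat.pow_lt_mono_r; lia).
    unfold gb; simpl. fold (gb c b2). lia.
  - pose proof (prop_e c P _ Ha c2 (or_intror (or_introl eq_refl))).
    assert (3 ^ eP c c2 < 3 ^ eP c P) by (apply Nat.pow_lt_mono_r; lia).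
    unfold gb; simpl. fold (gb c b2). lia.
Qed.

Lemma wt_false c n : wt c (n, false) = 0.
Proof. destruct n; reflexivity. Qed.

Lemma gb_deact_flat_weak c (h : mnode -> bool) (Fm : mnode -> list mnode) b :
  (forall m, In m b -> h m = true -> gb c (Fm m) <= wt c m) ->
  gb c (deact h b) + gb c (flat_map (fun m => if h m then Fm m else []) b) <= gb c b.
Proof.
  induction b as [|m b IH]; intros H; simpl; [lia|].
  unfold deact in *. simpl. rewrite gb_app, !gb_cons.
  assert (IH' := IH (fun m' Hm' => H m' (or_intror Hm'))).
  destruct (h m) eqn:E.
  - rewrite wt_false. specialize (H m (or_introl eq_refl) E). lia.
  - simpl. lia.
Qed.

Lemma gb_deact_flat_strict c (h : mnode -> bool) (Fm : mnode -> list mnode) b D :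
  (forall m, In m b -> h m = true -> gb c (Fm m) + D <= wt c m) ->
  (exists m, In m b /\ h m = true) ->
  gb c (deact h b) + gb c (flat_map (fun m => if h m then Fm m else []) b) + D <= gb c b.
Proof.
  induction b as [|m b IH]; intros H [m0 [Hm0 Hh0]]; [destruct Hm0|].
  unfold deact in *. simpl. rewrite gb_app, !gb_cons.
  destruct (h m) eqn:E.
  - rewrite wt_false. pose proof (H m (or_introl eq_refl) E).
    pose proof (gb_deact_flat_weak c h Fm b (fun m' Hm' Hh => ltac:(specialize (H m' (or_intror Hm') Hh); lia))).
    unfold deact in H1. lia.
  - simpl. destruct Hm0 as [->|Hm0]; [congruence|].
    pose proof (IH (fun m' Hm' => H m' (or_intror Hm')) (ex_intro _ m0 (conj Hm0 Hh0))). lia.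
Qed.

Lemma esum_repl_le c psi i l : esum c (repl psi i l) <= esum c l.
Proof.
  induction l as [|x l IH]; [unfold repl; simpl; apply le_n|].
  change (repl psi i (x :: l)) with ((if lf_eqb x (Box psi, i) then (BVar psi, i) else x) :: repl psi i l).
  rewrite !esum_cons. destruct (lf_eqb x (Box psi, i)) eqn:E; simpl; [|lia].
  apply lf_eqb_true in E. subst. simpl. lia.
Qed.

Lemma esum_repl_lt c psi i l : In (Box psi, i) l -> esum c (repl psi i l) + (c + wc c psi) <= esum c l.
Proof.
  induction l as [|x l IH]; intros Hin; [destruct Hin|].
  change (repl psi i (x :: l)) with ((if lf_eqb x (Box psi, i) then (BVar psi, i) else x) :: repl psi i l).
  rewrite !esum_cons. destruct (lf_eqb x (Box psi, i)) eqn:E.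
  - apply lf_eqb_true in E. subst. simpl. pose proof (esum_repl_le c psi i l). lia.
  - destruct Hin as [->|Hin]; [rewrite (proj2 (lf_eqb_true _ _) eq_refl) in E; discriminate|].
    specialize (IH Hin). lia.
Qed.

Lemma pow3_split a d b : a + d <= b -> 3 ^ a + (3 ^ d - 1) <= 3 ^ b.
Proof.
  intros H. assert (H1 : 3 ^ (a + d) <= 3 ^ b) by (apply Nat.pow_le_mono_r; lia).
  rewrite Nat.pow_add_r in H1. pose proof (Nat.pow_nonzero 3 a). pose proof (Nat.pow_nonzero 3 d).
  nia.
Qed.

Lemma step5_gb c i b b' : 1 <= c -> step5_one i b b' -> gb c b' < gb c b.
Proof.
  intros Hc [psi [j [Hex [Hf ->]]]].
  set (D := 3 ^ (c + wc c psi) - 1).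
  pose proof (gb_deact_flat_strict c (hasR psi i)
    (fun m => match fst m with
              | NI P => [act (mkI (lhs P) (strict P) (repl psi i (rhs P)))]
              | NR _ _ => [] end) b D) as Hs.
  assert (Hm : 3 ^ wc c psi < D).
  { unfold D. rewrite Nat.pow_add_r. assert (3 <= 3 ^ c) by (apply (Nat.pow_le_mono_r 3 1 c); lia).
    pose proof (Nat.pow_nonzero 3 (wc c psi)). nia. }
  rewrite !gb_app, gb_cons, gb_cons. rewrite (wt_false c (NR i j)).
  unfold concl5.
  assert (Hmk : wt c (act {| lhs := [(BVar psi, i)]; strict := false; rhs := [(psi, j)] |}) = 3 ^ wc c psi).
  { simpl. unfold eP, esum. simpl. f_equal. lia. }
  rewrite Hmk.
  assert (H1 : forall m, In m b -> hasR psi i m = true ->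
     gb c (match fst m with NI P => [act (mkI (lhs P) (strict P) (repl psi i (rhs P)))] | NR _ _ => [] end) + D <= wt c m).
  { intros m Hm' E. apply hasR_true in E. destruct E as [P [-> HP]]. simpl.
    unfold gb. simpl. rewrite Nat.add_0_r. unfold D.
    apply pow3_split. unfold eP. simpl. pose proof (esum_repl_lt c psi i (rhs P) HP). lia. }
  specialize (Hs H1). apply existsb_exists in Hex. destruct Hex as [m0 [Hm0 Hh0]].
  specialize (Hs (ex_intro _ m0 (conj Hm0 Hh0))). simpl in Hs. change (gb c []) with 0 in *. lia.
Qed.

Lemma step6_gb c i b b' : 3 ^ c >= length (succs i b) + 2 -> step6_one i b b' -> gb c b' < gb c b.
Proof.
  intros Hc [psi [Hex ->]].
  set (D := 3 ^ (c + wc c psi) - 1).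
  pose proof (gb_deact_flat_strict c (hasL psi i)
    (fun m => match fst m with
              | NI P => [act (mkI (repl psi i (lhs P)) (strict P) (rhs P))]
              | NR _ _ => [] end) b D) as Hs.
  assert (Hmk : gb c (map (fun j => act {| lhs := [(psi, j)]; strict := false; rhs := [(BVar psi, i)] |}) (succs i b))
                = length (succs i b) * 3 ^ wc c psi).
  { generalize (succs i b). intros l. induction l as [|j l IH]; [reflexivity|].
    simpl map. rewrite gb_cons, IH. simpl length.
    unfold wt, act, eP, esum; simpl. rewrite !Nat.add_0_r. reflexivity. }
  assert (Hm : length (succs i b) * 3 ^ wc c psi < D).
  { unfold D. rewrite Nat.pow_add_r. pose proof (Nat.pow_nonzero 3 (wc c psi)). nia. }
  rewrite !gb_app, Hmk. unfold concl6.
  assert (H1 : forall m, In m b -> hasL psi i m = true ->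
     gb c (match fst m with NI P => [act (mkI (repl psi i (lhs P)) (strict P) (rhs P))] | NR _ _ => [] end) + D <= wt c m).
  { intros m Hm' E. apply hasL_true in E. destruct E as [P [-> HP]]. simpl.
    unfold gb. simpl. rewrite Nat.add_0_r. unfold D.
    apply pow3_split. unfold eP. simpl. pose proof (esum_repl_lt c psi i (lhs P) HP). lia. }
  specialize (Hs H1). apply existsb_exists in Hex. destruct Hex as [m0 [Hm0 Hh0]].
  specialize (Hs (ex_intro _ m0 (conj Hm0 Hh0))). simpl in Hs. change (gb c []) with 0 in *. lia.
Qed.

Lemma crt_trans {X : Type} (st : X -> X -> Prop) a b d :
  clos_refl_trans_1n _ st a b -> clos_refl_trans_1n _ st b d -> clos_refl_trans_1n _ st a d.
Proof. induction 1; auto. intros; econstructor; eauto. Qed.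

Lemma crt_ctx A T T' Cc : clos_refl_trans_1n _ gstep3 T T' ->
  clos_refl_trans_1n _ gstep3 (A ++ T ++ Cc) (A ++ T' ++ Cc).
Proof.
  induction 1 as [|T T1 T' Hs Hc IH]; [constructor|].
  econstructor; [|exact IH]. destruct Hs as [S1 b S2 bs Hp].
  replace (A ++ (S1 ++ b :: S2) ++ Cc) with ((A ++ S1) ++ b :: (S2 ++ Cc)) by (rewrite <- !app_assoc; reflexivity).
  replace (A ++ (S1 ++ bs ++ S2) ++ Cc) with ((A ++ S1) ++ bs ++ (S2 ++ Cc)) by (rewrite <- !app_assoc; reflexivity).
  constructor; auto.
Qed.

Lemma rule_exists P x : In x (lhs P ++ rhs P) -> ~ is_box_or_atom (fst x) -> exists a, prop_app P a.
Proof.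
  intros Hx Hn. destruct P as [l s r]. simpl in Hx. apply in_app_iff in Hx. destruct Hx as [Hx|Hx].
  - apply in_split in Hx. destruct Hx as [l1 [l2 ->]].
    assert (Hp : Permutation (l1 ++ x :: l2) (x :: l1 ++ l2)) by (symmetry; apply Permutation_middle).
    assert (Hr : exists a, prop_rule (mkI (x :: l1 ++ l2) s r) a).
    { destruct x as [[] i]; simpl in Hn; try (exfalso; apply Hn; exact I); eexists; constructor. }
    destruct Hr as [a Ha]. exists a, (mkI (x :: l1 ++ l2) s r). simpl. auto.
  - apply in_split in Hx. destruct Hx as [l1 [l2 ->]].
    assert (Hp : Permutation (l1 ++ x :: l2) (x :: l1 ++ l2)) by (symmetry; apply Permutation_middle).
    assert (Hr : exists a, prop_rule (mkI l s (x :: l1 ++ l2)) a).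
    { destruct x as [[] i]; simpl in Hn; try (exfalso; apply Hn; exact I); eexists; constructor. }
    destruct Hr as [a Ha]. exists a, (mkI l s (x :: l1 ++ l2)). simpl. auto.
Qed.

Lemma pow3_ge n : n + 1 <= 3 ^ n.
Proof. induction n; simpl; lia. Qed.

Lemma exh_branch phi c : forall n b, gb c b <= n -> K phi b ->
  exists bs, clos_refl_trans_1n _ gstep3 [b] bs /\ (forall b', In b' bs -> K phi b' /\ pex_b b') /\
             Phi c bs <= 3 ^ gb c b.
Proof.
  induction n as [|n IH]; intros b Hg Kb;
  (destruct (classic (pex_b b)) as [Hp|Hnp];
    [exists [b]; split; [constructor|split; [intros b' [<-|[]]; auto|unfold Phi; simpl; lia]]|]);
  (assert (exists P x, In (NI P, true) b /\ In x (lhs P ++ rhs P) /\ ~ is_box_or_atom (fst x)) as [P [x [HP [Hx Hnx]]]]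
    by (apply NNPP; intros Hne; apply Hnp; intros P x HP Hx; apply NNPP; intros Hn; apply Hne; eauto));
  destruct (rule_exists P x Hx Hnx) as [a Ha];
  apply in_split in HP; destruct HP as [b1 [b2 ->]].
  - (* n = 0 : impossible since gb > 0 *)
    exfalso. rewrite gb_app, gb_cons in Hg. simpl in Hg. pose proof (Nat.pow_nonzero 3 (eP c P)). lia.
  - destruct a as [cs|c1 c2].
    + set (b' := b1 ++ (NI P, false) :: b2 ++ map act cs).
      assert (Hps : pstep (b1 ++ (NI P, true) :: b2) [b']) by (constructor; auto).
      assert (Hlt := pstep_gb c _ _ b' Hps (or_introl eq_refl)).
      destruct (IH b' ltac:(lia) (K_pstep phi _ _ b' Hps (or_introl eq_refl) Kb)) as [bs [H1 [H2 H3]]].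
      exists bs. split; [|split; auto].
      * econstructor; [|exact H1]. apply (g3 [] _ [] [b']). auto.
      * assert (3 ^ gb c b' < 3 ^ gb c (b1 ++ (NI P, true) :: b2)) by (apply Nat.pow_lt_mono_r; lia). lia.
    + set (b1' := b1 ++ (NI P, false) :: b2 ++ [act c1]).
      set (b2' := b1 ++ (NI P, false) :: b2 ++ [act c2]).
      assert (Hps : pstep (b1 ++ (NI P, true) :: b2) [b1'; b2']) by (constructor; auto).
      assert (Hlt1 := pstep_gb c _ _ b1' Hps (or_introl eq_refl)).
      assert (Hlt2 := pstep_gb c _ _ b2' Hps (or_intror (or_introl eq_refl))).
      destruct (IH b1' ltac:(lia) (K_pstep phi _ _ b1' Hps (or_introl eq_refl) Kb)) as [bs1 [H1 [H2 H3]]].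
      destruct (IH b2' ltac:(lia) (K_pstep phi _ _ b2' Hps (or_intror (or_introl eq_refl)) Kb)) as [bs2 [H1' [H2' H3']]].
      exists (bs1 ++ bs2). split; [|split].
      * econstructor. { apply (g3 [] _ [] [b1'; b2']). auto. }
        simpl. apply crt_trans with (bs1 ++ [b2']).
        -- apply (crt_ctx [] [b1'] bs1 [b2']). auto.
        -- apply (crt_ctx bs1 [b2'] bs2 []) in H1'. rewrite !app_nil_r in H1'. exact H1'.
      * intros b' Hb'. apply in_app_iff in Hb'. destruct Hb'; auto.
      * rewrite Phi_app. set (g := gb c (b1 ++ (NI P, true) :: b2)) in *.
        assert (3 * 3 ^ gb c b1' <= 3 ^ g).
        { replace (3 * 3 ^ gb c b1') with (3 ^ (gb c b1' + 1)) by (rewrite Nat.pow_add_r; simpl; lia).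
          apply Nat.pow_le_mono_r; lia. }
        assert (3 * 3 ^ gb c b2' <= 3 ^ g).
        { replace (3 * 3 ^ gb c b2') with (3 ^ (gb c b2' + 1)) by (rewrite Nat.pow_add_r; simpl; lia).
          apply Nat.pow_le_mono_r; lia. }
        lia.
Qed.

Lemma exh_state phi c : forall S, (forall b, In b S -> K phi b) ->
  exists S3, clos_refl_trans_1n _ gstep3 S S3 /\ (forall b, In b S3 -> K phi b /\ pex_b b) /\
             Phi c S3 <= Phi c S.
Proof.
  induction S as [|b S IH]; intros HK.
  - exists []. split; [constructor|split; [intros ? []|auto]].
  - destruct (exh_branch phi c _ b (le_n _) (HK b (or_introl eq_refl))) as [bs [H1 [H2 H3]]].
    destruct (IH (fun b' Hb' => HK b' (or_intror Hb'))) as [S3 [G1 [G2 G3]]].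
    exists (bs ++ S3). split; [|split].
    + apply crt_trans with (bs ++ S).
      * apply (crt_ctx [] [b] bs S). auto.
      * apply (crt_ctx bs S S3 []) in G1. rewrite !app_nil_r in G1. exact G1.
    + intros b' Hb'. apply in_app_iff in Hb'. destruct Hb'; auto.
    + rewrite Phi_app, Phi_cons. lia.
Qed.

Lemma pex_state S : (forall b, In b S -> pex_b b) -> prop_exhausted S.
Proof. intros H b P x Hb HP Hx. eapply H; eauto. Qed.

Definition boxargs (phi : form) : list form :=
  nodup form_eq_dec (flat_map (fun f => match f with Box a => [a] | _ => [] end) (subs phi)).

Lemma boxargs_in phi psi : In (Box psi) (subs phi) -> In psi (boxargs phi).
Proof. intros H. unfold boxargs. apply nodup_In. apply in_flat_map. exists (Box psi). simpl; auto. Qed.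

Lemma count_lt (L : list form) (f f' : form -> bool) a : NoDup L ->
  (forall x, f' x = true -> f x = true) -> In a L -> f a = true -> f' a = false ->
  length (filter f' L) < length (filter f L).
Proof.
  induction L as [|y L IH]; intros Hnd Himp Ha Hfa Hfa'; [destruct Ha|].
  inversion Hnd; subst. simpl. destruct Ha as [->|Ha].
  - rewrite Hfa, Hfa'. simpl.
    assert (length (filter f' L) <= length (filter f L)).
    { clear -Himp. induction L; simpl; auto. destruct (f' a) eqn:E; [rewrite (Himp a E); simpl; lia|].
      destruct (f a); simpl; lia. }
    lia.
  - specialize (IH H2 Himp Ha Hfa Hfa').
    destruct (f' y) eqn:E; [rewrite (Himp y E); simpl; lia|]. destruct (f y); simpl; lia.
Qed.

Lemma count_le (L : list form) (f f' : form -> bool) :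
  (forall x, f' x = true -> f x = true) -> length (filter f' L) <= length (filter f L).
Proof.
  intros Himp. induction L as [|y L IH]; simpl; auto. destruct (f' y) eqn:E; [rewrite (Himp y E); simpl; lia|].
  destruct (f y); simpl; lia.
Qed.

Lemma in_repl' psi i l y : In y (repl psi i l) -> (In y l /\ y <> (Box psi, i)) \/ y = (BVar psi, i).
Proof.
  unfold repl. rewrite in_map_iff. intros [x [Hx Hin]].
  destruct (lf_eqb x (Box psi, i)) eqn:E.
  - subst. right; auto.
  - subst. left. split; auto. intros ->. rewrite (proj2 (lf_eqb_true _ _) eq_refl) in E. discriminate.
Qed.

Lemma existsb_hasR_intro psi i b P : In (NI P, true) b -> In (Box psi, i) (rhs P) -> existsb (hasR psi i) b = true.
Proof.
  intros HP Hx. apply existsb_exists. exists (NI P, true). split; auto. simpl. apply existsb_exists.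
  exists (Box psi, i). split; auto. apply lf_eqb_true; auto.
Qed.
Lemma existsb_hasL_intro psi i b P : In (NI P, true) b -> In (Box psi, i) (lhs P) -> existsb (hasL psi i) b = true.
Proof.
  intros HP Hx. apply existsb_exists. exists (NI P, true). split; auto. simpl. apply existsb_exists.
  exists (Box psi, i). split; auto. apply lf_eqb_true; auto.
Qed.

Lemma hasR_node_false psi i P : hasR psi i (NI P, true) = false -> ~ In (Box psi, i) (rhs P).
Proof.
  intros E Hin. simpl in E. rewrite <- Bool.not_true_iff_false in E. apply E. apply existsb_exists.
  exists (Box psi, i). split; auto. apply lf_eqb_true; auto.
Qed.
Lemma hasL_node_false psi i P : hasL psi i (NI P, true) = false -> ~ In (Box psi, i) (lhs P).
Proof.
  intros E Hin. simpl in E. rewrite <- Bool.not_true_iff_false in E. apply E. apply existsb_exists.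
  exists (Box psi, i). split; auto. apply lf_eqb_true; auto.
Qed.

Lemma step5_R i b psi j : existsb (hasR psi i) b = true -> bfresh j b ->
  let b' := deact (hasR psi i) b ++ concl5 psi i b ++
         [act (mkI [(BVar psi, i)] false [(psi, j)]); (NR i j, false)] in
  step5_one i b b' /\ existsb (hasR psi i) b' = false /\
  (forall psi', existsb (hasR psi' i) b' = true -> existsb (hasR psi' i) b = true).
Proof.
  intros Hex Hf b'. assert (Hs : step5_one i b b') by (exists psi, j; auto).
  destruct (step5_shape i b b' Hs) as [psi0 [j0 [_ [_ [Hi _]]]]].
  assert (Hji : j <> i) by (intros ->; contradiction).
  assert (Key : forall psi', existsb (hasR psi' i) b' = true -> psi' <> psi /\ existsb (hasR psi' i) b = true).
  { intros psi' H. destruct (existsb_hasR psi' i b' H) as [Q [HQ HB]].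
    unfold b' in HQ. apply in_app_iff in HQ. destruct HQ as [HQ|HQ].
    - apply in_deact in HQ. destruct HQ as [m0 [Hm0 Hm]]. destruct (Hm eq_refl) as [-> E].
      split; [intros ->; apply (hasR_node_false psi i Q E HB)|eapply existsb_hasR_intro; eauto].
    - apply in_app_iff in HQ. destruct HQ as [HQ|HQ].
      + apply in_concl5 in HQ. destruct HQ as [P [HP [_ Heq]]]. injection Heq as ->.
        simpl in HB. apply in_repl' in HB. destruct HB as [[HB Hne]|HB]; [|discriminate].
        split; [intros ->; auto|eapply existsb_hasR_intro; eauto].
      + simpl in HQ. destruct HQ as [HQ|[HQ|[]]]; [|discriminate]. injection HQ as <-.
        simpl in HB. destruct HB as [HB|[]]. injection HB as _ E. congruence. }
  split; [auto|split].
  - destruct (existsb (hasR psi i) b') eqn:E; auto. destruct (Key psi E); congruence.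
  - intros psi' H. apply (Key psi' H).
Qed.

Lemma step6_L i b psi : existsb (hasL psi i) b = true -> (forall j, In j (succs i b) -> j <> i) ->
  let b' := deact (hasL psi i) b ++ concl6 psi i b ++
         map (fun j => act (mkI [(psi, j)] false [(BVar psi, i)])) (succs i b) in
  step6_one i b b' /\ existsb (hasL psi i) b' = false /\
  (forall psi', existsb (hasL psi' i) b' = true -> existsb (hasL psi' i) b = true).
Proof.
  intros Hex Hsi b'. assert (Hs : step6_one i b b') by (exists psi; auto).
  assert (Key : forall psi', existsb (hasL psi' i) b' = true -> psi' <> psi /\ existsb (hasL psi' i) b = true).
  { intros psi' H. destruct (existsb_hasL psi' i b' H) as [Q [HQ HB]].
    unfold b' in HQ. apply in_app_iff in HQ. destruct HQ as [HQ|HQ].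
    - apply in_deact in HQ. destruct HQ as [m0 [Hm0 Hm]]. destruct (Hm eq_refl) as [-> E].
      split; [intros ->; apply (hasL_node_false psi i Q E HB)|eapply existsb_hasL_intro; eauto].
    - apply in_app_iff in HQ. destruct HQ as [HQ|HQ].
      + apply in_concl6 in HQ. destruct HQ as [P [HP [_ Heq]]]. injection Heq as ->.
        simpl in HB. apply in_repl' in HB. destruct HB as [[HB Hne]|HB]; [|discriminate].
        split; [intros ->; auto|eapply existsb_hasL_intro; eauto].
      + apply in_map_iff in HQ. destruct HQ as [j [Heq Hj]]. injection Heq as <-.
        simpl in HB. destruct HB as [HB|[]]. injection HB as _ E. exfalso; apply (Hsi j Hj); auto. }
  split; [auto|split].
  - destruct (existsb (hasL psi i) b') eqn:E; auto. destruct (Key psi E); congruence.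
  - intros psi' H. apply (Key psi' H).
Qed.

Definition countR (phi : form) (i : nat) (b : branch) : nat :=
  length (filter (fun psi => existsb (hasR psi i) b) (boxargs phi)).
Definition countL (phi : form) (i : nat) (b : branch) : nat :=
  length (filter (fun psi => existsb (hasL psi i) b) (boxargs phi)).

Lemma wf_box_sub phi psi : wf phi (Box psi) -> In psi (boxargs phi).
Proof. intros [[_ H]|[a [E _]]]; [apply boxargs_in; auto|discriminate]. Qed.

Lemma hasR_L phi i b psi : KS phi b -> existsb (hasR psi i) b = true -> In psi (boxargs phi).
Proof.
  intros KSb H. destruct (existsb_hasR psi i b H) as [P [HP Hx]]. apply wf_box_sub.
  apply (KS0 _ _ KSb P true HP (Box psi, i)). apply in_app_iff; auto.
Qed.
Lemma hasL_L phi i b psi : KS phi b -> existsb (hasL psi i) b = true -> In psi (boxargs phi).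
Proof.
  intros KSb H. destruct (existsb_hasL psi i b H) as [P [HP Hx]]. apply wf_box_sub.
  apply (KS0 _ _ KSb P true HP (Box psi, i)). apply in_app_iff; auto.
Qed.

Lemma not_noR i b : ~ noR i b -> exists psi, existsb (hasR psi i) b = true.
Proof.
  intros H. apply NNPP. intros Hn. apply H. intros psi. destruct (existsb (hasR psi i) b) eqn:E; auto.
  exfalso; apply Hn; eauto.
Qed.
Lemma not_noL i b : ~ noL i b -> exists psi, existsb (hasL psi i) b = true.
Proof.
  intros H. apply NNPP. intros Hn. apply H. intros psi. destruct (existsb (hasL psi i) b) eqn:E; auto.
  exfalso; apply Hn; eauto.
Qed.

Lemma count_pos (L : list form) (f : form -> bool) a : In a L -> f a = true -> 1 <= length (filter f L).
Proof.
  induction L as [|y L IH]; intros Ha Hf; [destruct Ha|]. simpl. destruct Ha as [->|Ha].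
  - rewrite Hf. simpl. lia.
  - specialize (IH Ha Hf). destruct (f y); simpl; lia.
Qed.

Lemma ex_step5 phi c i : 1 <= c -> forall n b, countR phi i b <= n -> KS phi b ->
  exists b5, clos_refl_trans_1n _ (step5_one i) b b5 /\ noR i b5 /\ KS phi b5 /\
    length (succs i b5) + countR phi i b5 <= length (succs i b) + countR phi i b /\
    (b5 = b \/ gb c b5 < gb c b) /\ gb c b5 <= gb c b.
Proof.
  intros Hc. induction n as [|n IH]; intros b Hn KSb;
    (destruct (classic (noR i b)) as [HnR|HnR];
     [exists b; split; [constructor|split; [auto|split; [auto|split; [lia|split; [auto|lia]]]]]|]);
    destruct (not_noR i b HnR) as [psi Hpsi];
    assert (HL := hasR_L phi i b psi KSb Hpsi).
  - exfalso. unfold countR in Hn. pose proof (count_pos _ (fun psi => existsb (hasR psi i) b) psi HL Hpsi). lia.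
  - destruct (fresh_exists (bnodes b)) as [j Hj].
    destruct (step5_R i b psi j Hpsi Hj) as [Hs [Hfalse Hmono]].
    set (b' := deact (hasR psi i) b ++ concl5 psi i b ++
         [act (mkI [(BVar psi, i)] false [(psi, j)]); (NR i j, false)]) in *.
    assert (Hcnt : countR phi i b' < countR phi i b).
    { unfold countR. apply (count_lt _ _ _ psi); auto. apply NoDup_nodup. }
    assert (Hsu : length (succs i b') = length (succs i b) + 1).
    { unfold b'. rewrite !succs_app, succs_deact.
      rewrite (succs_allNI i (concl5 psi i b)) by apply concl5_NI. simpl.
      rewrite PeanoNat.Nat.eqb_refl. rewrite length_app. simpl. lia. }
    assert (KS' : KS phi b') by (apply (proj1 (proj2 (proj2 (proj2 (proj2 (step5_props phi i b b' Hs)))))); auto).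
    pose proof (step5_gb c i b b' Hc Hs) as Hgb.
    destruct (IH b' ltac:(lia) KS') as [b5 [H1 [H2 [H3 [H4 [H5 H6]]]]]].
    exists b5. split; [econstructor; eauto|]. split; auto. split; auto. split; [lia|].
    split; [right; destruct H5 as [->|H5]; lia|lia].
Qed.

Lemma ex_step6 phi c i : forall n b, countL phi i b <= n -> KS phi b ->
  3 ^ c >= length (succs i b) + 2 ->
  exists b6, clos_refl_trans_1n _ (step6_one i) b b6 /\ noL i b6 /\ KS phi b6 /\
    succs i b6 = succs i b /\ (noR i b -> noR i b6) /\
    (b6 = b \/ gb c b6 < gb c b) /\ gb c b6 <= gb c b.
Proof.
  induction n as [|n IH]; intros b Hn KSb Hc;
    (destruct (classic (noL i b)) as [HnL|HnL];
     [exists b; split; [constructor|split; [auto|split; [auto|split; [auto|split; [auto|split; [auto|lia]]]]]]|]);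
    destruct (not_noL i b HnL) as [psi Hpsi];
    assert (HL := hasL_L phi i b psi KSb Hpsi).
  - exfalso. unfold countL in Hn. pose proof (count_pos _ (fun psi => existsb (hasL psi i) b) psi HL Hpsi). lia.
  - assert (Hsi : forall j, In j (succs i b) -> j <> i).
    { intros j Hj ->. apply NRb_succs in Hj. destruct (KS4 _ _ KSb i i Hj) as [_ H]. auto. }
    destruct (step6_L i b psi Hpsi Hsi) as [Hs [Hfalse Hmono]].
    set (b' := deact (hasL psi i) b ++ concl6 psi i b ++
         map (fun j => act (mkI [(psi, j)] false [(BVar psi, i)])) (succs i b)) in *.
    assert (Hcnt : countL phi i b' < countL phi i b).
    { unfold countL. apply (count_lt _ _ _ psi); auto. apply NoDup_nodup. }
    destruct (step6_props phi i b b' Hs) as [_ [_ [_ [Hsu [HKS [_ HnR]]]]]].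
    pose proof (step6_gb c i b b' ltac:(lia) Hs) as Hgb.
    destruct (IH b' ltac:(lia) (HKS KSb) ltac:(rewrite Hsu; lia)) as [b6 [H1 [H2 [H3 [H4 [H5 [H6 H7]]]]]]].
    exists b6. split; [econstructor; eauto|]. split; auto. split; auto. split; [rewrite H4; auto|].
    split; [auto|]. split; [right; destruct H6 as [->|H6]; lia|lia].
Qed.

Lemma nodup_all_eq (l : list nat) a : NoDup l -> (forall x, In x l -> x = a) -> length l <= 1.
Proof.
  intros Hnd H. destruct l as [|x [|y l]]; simpl; auto.
  inversion Hnd; subst. exfalso. apply H2. rewrite (H x), (H y); simpl; auto.
Qed.

Lemma count_le_len (L : list form) f : length (filter f L) <= length L.
Proof. induction L; simpl; auto. destruct (f a); simpl; lia. Qed.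

Lemma ex_round phi c i b3 : c = length (boxargs phi) + 4 -> K phi b3 -> pex_b b3 ->
  exists b6, (exists b4 b5, step4 i b3 b4 /\ step5 i b4 b5 /\ step6 i b5 b6) /\ K phi b6 /\
    gb c b6 <= gb c b3 /\ (has_box_at i b3 -> gb c b6 < gb c b3).
Proof.
  intros Hc Kb Hpex.
  destruct (classic (has_box_at i b3)) as [Hbx|Hn].
  2:{ exists b3. assert (H4 : step4 i b3 b3) by (right; auto).
      assert (NR3 : noR i b3).
      { intros psi. destruct (existsb (hasR psi i) b3) eqn:E; auto. exfalso. apply Hn.
        destruct (existsb_hasR psi i b3 E) as [P [HP Hx]]. exists P, psi. split; auto. apply in_app_iff; auto. }
      assert (NL3 : noL i b3).
      { intros psi. destruct (existsb (hasL psi i) b3) eqn:E; auto. exfalso. apply Hn.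
        destruct (existsb_hasL psi i b3 E) as [P [HP Hx]]. exists P, psi. split; auto. apply in_app_iff; auto. }
      split; [exists b3, b3; split; [auto|split; split; auto; constructor]|].
      split; auto. split; auto. intros; contradiction. }
  pose proof (KS_of_K _ _ Kb) as KS3.
  destruct (fresh_exists (bnodes b3)) as [k Hk].
  set (b4 := b3 ++ [(NR i k, false)]).
  assert (H4 : step4 i b3 b4) by (left; split; auto; exists k; auto).
  destruct (step4_props phi i b3 b4 H4) as [[Hn _]|[_ [_ [_ [_ [_ [_ [HKS4 [HA4 _]]]]]]]]]; [contradiction|].
  assert (KS4 : KS phi b4) by auto.
  assert (Hgb4 : gb c b4 = gb c b3) by (unfold b4; rewrite gb_app; simpl; unfold gb at 2; simpl; lia).
  assert (Hs3 : length (succs i b3) <= 1).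
  { apply (nodup_all_eq _ 2%nat (K6 _ _ Kb i)). intros y Hy. apply NRb_succs in Hy.
    destruct (PeanoNat.Nat.eq_dec i 1) as [->|Hi1].
    - destruct (PeanoNat.Nat.eq_dec y 2) as [->|Hy2]; auto. exfalso.
      apply (K2 _ _ Kb 1 y Hy); [intros E; injection E; auto|apply hasbox_hot; auto].
    - exfalso. apply (K2 _ _ Kb i y Hy); [intros E; injection E; auto|apply hasbox_hot; auto]. }
  assert (Hs4 : length (succs i b4) = length (succs i b3) + 1).
  { unfold b4. rewrite succs_app. simpl. rewrite PeanoNat.Nat.eqb_refl, length_app. simpl. lia. }
  assert (Hc1 : 1 <= c) by lia.
  destruct (ex_step5 phi c i Hc1 _ b4 (le_n _) KS4) as [b5 [G1 [G2 [G3 [G4 [G5 G6]]]]]].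
  assert (Hcnt : countR phi i b4 <= length (boxargs phi)) by apply count_le_len.
  assert (Hpow : 3 ^ c >= length (succs i b5) + 2) by (pose proof (pow3_ge c); lia).
  destruct (ex_step6 phi c i _ b5 (le_n _) G3 Hpow) as [b6 [L1 [L2 [L3 [L4 [L5 [L6 L7]]]]]]].
  assert (Hst5 : step5 i b4 b5) by (split; auto).
  assert (Hst6 : step6 i b5 b6) by (split; auto).
  exists b6. split; [exists b4, b5; auto|].
  split; [apply (round_K phi i b3 b4 b5 b6); auto|].
  assert (Hstrict : gb c b6 < gb c b3).
  { destruct G5 as [E5|G5]; destruct L6 as [E6|L6]; try lia.
    subst b5 b6. exfalso. destruct Hbx as [P [psi [HP Hx]]].
    assert (HP4 : In (NI P, true) b4) by (apply HA4; auto).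
    apply in_app_iff in Hx. destruct Hx as [Hx|Hx].
    - specialize (L2 psi). rewrite (existsb_hasL_intro psi i b4 P HP4 Hx) in L2. discriminate.
    - specialize (G2 psi). rewrite (existsb_hasR_intro psi i b4 P HP4 Hx) in G2. discriminate. }
  split; [lia|auto].
Qed.

Lemma ex_round_state phi c i : c = length (boxargs phi) + 4 -> forall S3,
  (forall b, In b S3 -> K phi b /\ pex_b b) ->
  exists S6, step456 i S3 S6 /\ (forall b, In b S6 -> K phi b) /\ Phi c S6 <= Phi c S3 /\
    ((exists b, In b S3 /\ has_box_at i b) -> Phi c S6 < Phi c S3).
Proof.
  intros Hc. induction S3 as [|b S3 IH]; intros HK.
  - exists []. split; [constructor|]. split; [intros ? []|]. split; auto. intros [b [[] _]].
  - destruct (HK b (or_introl eq_refl)) as [Kb Pb].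
    destruct (ex_round phi c i b Hc Kb Pb) as [b6 [Hst [K6' [Hle Hlt]]]].
    destruct (IH (fun b' Hb' => HK b' (or_intror Hb'))) as [S6 [H1 [H2 [H3 H4]]]].
    exists (b6 :: S6). split; [constructor; auto|].
    split; [intros b' [<-|Hb']; auto|].
    assert (3 ^ gb c b6 <= 3 ^ gb c b) by (apply Nat.pow_le_mono_r; lia).
    rewrite !Phi_cons. split; [lia|].
    intros [b' [[E|Hb'] Hbx]].
    + subst b'. assert (3 ^ gb c b6 < 3 ^ gb c b) by (apply Nat.pow_lt_mono_r; auto).
      lia.
    + specialize (H4 (ex_intro _ b' (conj Hb' Hbx))). lia.
Qed.

Lemma ex_run phi c : c = length (boxargs phi) + 4 -> forall n S, Phi c S <= n ->
  (forall b, In b S -> K phi b) -> exists F, complete_run S F.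
Proof.
  intros Hc. induction n as [|n IH]; intros S Hn HK;
  (destruct (classic (all_cplx0 S)) as [Ha|Ha]; [exists S; apply cr_stop; auto|]);
  destruct (exh_state phi c S HK) as [S3 [G1 [G2 G3]]];
  (destruct (classic (all_cplx0 S3)) as [Ha3|Ha3];
    [exists S3; exact (cr_round S S3 S3 S3 Ha G1 (pex_state S3 (fun b Hb => proj2 (G2 b Hb)))
                          (or_intror (conj Ha3 eq_refl)) (cr_stop S3 Ha3))|]);
  (assert (exists b P x, In b S3 /\ In (NI P, true) b /\ In x (lhs P ++ rhs P) /\ cplx (fst x) <> 0%nat)
     as [b [P [x [Hb [HP [Hx Hcx]]]]]]
     by (apply NNPP; intros Hne; apply Ha3; intros b P x Hb HP Hx;
         destruct (PeanoNat.Nat.eq_dec (cplx (fst x)) 0); auto; exfalso; apply Hne; eauto 7));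
  (assert (exists psi i, x = (Box psi, i)) as [psi [i ->]]
     by (destruct (G2 b Hb) as [_ Pb]; pose proof (Pb P x HP Hx) as Hbx;
         destruct x as [[] l]; simpl in Hbx, Hcx; try contradiction; eauto));
  (assert (Hbox : has_box_at i b) by (exists P, psi; auto));
  destruct (ex_round_state phi c i Hc S3 G2) as [S6 [R1 [R2 [R3 R4]]]];
  specialize (R4 (ex_intro _ b (conj Hb Hbox))).
  - lia.
  - destruct (IH S6 ltac:(lia) R2) as [F HF]. exists F.
    apply (cr_round S S3 S6 F); auto.
    + apply pex_state; intros b' Hb'; apply G2; auto.
    + left. exists i. split; [exists b; auto|auto].
Qed.

Theorem valid_to_LK' (phi : form) : pure phi -> KA_valid phi -> closed_complete_LK'_tableau phi.
Proof.
  intros Hp Hv.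
  destruct (ex_run phi (length (boxargs phi) + 4) eq_refl _ (init_state phi) (le_n _)) as [F HF].
  { intros b [<-|[]]. apply K_init; auto. }
  exists F. split; auto. apply (valid_closed_any phi F Hp Hv HF).
Qed.

Theorem theorem3p7 (phi : form) :
  pure phi ->
  (closed_complete_LK'_tableau phi <-> LKA_derivable phi) /\
  (LKA_derivable phi <-> KA_valid phi).
Proof.
  intros Hp. split; split; intros H.
  - apply LK'_to_LK; auto.
  - apply valid_to_LK'; auto. apply LK_sound_valid; auto.
  - apply LK_sound_valid; auto.
  - apply LK'_to_LK; auto. apply valid_to_LK'; auto.
Qed.
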